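(* For every word $C$ over the alphabet $\Sigma_D$ there exists a word $C'$ over $\Sigma_D$ in which the total number of occurrences of the symbols $CCX_{0,1}$, $CCX_{0,2}$, $CCX_{1,2}$ (the Toffoli count of $C'$) is at most $120$, and such that $[\![C]\!] = [\![C']\!]$.
   Context: Qubits are labelled $0,1,2$. The computational basis vector $|x_0x_1x_2\rangle$ ($x_i\in\{0,1\}$) is identified with the standard basis vector $e_{4x_0+2x_1+x_2}$ of $\mathbb{R}^8$, so a $2\times 2$ matrix $M$ acting on qubit $0$, $1$, $2$ is $M\otimes I\otimes I$, $I\otimes M\otimes I$, $I\otimes I\otimes M$ respectively, written $M_j$. Let $X=\begin{bmatrix}0&1\\1&0\end{bmatrix}$, $Z=\begin{bmatrix}1&0\\0&-1\end{bmatrix}$, $H=\frac{1}{\sqrt2}\begin{bmatrix}1&1\\1&-1\end{bmatrix}$. For $j\neq k$, $CX_{j,k}$ (resp. $CZ_{j,k}$) is the $8\times 8$ matrix sending $|x_0x_1x_2\rangle$ to $(X_k)^{x_j}|x_0x_1x_2\rangle$ (resp. $(Z_k)^{x_j}|x_0x_1x_2\rangle$). For $j<k$, $CCX_{j,k}$ sends $|x_0x_1x_2\rangle$ to $(X_l)^{x_jx_k}|x_0x_1x_2\rangle$ where $l$ is the element of $\{0,1,2\}\setminus\{j,k\}$. $K_{j,k}=H_jH_k$, and $\sigma_{j,k}$ is the permutation matrix swapping qubits $j$ and $k$. The alphabet $\Sigma_D$ consists of the $23$ symbols $X_0,X_1,X_2$; $CX_{k,l}$ for all $k\neq l$ in $\{0,1,2\}$;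 $CCX_{0,1},CCX_{0,2},CCX_{1,2}$; $Z_0,Z_1,Z_2$; $CZ_{0,1},CZ_{0,2},CZ_{1,2}$; $K_{0,1},K_{1,2}$; $\sigma_{0,1},\sigma_{0,2},\sigma_{1,2}$, each interpreted as the corresponding $8\times 8$ matrix. A word $w_1w_2\cdots w_m$ over $\Sigma_D$ is interpreted as the matrix product $[\![w_1w_2\cdots w_m]\!]=[\![w_1]\!][\![w_2]\!]\cdots[\![w_m]\!]$ (the empty word gives the identity). *)

(* Defs.v *)
From HB Require Import structures.
From mathcomp Require Import all_boot all_order all_algebra.
From mathcomp Require Import reals.
Set Implicit Arguments. Unset Strict Implicit. Unset Printing Implicit Defensive.
Import Order.TTheory GRing.Theory Num.Theory.
Local Open Scope ring_scope.

(* Basis index x : 'I_8 encodes |x0 x1 x2> with x = 4 x0 + 2 x1 + x2. *)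
Definition bit (j : 'I_3) (x : 'I_8) : bool := odd (x %/ 2 ^ (2 - j)).

Definition b2o (b : bool) : 'I_2 := inord (nat_of_bool b).

Definition mkidx (b : 'I_3 -> bool) : 'I_8 :=
  inord (4 * b (@inord 2 0) + 2 * b (@inord 2 1) + b (@inord 2 2)).

Section Gates.
Variable R : realType.

(* M_j = M acting on qubit j (tensor product with identities), entrywise *)
Definition one_q (M : 'M[R]_2) (j : 'I_3) : 'M[R]_8 :=
  \matrix_(x, y) if [forall k : 'I_3, (k != j) ==> (bit k x == bit k y)]
                 then M (b2o (bit j x)) (b2o (bit j y)) else 0.

Definition Xm : 'M[R]_2 := \matrix_(i, j) if i == j then 0 else 1.
Definition Zm : 'M[R]_2 := \matrix_(i, j) if i == j then (if i == 1 then -1 else 1) else 0.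
Definition Hm : 'M[R]_2 :=
  (Num.sqrt (2 : R))^-1 *: \matrix_(i, j) (if (i == 1) && (j == 1) then -1 else 1).

(* column y of the matrix is the image of e_y *)
(* |x> |-> U^{x_j} |x> *)
Definition ctrl (j : 'I_3) (U : 'M[R]_8) : 'M[R]_8 :=
  \matrix_(x, y) if bit j y then U x y else (x == y)%:R.
(* |x> |-> U^{x_j x_k} |x> *)
Definition ctrl2 (j k : 'I_3) (U : 'M[R]_8) : 'M[R]_8 :=
  \matrix_(x, y) if bit j y && bit k y then U x y else (x == y)%:R.

Definition swap_idx (j k : 'I_3) (x : 'I_8) : 'I_8 :=
  mkidx (fun i => bit (if i == j then k else if i == k then j else i) x).
Definition sigma (j k : 'I_3) : 'M[R]_8 :=
  \matrix_(x, y) (x == swap_idx j k y)%:R.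

End Gates.

Notation q0 := (@Ordinal 3 0 isT).
Notation q1 := (@Ordinal 3 1 isT).
Notation q2 := (@Ordinal 3 2 isT).

Inductive sym : Type :=
| sX0 | sX1 | sX2
| sCX01 | sCX02 | sCX10 | sCX12 | sCX20 | sCX21
| sCCX01 | sCCX02 | sCCX12
| sZ0 | sZ1 | sZ2
| sCZ01 | sCZ02 | sCZ12
| sK01 | sK12
| sS01 | sS02 | sS12.

Definition sem (R : realType) (s : sym) : 'M[R]_8 :=
  match s with
  | sX0 => one_q (Xm R) q0 | sX1 => one_q (Xm R) q1 | sX2 => one_q (Xm R) q2
  | sCX01 => ctrl q0 (one_q (Xm R) q1) | sCX02 => ctrl q0 (one_q (Xm R) q2)
  | sCX10 => ctrl q1 (one_q (Xm R) q0) | sCX12 => ctrl q1 (one_q (Xm R) q2)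
  | sCX20 => ctrl q2 (one_q (Xm R) q0) | sCX21 => ctrl q2 (one_q (Xm R) q1)
  | sCCX01 => ctrl2 q0 q1 (one_q (Xm R) q2)
  | sCCX02 => ctrl2 q0 q2 (one_q (Xm R) q1)
  | sCCX12 => ctrl2 q1 q2 (one_q (Xm R) q0)
  | sZ0 => one_q (Zm R) q0 | sZ1 => one_q (Zm R) q1 | sZ2 => one_q (Zm R) q2
  | sCZ01 => ctrl q0 (one_q (Zm R) q1) | sCZ02 => ctrl q0 (one_q (Zm R) q2)
  | sCZ12 => ctrl q1 (one_q (Zm R) q2)
  | sK01 => one_q (Hm R) q0 *m one_q (Hm R) q1
  | sK12 => one_q (Hm R) q1 *m one_q (Hm R) q2
  | sS01 => sigma R q0 q1 | sS02 => sigma R q0 q2 | sS12 => sigma R q1 q2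
  end.

Definition interp (R : realType) (w : seq sym) : 'M[R]_8 :=
  foldr (fun s M => sem R s *m M) 1%:M w.

Definition is_toffoli (s : sym) : bool :=
  match s with sCCX01 | sCCX02 | sCCX12 => true | _ => false end.

Definition toffoli_count (w : seq sym) : nat := count is_toffoli w.

(* Main.v *)
Require Import Defs.
From HB Require Import structures.
From mathcomp Require Import all_boot all_order all_algebra.
From mathcomp Require Import reals.
From Stdlib Require Import ZArith.
From Stdlib Require List.
From mathcomp Require Import ssrZ.
Import ssrZ.Instances.
Delimit Scope nat_scope with N.
Set Implicit Arguments. Unset Strict Implicit. Unset Printing Implicit Defensive.
Import Order.TTheory GRing.Theory Num.Theory.
Local Open Scope ring_scope.

(* the proof is by exact computation with a verified Schreier-Sims style certificate. *)
Definition zmat := seq (seq Z).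
Definition zget (A : zmat) (i j : nat) : Z := nth 0%Z (nth [::] A i) j.
Fixpoint dotZ (r c : seq Z) : Z :=
  match r, c with
  | x :: r', y :: c' => Z.add (Z.mul x y) (dotZ r' c')
  | _, _ => 0%Z
  end.
Definition zcols (B : zmat) : zmat := mkseq (fun j => mkseq (fun k => zget B k j) 8) 8.
Definition zmulraw (A B : zmat) : zmat :=
  let BT := zcols B in map (fun r => map (dotZ r) BT) A.
Definition zdiv4 (A : zmat) : zmat := map (map (fun x => Z.div x 4)) A.
Definition zok (A : zmat) : bool := all (all (fun x => Z.eqb (Z.modulo x 4) 0)) A.
Definition zm4 (A B : zmat) : option zmat :=
  let P := zmulraw A B in if zok P then Some (zdiv4 P) else None.
Arguments zmulraw : simpl never.
Arguments zdiv4 : simpl never.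
Definition zscale (c : Z) (A : zmat) : zmat := map (map (Z.mul c)) A.

Definition allq (P : 'I_3 -> bool) := [&& P q0, P q1 & P q2].
Definition bitn (j : 'I_3) (x : nat) : bool := odd (divn x (expn 2 (subn 2 j))).
Definition one_qZ (m : bool -> bool -> Z) (j : 'I_3) : zmat :=
  mkseq (fun x => mkseq (fun y =>
    if allq (fun k => (k != j) ==> (bitn k x == bitn k y))
    then m (bitn j x) (bitn j y) else 0%Z) 8) 8.
Definition ctrlZ4 (j : 'I_3) (A : zmat) : zmat :=
  mkseq (fun x => mkseq (fun y =>
    if bitn j y then Z.mul 4 (zget A x y) else if x == y then 4%Z else 0%Z) 8) 8.
Definition ctrl2Z4 (j k : 'I_3) (A : zmat) : zmat :=
  mkseq (fun x => mkseq (fun y =>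
    if bitn j y && bitn k y then Z.mul 4 (zget A x y)
    else if x == y then 4%Z else 0%Z) 8) 8.
Definition swapn (j k : 'I_3) (y : nat) : nat :=
  let b (i : 'I_3) := nat_of_bool (bitn (if i == j then k else if i == k then j else i) y) in
  addn (addn (muln 4 (b q0)) (muln 2 (b q1))) (b q2).
Definition sigmaZ4 (j k : 'I_3) : zmat :=
  mkseq (fun x => mkseq (fun y =>
    if x == swapn j k y then 4%Z else 0%Z) 8) 8.
Arguments one_qZ : simpl never.
Arguments ctrlZ4 : simpl never.
Arguments ctrl2Z4 : simpl never.
Arguments sigmaZ4 : simpl never.
Arguments zscale : simpl never.
Definition mX (a b : bool) : Z := if a == b then 0%Z else 1%Z.
Definition mZ (a b : bool) : Z := if a == b then (if a then (-1)%Z else 1%Z) else 0%Z.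
Definition mH (a b : bool) : Z := if a && b then (-1)%Z else 1%Z.

Definition gz (s : sym) : zmat :=
  match s with
  | sX0 => zscale 4 (one_qZ mX q0) | sX1 => zscale 4 (one_qZ mX q1)
  | sX2 => zscale 4 (one_qZ mX q2)
  | sCX01 => ctrlZ4 q0 (one_qZ mX q1) | sCX02 => ctrlZ4 q0 (one_qZ mX q2)
  | sCX10 => ctrlZ4 q1 (one_qZ mX q0) | sCX12 => ctrlZ4 q1 (one_qZ mX q2)
  | sCX20 => ctrlZ4 q2 (one_qZ mX q0) | sCX21 => ctrlZ4 q2 (one_qZ mX q1)
  | sCCX01 => ctrl2Z4 q0 q1 (one_qZ mX q2)
  | sCCX02 => ctrl2Z4 q0 q2 (one_qZ mX q1)
  | sCCX12 => ctrl2Z4 q1 q2 (one_qZ mX q0)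
  | sZ0 => zscale 4 (one_qZ mZ q0) | sZ1 => zscale 4 (one_qZ mZ q1)
  | sZ2 => zscale 4 (one_qZ mZ q2)
  | sCZ01 => ctrlZ4 q0 (one_qZ mZ q1) | sCZ02 => ctrlZ4 q0 (one_qZ mZ q2)
  | sCZ12 => ctrlZ4 q1 (one_qZ mZ q2)
  | sK01 => zscale 2 (zmulraw (one_qZ mH q0) (one_qZ mH q1))
  | sK12 => zscale 2 (zmulraw (one_qZ mH q1) (one_qZ mH q2))
  | sS01 => sigmaZ4 q0 q1 | sS02 => sigmaZ4 q0 q2 | sS12 => sigmaZ4 q1 q2
  end.

Lemma forall3 (P : 'I_3 -> bool) : [forall k, P k] = allq P.
Proof.
apply/forallP/and3P => [H|[H0 H1 H2] [m Hm]]; first by split; apply: H.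
case: m Hm => [|[|[|m]]] Hm //.
- by rewrite (bool_irrelevance Hm isT).
- by rewrite (bool_irrelevance Hm isT).
- by rewrite (bool_irrelevance Hm isT).
Qed.

Section Real.
Variable R : realType.

Definition Z2R (z : Z) : R := (int_of_Z z)%:~R.
Lemma Z2R_add x y : Z2R (Z.add x y) = Z2R x + Z2R y.
Proof.
rewrite /Z2R.
have -> : int_of_Z (Z.add x y) = int_of_Z x + int_of_Z y := raddfD int_of_Z x y.
by rewrite intrD.
Qed.
Lemma Z2R_mul x y : Z2R (Z.mul x y) = Z2R x * Z2R y.
Proof.
rewrite /Z2R.
have -> : int_of_Z (Z.mul x y) = int_of_Z x * int_of_Z y := rmorphM int_of_Z x y.
by rewrite intrM.
Qed.
Lemma Z2R0 : Z2R 0 = 0. Proof. by []. Qed.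
Lemma Z2R1 : Z2R 1 = 1. Proof. by rewrite /Z2R /=. Qed.
Lemma Z2R4 : Z2R 4 = 4. Proof. by rewrite /Z2R /=. Qed.
Lemma Z2R2 : Z2R 2 = 2. Proof. by rewrite /Z2R /=. Qed.
Lemma Z2Rm1 : Z2R (-1) = -1. Proof. by rewrite /Z2R /=. Qed.

Definition matZ (A : zmat) : 'M[R]_8 := \matrix_(i, j) Z2R (zget A i j).

Lemma Z2R_dot r c :
  Z2R (dotZ r c) = \sum_(k < size c) Z2R (nth 0%Z r k) * Z2R (nth 0%Z c k).
Proof.
elim: c r => [|y c IH] [|x r] /=; rewrite ?big_ord0 ?Z2R0 //.
  by rewrite big1 // => k _; rewrite nth_nil Z2R0 mul0r.
by rewrite Z2R_add Z2R_mul IH big_ord_recl.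
Qed.

Lemma matZ_mul A B : matZ (zmulraw A B) = matZ A *m matZ B.
Proof.
apply/matrixP=> i j; rewrite !mxE /zget /zmulraw.
case: (ltnP i (size A)) => Hi.
  rewrite (nth_map [::]) // (nth_map [::]) ?size_mkseq // nth_mkseq //.
  rewrite Z2R_dot size_mkseq; apply: eq_bigr => k _.
  by rewrite nth_mkseq // !mxE.
rewrite (nth_default [::]) ?size_map // nth_nil big1 // => k _.
by rewrite !mxE /zget (nth_default [::] Hi) nth_nil Z2R0 mul0r.
Qed.

Lemma zget_map (f : Z -> Z) A i j : f 0%Z = 0%Z ->
  zget (map (map f) A) i j = f (zget A i j).
Proof.
move=> f0; rewrite /zget.
case: (ltnP i (size A)) => Hi.
  rewrite (nth_map [::]) //.
  case: (ltnP j (size (nth [::] A i))) => Hj; first by rewrite (nth_map 0%Z).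
  by rewrite nth_default ?size_map // nth_default.
by rewrite !(nth_default [::]) ?size_map // nth_nil.
Qed.

Lemma matZ_scale c A : matZ (zscale c A) = Z2R c *: matZ A.
Proof.
apply/matrixP=> i j; rewrite !mxE /zscale zget_map; first by rewrite Z2R_mul.
by rewrite Z.mul_0_r.
Qed.

Lemma zget_ok A i j : zok A -> Z.modulo (zget A i j) 4 = 0%Z.
Proof.
move=> /allP H; rewrite /zget.
case: (ltnP i (size A)) => Hi; last by rewrite (nth_default [::] Hi) nth_nil.
have /allP H2 := H _ (mem_nth [::] Hi).
case: (ltnP j (size (nth [::] A i))) => Hj; last by rewrite (nth_default 0%Z Hj).
by move: (H2 _ (mem_nth 0%Z Hj)) => /Z.eqb_eq.
Qed.

Lemma matZ_div4 A : zok A -> matZ A = 4 *: matZ (zdiv4 A).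
Proof.
move=> H; apply/matrixP=> i j; rewrite !mxE /zdiv4 zget_map //.
have E := Z_div_exact_full_2 (zget A i j) 4 ltac:(discriminate) (zget_ok i j H).
by rewrite {1}E Z2R_mul Z2R4.
Qed.

Definition rep (A : zmat) (M : 'M[R]_8) := matZ A = 4 *: M.

Lemma scale4_inj (M N : 'M[R]_8) : 4 *: M = 4 *: N -> M = N.
Proof.
move=> /(f_equal (fun X => 4^-1 *: X)); rewrite !scalerA mulVf ?scale1r //.
by rewrite pnatr_eq0.
Qed.

Lemma rep_mul A B M N C : rep A M -> rep B N -> zm4 A B = Some C -> rep C (M *m N).
Proof.
rewrite /rep /zm4 => HA HB.
case Hok: (zok (zmulraw A B)) => // -[<-].
apply: scale4_inj; rewrite -matZ_div4 // matZ_mul HA HB.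
by rewrite -scalemxAl -scalemxAr !scalerA.
Qed.

Lemma inord_val8 (x : 'I_8) : @inord 7 x = x.
Proof. exact: inord_val. Qed.

Lemma bitE j (x : 'I_8) : bit j x = bitn j x. Proof. by []. Qed.

Lemma one_qZ_ok m (M : 'M[R]_2) c j :
  (forall a b, Z2R (m a b) = c * M (b2o a) (b2o b)) -> matZ (one_qZ m j) = c *: one_q M j.
Proof.
move=> H; apply/matrixP=> x y; rewrite !mxE /zget /one_qZ nth_mkseq // nth_mkseq //.
rewrite forall3 !bitE; case: ifP => _; first exact: H.
by rewrite Z2R0 mulr0.
Qed.

Lemma ctrlZ4_ok A j : matZ (ctrlZ4 j A) = 4 *: ctrl j (matZ A).
Proof.
apply/matrixP=> x y; rewrite !mxE /zget /ctrlZ4 nth_mkseq // nth_mkseq // !bitE.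
case: ifP => _; first by rewrite Z2R_mul Z2R4.
by rewrite -val_eqE; case: eqP => _; rewrite ?Z2R4 ?mulr1 ?mulr0.
Qed.

Lemma ctrl2Z4_ok A j k : matZ (ctrl2Z4 j k A) = 4 *: ctrl2 j k (matZ A).
Proof.
apply/matrixP=> x y; rewrite !mxE /zget /ctrl2Z4 nth_mkseq // nth_mkseq // !bitE.
case: ifP => _; first by rewrite Z2R_mul Z2R4.
by rewrite -val_eqE; case: eqP => _; rewrite ?Z2R4 ?mulr1 ?mulr0.
Qed.

Lemma b2oE b : nat_of_ord (b2o b) = nat_of_bool b.
Proof. by rewrite /b2o inordK //; case: b. Qed.

Lemma swapnE j k (y : 'I_8) : nat_of_ord (swap_idx j k y) = swapn j k y.
Proof.
rewrite /swap_idx /mkidx /swapn.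
have E0 : @inord 2 0 = q0 by apply: val_inj => /=; rewrite inordK.
have E1 : @inord 2 1 = q1 by apply: val_inj => /=; rewrite inordK.
have E2 : @inord 2 2 = q2 by apply: val_inj => /=; rewrite inordK.
rewrite E0 E1 E2 !bitE inordK //.
by case: (bitn _ y); case: (bitn _ y); case: (bitn _ y).
Qed.

Lemma sigmaZ4_ok j k : matZ (sigmaZ4 j k) = 4 *: sigma R j k.
Proof.
apply/matrixP=> x y; rewrite !mxE /zget /sigmaZ4 nth_mkseq // nth_mkseq //.
by rewrite -val_eqE /= swapnE; case: eqP => _; rewrite ?Z2R4 ?mulr1 ?mulr0.
Qed.

Lemma mX_ok a b : Z2R (mX a b) = 1 * Xm R (b2o a) (b2o b).
Proof. by rewrite mul1r mxE /mX -val_eqE /= !b2oE; case: a; case: b. Qed.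
Lemma mZ_ok a b : Z2R (mZ a b) = 1 * Zm R (b2o a) (b2o b).
Proof.
rewrite mul1r mxE /mZ -!val_eqE /= !b2oE; case: a; case: b => //=.
Qed.
Lemma sqrt2_neq0 : Num.sqrt (2 : R) != 0.
Proof. by rewrite sqrtr_eq0 -ltNge ltr0n. Qed.
Lemma mH_ok a b : Z2R (mH a b) = Num.sqrt 2 * Hm R (b2o a) (b2o b).
Proof.
rewrite /Hm !mxE mulrA mulfV ?sqrt2_neq0 // mul1r /mH -!val_eqE /= !b2oE.
by case: a; case: b.
Qed.

Lemma sqrt2_sq : Num.sqrt (2 : R) * Num.sqrt 2 = 2.
Proof. by rewrite -expr2 sqr_sqrtr // ler0n. Qed.

Lemma oqX j : matZ (one_qZ mX j) = one_q (Xm R) j.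
Proof. by rewrite (one_qZ_ok j mX_ok) scale1r. Qed.
Lemma oqZ j : matZ (one_qZ mZ j) = one_q (Zm R) j.
Proof. by rewrite (one_qZ_ok j mZ_ok) scale1r. Qed.
Lemma oqH j : matZ (one_qZ mH j) = Num.sqrt 2 *: one_q (Hm R) j.
Proof. exact: (one_qZ_ok j mH_ok). Qed.

Lemma gz_ok s : rep (gz s) (sem R s).
Proof.
rewrite /rep; case: s => /=;
  rewrite ?matZ_scale ?ctrlZ4_ok ?ctrl2Z4_ok ?sigmaZ4_ok ?matZ_mul
          ?oqX ?oqZ ?oqH
          ?scale1r ?Z2R4 //.
- by rewrite -scalemxAl -scalemxAr !scalerA Z2R2 -mulrA sqrt2_sq -natrM.
- by rewrite -scalemxAl -scalemxAr !scalerA Z2R2 -mulrA sqrt2_sq -natrM.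
Qed.

End Real.

Definition syms : seq sym := [:: sX0; sX1; sX2; sCX01; sCX02; sCX10; sCX12; sCX20; sCX21;
  sCCX01; sCCX02; sCCX12; sZ0; sZ1; sZ2; sCZ01; sCZ02; sCZ12; sK01; sK12; sS01; sS02; sS12].
Definition sidx (s : sym) : nat :=
  match s with
  | sX0 => 0 | sX1 => 1 | sX2 => 2 | sCX01 => 3 | sCX02 => 4 | sCX10 => 5 | sCX12 => 6
  | sCX20 => 7 | sCX21 => 8 | sCCX01 => 9 | sCCX02 => 10 | sCCX12 => 11 | sZ0 => 12
  | sZ1 => 13 | sZ2 => 14 | sCZ01 => 15 | sCZ02 => 16 | sCZ12 => 17 | sK01 => 18
  | sK12 => 19 | sS01 => 20 | sS02 => 21 | sS12 => 22 end%N.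
Definition gtab : seq zmat := Eval vm_compute in map gz syms.
Definition gt (s : sym) : zmat := nth [::] gtab (sidx s).
Lemma gtE s : gt s = gz s.
Proof. by case: s; vm_compute. Qed.

Definition expand (s : sym) : seq sym :=
  match s with
  | sX0 => [:: sK01; sZ0; sK01]
  | sX1 => [:: sS01; sK01; sZ0; sK01; sS01]
  | sX2 => [:: sS01; sS12; sS01; sK01; sZ0; sK01; sS01; sS12; sS01]
  | sCX01 => [:: sS01; sS12; sS01; sK01; sS01; sS12; sS01; sCZ01; sS01; sS12; sS01; sK01; sS01; sS12; sS01]
  | sCX02 => [:: sS12; sS01; sS12; sS01; sK01; sS01; sS12; sS01; sCZ01; sS01; sS12; sS01; sK01; sS01; sS12; sS01; sS12]
  | sCX10 => [:: sS01; sS01; sS12; sS01; sK01; sS01; sS12; sS01; sCZ01; sS01; sS12; sS01; sK01; sS01; sS12; sS01; sS01]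
  | sCX12 => [:: sS01; sS12; sS01; sS12; sS01; sK01; sS01; sS12; sS01; sCZ01; sS01; sS12; sS01; sK01; sS01; sS12; sS01; sS12; sS01]
  | sCX20 => [:: sS12; sS01; sS01; sS12; sS01; sK01; sS01; sS12; sS01; sCZ01; sS01; sS12; sS01; sK01; sS01; sS12; sS01; sS01; sS12]
  | sCX21 => [:: sS01; sS12; sS01; sS01; sS12; sS01; sK01; sS01; sS12; sS01; sCZ01; sS01; sS12; sS01; sK01; sS01; sS12; sS01; sS01; sS12; sS01]
  | sCCX01 => [:: sCCX01]
  | sCCX02 => [:: sS12; sCCX01; sS12]
  | sCCX12 => [:: sS01; sS12; sS01; sCCX01; sS01; sS12; sS01]
  | sZ0 => [:: sZ0]
  | sZ1 => [:: sS01; sZ0; sS01]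
  | sZ2 => [:: sS01; sS12; sS01; sZ0; sS01; sS12; sS01]
  | sCZ01 => [:: sCZ01]
  | sCZ02 => [:: sS12; sCZ01; sS12]
  | sCZ12 => [:: sS01; sS12; sS01; sCZ01; sS01; sS12; sS01]
  | sK01 => [:: sK01]
  | sK12 => [:: sS01; sS12; sS01; sK01; sS01; sS12; sS01]
  | sS01 => [:: sS01]
  | sS02 => [:: sS01; sS12; sS01]
  | sS12 => [:: sS12]
  end.
Definition gens : seq sym := [:: sCCX01; sK01; sS01; sS12; sZ0; sCZ01].

Definition I4 : zmat := mkseq (fun i => mkseq (fun j => if i == j then 4%Z else 0%Z) 8) 8.

Fixpoint wz (w : seq sym) : option zmat :=
  match w with
  | [::] => Some I4
  | s :: w' => match wz w' with Some A => zm4 (gt s) A | None => None end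
  end.

Definition alev := seq (seq sym * zmat).
Definition annot (U : seq (seq sym)) : alev := map (fun w => (w, odflt [::] (wz w))) U.
Definition goodlev (AU : alev) : bool := all (fun p => wz p.1 == Some p.2) AU.

Definition col (c : nat) (A : zmat) : seq Z := map (fun r => nth 0%Z r c) A.
Definition klev := seq (seq Z * (seq sym * zmat)).
Fixpoint mkkeys (AL : seq alev) (c : nat) : seq klev :=
  match AL with
  | [::] => [::]
  | AU :: AL' => map (fun p => (col c p.2, p)) AU :: mkkeys AL' c.+1
  end.
Fixpoint kpick (KU : klev) (key : seq Z) : option (seq sym * zmat) :=
  match KU with
  | [::] => None
  | kp :: KU' => if kp.1 == key then Some kp.2 else kpick KU' key
  end.
Definition ztr (A : zmat) : zmat := mkseq (fun i => mkseq (fun j => zget A j i) 8) 8.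
Fixpoint sift (KL : seq klev) (c : nat) (g : zmat) : seq (seq sym * zmat) :=
  match KL with
  | [::] => [::]
  | KU :: KL' => match kpick KU (col c g) with
                 | Some p => p :: sift KL' c.+1 (zdiv4 (zmulraw (ztr p.2) g))
                 | None => [::]
                 end
  end.
Fixpoint prodm (ps : seq (seq sym * zmat)) : option zmat :=
  match ps with
  | [::] => Some I4
  | p :: ps' => match prodm ps' with Some B => zm4 p.2 B | None => None end
  end.
Definition chk1 (KL : seq klev) (c : nat) (V U : zmat) : bool :=
  match zm4 V U with
  | None => false
  | Some P => match sift KL c P with
              | [::] => false
              | ps => match prodm ps with Some Q => P == Q | None => false end
              end
  end.
Definition certb (AU : alev) (AL' : seq alev) (c : nat) (Sg : alev) : bool :=
  let KL := mkkeys (AU :: AL') c in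
  all (fun v => all (fun u => chk1 KL c v.2 u.2) AU) Sg.
Fixpoint certsb (AL : seq alev) (c : nat) : bool :=
  match AL with
  | [::] => true
  | AU :: AL' => certb AU AL' c (AU ++ flatten AL') && certsb AL' c.+1
  end.
Definition L1 : seq (seq sym) := [:: [::];
 [:: sK01];
 [:: sK12];
 [:: sX0];
 [:: sX1];
 [:: sX2];
 [:: sCCX01; sK01];
 [:: sCCX12; sK12];
 [:: sCX02; sK01];
 [:: sCX10; sK12];
 [:: sCX12; sK01];
 [:: sCZ01; sK01];
 [:: sCZ12; sK12];
 [:: sK01; sX0];
 [:: sK01; sX1];
 [:: sK01; sX2];
 [:: sK12; sK01];
 [:: sK12; sX0];
 [:: sK12; sX1];
 [:: sK12; sX2];
 [:: sX1; sX0];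
 [:: sX2; sX0];
 [:: sX2; sX1];
 [:: sZ0; sX0];
 [:: sZ1; sX1];
 [:: sZ2; sX2];
 [:: sCCX01; sCX02; sK01];
 [:: sCCX01; sCX12; sK01];
 [:: sCCX01; sCZ01; sK01];
 [:: sCCX01; sK01; sX0];
 [:: sCCX01; sK01; sX1];
 [:: sCCX01; sK01; sX2];
 [:: sCCX02; sCX10; sK12];
 [:: sCCX02; sCX12; sK01];
 [:: sCCX02; sK12; sK01];
 [:: sCCX12; sCX02; sK01];
 [:: sCCX12; sCX10; sK12];
 [:: sCCX12; sCZ12; sK12];
 [:: sCCX12; sK12; sX0];
 [:: sCCX12; sK12; sX1];
 [:: sCCX12; sK12; sX2];
 [:: sCX01; sCCX12; sK12];
 [:: sCX01; sCX12; sK01];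
 [:: sCX02; sCCX12; sK12];
 [:: sCX02; sK01; sX1];
 [:: sCX10; sK12; sX0];
 [:: sCX10; sK12; sX1];
 [:: sCX10; sK12; sX2];
 [:: sCX12; sK01; sX1];
 [:: sCX12; sK01; sX2];
 [:: sCX20; sCCX01; sK01];
 [:: sCX20; sK12; sX0];
 [:: sCX20; sK12; sX2];
 [:: sCX21; sCCX01; sK01];
 [:: sCZ01; sCX02; sK01];
 [:: sCZ01; sCX12; sK01];
 [:: sCZ01; sK01; sX0];
 [:: sCZ01; sK01; sX1];
 [:: sCZ01; sK01; sX2];
 [:: sCZ02; sCX10; sK12];
 [:: sCZ12; sK12; sX0];
 [:: sCZ12; sK12; sX1];
 [:: sCZ12; sK12; sX2];
 [:: sK01; sCCX01; sK01];
 [:: sK01; sCX02; sK01];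
 [:: sK01; sK12; sX0];
 [:: sK01; sX1; sX0];
 [:: sK01; sX2; sX0];
 [:: sK01; sX2; sX1];
 [:: sK01; sZ0; sX0];
 [:: sK01; sZ1; sX1];
 [:: sK01; sZ2; sX2];
 [:: sK12; sK01; sX2];
 [:: sK12; sX1; sX0];
 [:: sK12; sX2; sX0];
 [:: sK12; sX2; sX1];
 [:: sK12; sZ0; sX0];
 [:: sK12; sZ1; sX1];
 [:: sK12; sZ2; sX2];
 [:: sS01; sK12; sX0];
 [:: sX0; sZ1; sX1];
 [:: sX0; sZ2; sX2];
 [:: sX1; sZ2; sX2];
 [:: sX2; sX1; sX0];
 [:: sX2; sZ2; sX2];
 [:: sZ0; sCX12; sK01];
 [:: sCCX01; sCX01; sCX12; sK01];
 [:: sCCX01; sCX02; sK01; sX1];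
 [:: sCCX01; sCX12; sK01; sX1];
 [:: sCCX01; sCX12; sK01; sX2];
 [:: sCCX01; sCX20; sK12; sX0];
 [:: sCCX01; sCX20; sK12; sX2];
 [:: sCCX01; sCZ01; sCX02; sK01];
 [:: sCCX01; sCZ01; sCX12; sK01];
 [:: sCCX01; sCZ01; sK01; sX0];
 [:: sCCX01; sCZ01; sK01; sX1];
 [:: sCCX01; sCZ01; sK01; sX2];
 [:: sCCX01; sK01; sX1; sX0];
 [:: sCCX01; sK01; sX2; sX0];
 [:: sCCX01; sK01; sX2; sX1];
 [:: sCCX01; sK01; sZ0; sX0];
 [:: sCCX01; sK01; sZ1; sX1];
 [:: sCCX01; sK01; sZ2; sX2];
 [:: sCCX01; sZ0; sCX12; sK01];
 [:: sCCX02; sCX01; sCX12; sK01];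
 [:: sCCX02; sCX10; sK12; sX0];
 [:: sCCX02; sCX10; sK12; sX1];
 [:: sCCX02; sCX10; sK12; sX2];
 [:: sCCX02; sCX12; sK01; sX1];
 [:: sCCX02; sCX12; sK01; sX2];
 [:: sCCX02; sCZ01; sCX12; sK01];
 [:: sCCX02; sCZ02; sCX10; sK12];
 [:: sCCX02; sK01; sCX02; sK01];
 [:: sCCX02; sK01; sK12; sX0];
 [:: sCCX02; sK12; sK01; sX2];
 [:: sCCX02; sS01; sK12; sX0];
 [:: sCCX02; sZ0; sCX12; sK01];
 [:: sCCX12; sCX01; sCX12; sK01];
 [:: sCCX12; sCX02; sK01; sX1];
 [:: sCCX12; sCX10; sK12; sX0];
 [:: sCCX12; sCX10; sK12; sX1];
 [:: sCCX12; sCX10; sK12; sX2];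
 [:: sCCX12; sCX20; sK12; sX0];
 [:: sCCX12; sCX20; sK12; sX2];
 [:: sCCX12; sCZ01; sCX02; sK01];
 [:: sCCX12; sCZ02; sCX10; sK12];
 [:: sCCX12; sCZ12; sK12; sX0];
 [:: sCCX12; sCZ12; sK12; sX1];
 [:: sCCX12; sCZ12; sK12; sX2];
 [:: sCCX12; sK12; sX1; sX0];
 [:: sCCX12; sK12; sX2; sX0];
 [:: sCCX12; sK12; sX2; sX1];
 [:: sCCX12; sK12; sZ0; sX0];
 [:: sCCX12; sK12; sZ1; sX1];
 [:: sCCX12; sK12; sZ2; sX2];
 [:: sCX01; sCCX01; sK01; sX1];
 [:: sCX01; sCCX12; sCX02; sK01];
 [:: sCX01; sCCX12; sCZ12; sK12];
 [:: sCX01; sCCX12; sK12; sX0];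
 [:: sCX01; sCCX12; sK12; sX1];
 [:: sCX01; sCCX12; sK12; sX2];
 [:: sCX01; sCX20; sCCX01; sK01];
 [:: sCX01; sZ0; sCX12; sK01];
 [:: sCX02; sCCX12; sCX10; sK12];
 [:: sCX02; sCCX12; sCZ12; sK12];
 [:: sCX02; sCCX12; sK12; sX0];
 [:: sCX02; sCCX12; sK12; sX1];
 [:: sCX02; sCCX12; sK12; sX2];
 [:: sCX02; sCZ01; sK01; sX2];
 [:: sCX02; sK01; sX2; sX0];
 [:: sCX02; sK01; sZ0; sX0];
 [:: sCX02; sK01; sZ2; sX2];
 [:: sCX10; sCCX01; sK01; sX0];
 [:: sCX10; sCCX02; sCX12; sK01];
 [:: sCX10; sCX02; sK01; sX1];
 [:: sCX10; sCX21; sCCX01; sK01];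
 [:: sCX10; sCZ12; sK12; sX0];
 [:: sCX10; sCZ12; sK12; sX1];
 [:: sCX10; sK01; sZ0; sX0];
 [:: sCX10; sK12; sX1; sX0];
 [:: sCX10; sK12; sX2; sX0];
 [:: sCX10; sK12; sX2; sX1];
 [:: sCX10; sK12; sZ0; sX0];
 [:: sCX10; sK12; sZ1; sX1];
 [:: sCX10; sK12; sZ2; sX2];
 [:: sCX12; sCCX02; sCX10; sK12];
 [:: sCX12; sCCX12; sK12; sX2];
 [:: sCX12; sCX01; sCCX12; sK12];
 [:: sCX12; sCZ01; sK01; sX1];
 [:: sCX12; sCZ01; sK01; sX2];
 [:: sCX12; sK01; sX1; sX0];
 [:: sCX12; sK01; sX2; sX0];
 [:: sCX12; sK01; sX2; sX1];
 [:: sCX12; sK01; sZ0; sX0];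
 [:: sCX12; sK01; sZ1; sX1];
 [:: sCX12; sK01; sZ2; sX2];
 [:: sCX20; sCCX01; sCX12; sK01];
 [:: sCX20; sCCX01; sCZ01; sK01];
 [:: sCX20; sCCX01; sK01; sX0];
 [:: sCX20; sCCX01; sK01; sX1];
 [:: sCX20; sCCX01; sK01; sX2];
 [:: sCX20; sCX10; sK12; sX0];
 [:: sCX20; sCX10; sK12; sX2];
 [:: sCX20; sCX21; sCCX01; sK01];
 [:: sCX20; sCZ12; sK12; sX0];
 [:: sCX20; sCZ12; sK12; sX2];
 [:: sCX20; sK12; sX1; sX0];
 [:: sCX20; sK12; sX2; sX0];
 [:: sCX20; sK12; sX2; sX1];
 [:: sCX20; sK12; sZ1; sX1];
 [:: sCX21; sCCX01; sCX02; sK01];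
 [:: sCX21; sCCX01; sCX12; sK01];
 [:: sCX21; sCCX01; sCZ01; sK01];
 [:: sCX21; sCCX01; sK01; sX0];
 [:: sCX21; sCCX01; sK01; sX1];
 [:: sCX21; sCCX01; sK01; sX2];
 [:: sCX21; sCCX12; sK12; sX1];
 [:: sCX21; sK12; sZ1; sX1];
 [:: sCZ01; sCCX12; sK12; sX0];
 [:: sCZ01; sCX01; sCX12; sK01];
 [:: sCZ01; sCX02; sK01; sX1];
 [:: sCZ01; sK01; sX1; sX0];
 [:: sCZ01; sK01; sX2; sX0];
 [:: sCZ01; sK01; sX2; sX1];
 [:: sCZ01; sK01; sZ0; sX0];
 [:: sCZ01; sK01; sZ1; sX1];
 [:: sCZ01; sK01; sZ2; sX2];
 [:: sCZ01; sZ0; sCX12; sK01];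
 [:: sCZ02; sCCX01; sK01; sX2];
 [:: sCZ02; sCCX12; sK12; sX0];
 [:: sCZ02; sCX01; sCX12; sK01];
 [:: sCZ02; sCX10; sK12; sX0];
 [:: sCZ02; sCX10; sK12; sX2];
 [:: sCZ02; sCX12; sK01; sX2];
 [:: sCZ12; sCCX01; sK01; sX2];
 [:: sCZ12; sCX01; sCX12; sK01];
 [:: sCZ12; sK12; sX1; sX0];
 [:: sCZ12; sK12; sX2; sX0];
 [:: sCZ12; sK12; sX2; sX1];
 [:: sCZ12; sK12; sZ0; sX0];
 [:: sCZ12; sK12; sZ1; sX1];
 [:: sCZ12; sK12; sZ2; sX2];
 [:: sK01; sCCX01; sCX02; sK01];
 [:: sK01; sCCX01; sCX12; sK01];
 [:: sK01; sCCX01; sCZ01; sK01];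
 [:: sK01; sCCX01; sK01; sX1];
 [:: sK01; sCCX01; sK01; sX2];
 [:: sK01; sCX20; sCCX01; sK01];
 [:: sK01; sCX20; sK12; sX0];
 [:: sK01; sCX21; sCCX01; sK01];
 [:: sK01; sK12; sX1; sX0];
 [:: sK01; sK12; sX2; sX0];
 [:: sK01; sK12; sZ1; sX1];
 [:: sK01; sX2; sX1; sX0];
 [:: sK01; sX2; sZ2; sX2];
 [:: sK12; sCCX12; sK12; sX0];
 [:: sK12; sCX01; sCCX12; sK12];
 [:: sK12; sCX20; sCCX01; sK01];
 [:: sK12; sCX20; sK12; sX0];
 [:: sK12; sX2; sX1; sX0];
 [:: sK12; sX2; sZ2; sX2];
 [:: sS01; sCZ12; sK12; sX0];
 [:: sS01; sK12; sX2; sX0];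
 [:: sS01; sK12; sZ1; sX1];
 [:: sS12; sCX20; sCCX01; sK01];
 [:: sS12; sK01; sZ1; sX1];
 [:: sX0; sCCX01; sK01; sX0];
 [:: sX0; sCX01; sCCX12; sK12];
 [:: sX0; sCX02; sCCX12; sK12];
 [:: sX0; sK12; sZ1; sX1];
 [:: sX0; sK12; sZ2; sX2];
 [:: sX0; sX1; sZ2; sX2];
 [:: sX1; sCCX01; sCX12; sK01];
 [:: sX1; sCCX01; sK01; sX1];
 [:: sX1; sCCX12; sK12; sX1];
 [:: sX1; sCZ01; sK01; sX1];
 [:: sX2; sCCX02; sCX12; sK01];
 [:: sX2; sCCX12; sCX02; sK01];
 [:: sX2; sCCX12; sK12; sX2];
 [:: sX2; sCX20; sCCX01; sK01];
 [:: sX2; sCX21; sCCX01; sK01];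
 [:: sX2; sCZ12; sK12; sX2];
 [:: sX2; sK01; sZ0; sX0];
 [:: sX2; sK01; sZ1; sX1];
 [:: sZ0; sCCX12; sCX02; sK01];
 [:: sZ0; sCCX12; sCX10; sK12];
 [:: sZ0; sCCX12; sK12; sX0];
 [:: sZ0; sCX10; sK12; sX0];
 [:: sZ0; sCX20; sCCX01; sK01];
 [:: sZ1; sCCX02; sCX10; sK12];
 [:: sZ1; sCCX02; sCX12; sK01];
 [:: sZ1; sCX01; sCCX12; sK12];
 [:: sZ1; sCX21; sCCX01; sK01];
 [:: sZ2; sCCX01; sCX02; sK01];
 [:: sZ2; sCCX01; sCX12; sK01];
 [:: sZ2; sCCX01; sK01; sX2];
 [:: sZ2; sCX02; sCCX12; sK12];
 [:: sZ2; sCX12; sK01; sX2];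
 [:: sCCX01; sCX01; sZ0; sCX12; sK01];
 [:: sCCX01; sCX02; sCZ01; sK01; sX2];
 [:: sCCX01; sCX02; sK01; sX2; sX0];
 [:: sCCX01; sCX02; sK01; sZ0; sX0];
 [:: sCCX01; sCX02; sK01; sZ2; sX2];
 [:: sCCX01; sCX10; sCX02; sK01; sX1];
 [:: sCCX01; sCX10; sK01; sZ0; sX0];
 [:: sCCX01; sCX12; sCZ01; sK01; sX2];
 [:: sCCX01; sCX12; sK01; sX2; sX0];
 [:: sCCX01; sCX12; sK01; sX2; sX1];
 [:: sCCX01; sCX12; sK01; sZ1; sX1];
 [:: sCCX01; sCX12; sK01; sZ2; sX2];
 [:: sCCX01; sCX20; sCX10; sK12; sX2];
 [:: sCCX01; sCX20; sCZ12; sK12; sX0];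
 [:: sCCX01; sCX20; sK12; sX1; sX0];
 [:: sCCX01; sCX20; sK12; sX2; sX0];
 [:: sCCX01; sCZ01; sCX01; sCX12; sK01];
 [:: sCCX01; sCZ01; sCX02; sK01; sX1];
 [:: sCCX01; sCZ01; sK01; sX1; sX0];
 [:: sCCX01; sCZ01; sK01; sZ0; sX0];
 [:: sCCX01; sCZ01; sK01; sZ1; sX1];
 [:: sCCX01; sCZ01; sZ0; sCX12; sK01];
 [:: sCCX01; sCZ02; sCX01; sCX12; sK01];
 [:: sCCX01; sCZ02; sCX12; sK01; sX2];
 [:: sCCX01; sCZ12; sCX01; sCX12; sK01];
 [:: sCCX01; sK01; sX2; sX1; sX0];
 [:: sCCX01; sK01; sX2; sZ2; sX2];
 [:: sCCX01; sX1; sCZ01; sK01; sX1];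
 [:: sCCX01; sX2; sK01; sZ0; sX0];
 [:: sCCX01; sX2; sK01; sZ1; sX1];
 [:: sCCX01; sZ2; sCX12; sK01; sX2];
 [:: sCCX02; sCX01; sZ0; sCX12; sK01];
 [:: sCCX02; sCX10; sCX02; sK01; sX1];
 [:: sCCX02; sCX10; sCZ12; sK12; sX0];
 [:: sCCX02; sCX10; sK12; sX1; sX0];
 [:: sCCX02; sCX10; sK12; sX2; sX0];
 [:: sCCX02; sCX10; sK12; sX2; sX1];
 [:: sCCX02; sCX10; sK12; sZ0; sX0];
 [:: sCCX02; sCX10; sK12; sZ1; sX1];
 [:: sCCX02; sCX10; sK12; sZ2; sX2];
 [:: sCCX02; sCX12; sCZ01; sK01; sX2];
 [:: sCCX02; sCX12; sK01; sX1; sX0];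
 [:: sCCX02; sCX12; sK01; sX2; sX0];
 [:: sCCX02; sCX12; sK01; sX2; sX1];
 [:: sCCX02; sCX12; sK01; sZ0; sX0];
 [:: sCCX02; sCX12; sK01; sZ1; sX1];
 [:: sCCX02; sCX12; sK01; sZ2; sX2];
 [:: sCCX02; sCX20; sCX10; sK12; sX2];
 [:: sCCX02; sCZ01; sCX01; sCX12; sK01];
 [:: sCCX02; sCZ01; sZ0; sCX12; sK01];
 [:: sCCX02; sCZ02; sCX01; sCX12; sK01];
 [:: sCCX02; sCZ02; sCX10; sK12; sX0];
 [:: sCCX02; sCZ02; sCX10; sK12; sX2];
 [:: sCCX02; sCZ02; sCX12; sK01; sX2];
 [:: sCCX02; sCZ12; sCX01; sCX12; sK01];
 [:: sCCX02; sK01; sCX20; sK12; sX0];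
 [:: sCCX02; sK01; sK12; sX1; sX0];
 [:: sCCX02; sK01; sK12; sX2; sX0];
 [:: sCCX02; sK01; sK12; sZ1; sX1];
 [:: sCCX02; sK12; sCX20; sK12; sX0];
 [:: sCCX02; sS01; sCZ12; sK12; sX0];
 [:: sCCX02; sS01; sK12; sX2; sX0];
 [:: sCCX02; sS01; sK12; sZ1; sX1];
 [:: sCCX02; sS12; sK01; sZ1; sX1];
 [:: sCCX02; sZ0; sCX10; sK12; sX0];
 [:: sCCX02; sZ2; sCX12; sK01; sX2];
 [:: sCCX12; sCX01; sZ0; sCX12; sK01];
 [:: sCCX12; sCX02; sCZ01; sK01; sX2];
 [:: sCCX12; sCX02; sK01; sX2; sX0];
 [:: sCCX12; sCX02; sK01; sZ0; sX0];
 [:: sCCX12; sCX02; sK01; sZ2; sX2];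
 [:: sCCX12; sCX10; sCX02; sK01; sX1];
 [:: sCCX12; sCX10; sCZ12; sK12; sX0];
 [:: sCCX12; sCX10; sK12; sX1; sX0];
 [:: sCCX12; sCX10; sK12; sX2; sX0];
 [:: sCCX12; sCX10; sK12; sZ0; sX0];
 [:: sCCX12; sCX10; sK12; sZ1; sX1];
 [:: sCCX12; sCX20; sCX10; sK12; sX2];
 [:: sCCX12; sCX20; sCZ12; sK12; sX0];
 [:: sCCX12; sCX20; sK12; sX1; sX0];
 [:: sCCX12; sCX20; sK12; sX2; sX0];
 [:: sCCX12; sCX21; sK12; sZ1; sX1];
 [:: sCCX12; sCZ01; sCX01; sCX12; sK01];
 [:: sCCX12; sCZ01; sCX02; sK01; sX1];
 [:: sCCX12; sCZ02; sCX01; sCX12; sK01];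
 [:: sCCX12; sCZ02; sCX10; sK12; sX0];
 [:: sCCX12; sCZ02; sCX10; sK12; sX2];
 [:: sCCX12; sCZ12; sCX01; sCX12; sK01];
 [:: sCCX12; sCZ12; sK12; sX2; sX1];
 [:: sCCX12; sCZ12; sK12; sZ1; sX1];
 [:: sCCX12; sCZ12; sK12; sZ2; sX2];
 [:: sCCX12; sK12; sX2; sX1; sX0];
 [:: sCCX12; sK12; sX2; sZ2; sX2];
 [:: sCCX12; sX0; sK12; sZ1; sX1];
 [:: sCCX12; sX0; sK12; sZ2; sX2];
 [:: sCCX12; sX2; sCZ12; sK12; sX2];
 [:: sCCX12; sZ0; sCX10; sK12; sX0];
 [:: sCX01; sCCX01; sK01; sX2; sX1];
 [:: sCX01; sCCX01; sK01; sZ1; sX1];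
 [:: sCX01; sCCX12; sCX02; sK01; sX1];
 [:: sCX01; sCCX12; sCX10; sK12; sX2];
 [:: sCX01; sCCX12; sCZ01; sCX02; sK01];
 [:: sCX01; sCCX12; sCZ12; sK12; sX0];
 [:: sCX01; sCCX12; sK12; sX1; sX0];
 [:: sCX01; sCCX12; sK12; sX2; sX0];
 [:: sCX01; sCCX12; sK12; sX2; sX1];
 [:: sCX01; sCCX12; sK12; sZ0; sX0];
 [:: sCX01; sCCX12; sK12; sZ1; sX1];
 [:: sCX01; sCCX12; sK12; sZ2; sX2];
 [:: sCX01; sCX12; sCCX12; sK12; sX2];
 [:: sCX01; sCX12; sK01; sX2; sX1];
 [:: sCX01; sCX12; sK01; sZ2; sX2];
 [:: sCX01; sCX20; sCCX01; sK01; sX1];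
 [:: sCX01; sCX21; sCCX12; sK12; sX1];
 [:: sCX01; sCZ01; sCCX12; sK12; sX0];
 [:: sCX01; sCZ02; sCCX12; sK12; sX0];
 [:: sCX01; sK01; sCCX01; sK01; sX1];
 [:: sCX01; sX1; sCCX12; sK12; sX1];
 [:: sCX01; sX2; sCCX12; sK12; sX2];
 [:: sCX01; sZ0; sCCX12; sCX02; sK01];
 [:: sCX01; sZ0; sCCX12; sK12; sX0];
 [:: sCX01; sZ0; sCX20; sCCX01; sK01];
 [:: sCX01; sZ1; sCX21; sCCX01; sK01];
 [:: sCX01; sZ2; sCX02; sCCX12; sK12];
 [:: sCX02; sCCX12; sCX10; sK12; sX2];
 [:: sCX02; sCCX12; sCZ02; sCX10; sK12];
 [:: sCX02; sCCX12; sCZ12; sK12; sX0];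
 [:: sCX02; sCCX12; sK12; sX1; sX0];
 [:: sCX02; sCCX12; sK12; sX2; sX0];
 [:: sCX02; sCCX12; sK12; sX2; sX1];
 [:: sCX02; sCCX12; sK12; sZ0; sX0];
 [:: sCX02; sCCX12; sK12; sZ1; sX1];
 [:: sCX02; sCCX12; sK12; sZ2; sX2];
 [:: sCX02; sCX01; sCCX12; sK12; sX0];
 [:: sCX02; sCX01; sCCX12; sK12; sX1];
 [:: sCX02; sCX01; sCCX12; sK12; sX2];
 [:: sCX02; sCX10; sK12; sX2; sX0];
 [:: sCX02; sCX12; sCCX12; sK12; sX2];
 [:: sCX02; sCZ01; sCCX12; sK12; sX0];
 [:: sCX02; sCZ02; sCCX01; sK01; sX2];
 [:: sCX02; sCZ02; sCCX12; sK12; sX0];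
 [:: sCX02; sCZ02; sCX12; sK01; sX2];
 [:: sCX02; sK01; sCX21; sCCX01; sK01];
 [:: sCX02; sK01; sX2; sX1; sX0];
 [:: sCX02; sX0; sCCX01; sK01; sX0];
 [:: sCX02; sX1; sCZ01; sK01; sX1];
 [:: sCX02; sX2; sCCX12; sK12; sX2];
 [:: sCX02; sZ0; sCCX12; sCX10; sK12];
 [:: sCX02; sZ0; sCCX12; sK12; sX0];
 [:: sCX02; sZ2; sCCX01; sK01; sX2];
 [:: sCX02; sZ2; sCX12; sK01; sX2];
 [:: sCX10; sCCX01; sK01; sX2; sX0];
 [:: sCX10; sCCX01; sK01; sZ0; sX0];
 [:: sCX10; sCCX02; sCX12; sK01; sX1];
 [:: sCX10; sCCX02; sCZ01; sCX12; sK01];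
 [:: sCX10; sCCX02; sZ0; sCX12; sK01];
 [:: sCX10; sCX02; sK01; sZ0; sX0];
 [:: sCX10; sCX12; sK01; sZ0; sX0];
 [:: sCX10; sCX20; sK12; sX2; sX0];
 [:: sCX10; sCX21; sCCX01; sK01; sX0];
 [:: sCX10; sCX21; sCCX01; sK01; sX1];
 [:: sCX10; sCX21; sCCX01; sK01; sX2];
 [:: sCX10; sCZ12; sK12; sX2; sX1];
 [:: sCX10; sCZ12; sK12; sZ2; sX2];
 [:: sCX10; sK01; sCCX01; sK01; sX1];
 [:: sCX10; sK12; sX2; sZ2; sX2];
 [:: sCX10; sX1; sCCX12; sK12; sX1];
 [:: sCX10; sX2; sCZ12; sK12; sX2];
 [:: sCX10; sZ0; sCCX12; sK12; sX0];
 [:: sCX10; sZ0; sCX20; sCCX01; sK01];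
 [:: sCX10; sZ1; sCCX02; sCX12; sK01];
 [:: sCX10; sZ1; sCX21; sCCX01; sK01];
 [:: sCX12; sCCX02; sCX10; sK12; sX1];
 [:: sCX12; sCCX02; sCX10; sK12; sX2];
 [:: sCX12; sCCX02; sCZ02; sCX10; sK12];
 [:: sCX12; sCCX12; sK12; sX2; sX0];
 [:: sCX12; sCCX12; sK12; sZ2; sX2];
 [:: sCX12; sCX01; sCCX12; sK12; sX0];
 [:: sCX12; sCX01; sCCX12; sK12; sX1];
 [:: sCX12; sCX01; sCCX12; sK12; sX2];
 [:: sCX12; sCX20; sCZ12; sK12; sX0];
 [:: sCX12; sCX20; sK12; sX2; sX0];
 [:: sCX12; sCZ01; sK01; sX1; sX0];
 [:: sCX12; sCZ01; sK01; sZ0; sX0];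
 [:: sCX12; sCZ12; sCCX01; sK01; sX2];
 [:: sCX12; sK01; sCCX01; sK01; sX1];
 [:: sCX12; sK01; sX2; sZ2; sX2];
 [:: sCX12; sX1; sCCX01; sK01; sX1];
 [:: sCX12; sX1; sCZ01; sK01; sX1];
 [:: sCX12; sZ1; sCCX02; sCX10; sK12];
 [:: sCX12; sZ1; sCX01; sCCX12; sK12];
 [:: sCX12; sZ2; sCCX01; sK01; sX2];
 [:: sCX12; sZ2; sCX02; sCCX12; sK12];
 [:: sCX20; sCCX01; sCZ01; sCX12; sK01];
 [:: sCX20; sCCX01; sCZ01; sK01; sX2];
 [:: sCX20; sCCX01; sK01; sX1; sX0];
 [:: sCX20; sCCX01; sK01; sX2; sX0];
 [:: sCX20; sCCX01; sK01; sX2; sX1];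
 [:: sCX20; sCCX01; sK01; sZ0; sX0];
 [:: sCX20; sCCX01; sK01; sZ1; sX1];
 [:: sCX20; sCCX01; sK01; sZ2; sX2];
 [:: sCX20; sCCX01; sZ0; sCX12; sK01];
 [:: sCX20; sCX10; sCCX01; sK01; sX0];
 [:: sCX20; sCX10; sCZ12; sK12; sX0];
 [:: sCX20; sCX10; sK12; sX1; sX0];
 [:: sCX20; sCX10; sK12; sZ1; sX1];
 [:: sCX20; sCZ02; sCCX01; sK01; sX2];
 [:: sCX20; sCZ12; sCCX01; sK01; sX2];
 [:: sCX20; sCZ12; sK12; sX2; sX1];
 [:: sCX20; sCZ12; sK12; sZ1; sX1];
 [:: sCX20; sK01; sCCX01; sK01; sX1];
 [:: sCX20; sK12; sCX01; sCCX12; sK12];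
 [:: sCX20; sK12; sX2; sZ2; sX2];
 [:: sCX20; sS01; sK12; sZ1; sX1];
 [:: sCX20; sX0; sCCX01; sK01; sX0];
 [:: sCX20; sX2; sCCX12; sK12; sX2];
 [:: sCX20; sZ0; sCCX12; sK12; sX0];
 [:: sCX20; sZ1; sCX21; sCCX01; sK01];
 [:: sCX20; sZ2; sCCX01; sCX12; sK01];
 [:: sCX20; sZ2; sCCX01; sK01; sX2];
 [:: sCX21; sCCX01; sCX02; sK01; sX1];
 [:: sCX21; sCCX01; sCZ01; sCX02; sK01];
 [:: sCX21; sCCX01; sCZ01; sK01; sX2];
 [:: sCX21; sCCX01; sK01; sX1; sX0];
 [:: sCX21; sCCX01; sK01; sX2; sX0];
 [:: sCX21; sCCX01; sK01; sX2; sX1];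
 [:: sCX21; sCCX01; sK01; sZ0; sX0];
 [:: sCX21; sCCX01; sK01; sZ1; sX1];
 [:: sCX21; sCCX01; sK01; sZ2; sX2];
 [:: sCX21; sCCX01; sZ0; sCX12; sK01];
 [:: sCX21; sCCX12; sK12; sX1; sX0];
 [:: sCX21; sCCX12; sK12; sZ1; sX1];
 [:: sCX21; sCX01; sCCX01; sK01; sX1];
 [:: sCX21; sCX02; sCCX12; sK12; sX0];
 [:: sCX21; sCX02; sCCX12; sK12; sX1];
 [:: sCX21; sCX02; sCCX12; sK12; sX2];
 [:: sCX21; sCX10; sCCX01; sK01; sX0];
 [:: sCX21; sCX10; sCZ12; sK12; sX0];
 [:: sCX21; sCX10; sK12; sZ1; sX1];
 [:: sCX21; sCX20; sCCX01; sK01; sX1];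
 [:: sCX21; sCZ02; sCCX01; sK01; sX2];
 [:: sCX21; sCZ12; sCCX01; sK01; sX2];
 [:: sCX21; sX0; sCCX01; sK01; sX0];
 [:: sCX21; sX1; sCCX01; sK01; sX1];
 [:: sCX21; sZ0; sCX10; sK12; sX0];
 [:: sCX21; sZ0; sCX20; sCCX01; sK01];
 [:: sCX21; sZ1; sCX01; sCCX12; sK12];
 [:: sCX21; sZ2; sCCX01; sCX02; sK01];
 [:: sCX21; sZ2; sCCX01; sK01; sX2];
 [:: sCX21; sZ2; sCX02; sCCX12; sK12];
 [:: sCZ01; sCCX12; sK12; sX2; sX0];
 [:: sCZ01; sCCX12; sK12; sZ0; sX0];
 [:: sCZ01; sCX01; sCCX01; sK01; sX1];
 [:: sCZ01; sCX01; sCCX12; sK12; sX0];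
 [:: sCZ01; sCX02; sK01; sX2; sX0];
 [:: sCZ01; sCX02; sK01; sZ0; sX0];
 [:: sCZ01; sCX02; sK01; sZ2; sX2];
 [:: sCZ01; sCX10; sCCX01; sK01; sX0];
 [:: sCZ01; sCX12; sK01; sX2; sX1];
 [:: sCZ01; sCX12; sK01; sZ1; sX1];
 [:: sCZ01; sCX12; sK01; sZ2; sX2];
 [:: sCZ01; sCX20; sCX10; sK12; sX2];
 [:: sCZ01; sCX20; sK12; sX2; sX0];
 [:: sCZ01; sK01; sCCX01; sK01; sX1];
 [:: sCZ01; sK01; sCCX01; sK01; sX2];
 [:: sCZ01; sK01; sX2; sX1; sX0];
 [:: sCZ01; sK01; sX2; sZ2; sX2];
 [:: sCZ01; sX0; sCCX01; sK01; sX0];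
 [:: sCZ01; sX0; sCX02; sCCX12; sK12];
 [:: sCZ01; sX1; sCCX01; sCX12; sK01];
 [:: sCZ01; sX1; sCCX01; sK01; sX1];
 [:: sCZ01; sZ2; sCX12; sK01; sX2];
 [:: sCZ02; sCCX01; sK01; sX2; sX1];
 [:: sCZ02; sCCX01; sK01; sZ2; sX2];
 [:: sCZ02; sCCX12; sK12; sZ0; sX0];
 [:: sCZ02; sCX02; sCCX12; sK12; sX0];
 [:: sCZ02; sCX10; sK12; sX1; sX0];
 [:: sCZ02; sCX10; sK12; sZ0; sX0];
 [:: sCZ02; sCX10; sK12; sZ1; sX1];
 [:: sCZ02; sCX12; sK01; sX2; sX1];
 [:: sCZ02; sCX12; sK01; sZ2; sX2];
 [:: sCZ02; sCX20; sCCX01; sK01; sX2];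
 [:: sCZ02; sK01; sCCX01; sK01; sX1];
 [:: sCZ02; sS01; sK12; sZ1; sX1];
 [:: sCZ02; sX0; sCX01; sCCX12; sK12];
 [:: sCZ02; sX2; sCCX02; sCX12; sK01];
 [:: sCZ02; sX2; sCX21; sCCX01; sK01];
 [:: sCZ02; sZ0; sCX10; sK12; sX0];
 [:: sCZ02; sZ2; sCX12; sK01; sX2];
 [:: sCZ12; sCCX01; sK01; sZ2; sX2];
 [:: sCZ12; sCX02; sK01; sZ2; sX2];
 [:: sCZ12; sCX10; sK12; sX1; sX0];
 [:: sCZ12; sCX10; sK12; sZ0; sX0];
 [:: sCZ12; sCX20; sK12; sX2; sX0];
 [:: sCZ12; sCX21; sCCX01; sK01; sX2];
 [:: sCZ12; sK01; sCCX01; sK01; sX1];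
 [:: sCZ12; sK12; sCCX12; sK12; sX0];
 [:: sCZ12; sK12; sCX01; sCCX12; sK12];
 [:: sCZ12; sK12; sX2; sX1; sX0];
 [:: sCZ12; sK12; sX2; sZ2; sX2];
 [:: sCZ12; sX1; sCCX12; sK12; sX1];
 [:: sCZ12; sX2; sCCX12; sCX02; sK01];
 [:: sCZ12; sX2; sCCX12; sK12; sX2];
 [:: sCZ12; sX2; sCX20; sCCX01; sK01];
 [:: sK01; sCCX01; sCX01; sCX12; sK01];
 [:: sK01; sCCX01; sCX12; sK01; sX2];
 [:: sK01; sCCX01; sCX20; sK12; sX0];
 [:: sK01; sCCX01; sCZ01; sCX12; sK01];
 [:: sK01; sCCX01; sCZ01; sK01; sX2];
 [:: sK01; sCCX01; sK01; sX2; sX1];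
 [:: sK01; sCCX01; sK01; sZ0; sX0];
 [:: sK01; sCX01; sCCX12; sK12; sX0];
 [:: sK01; sCX01; sCX20; sCCX01; sK01];
 [:: sK01; sCX02; sCCX12; sK12; sX0];
 [:: sK01; sCX02; sK01; sZ0; sX0];
 [:: sK01; sCX10; sCX21; sCCX01; sK01];
 [:: sK01; sCX12; sCCX02; sCX10; sK12];
 [:: sK01; sCX12; sCX01; sCCX12; sK12];
 [:: sK01; sCX20; sCCX01; sCX12; sK01];
 [:: sK01; sCX20; sCCX01; sCZ01; sK01];
 [:: sK01; sCX20; sCCX01; sK01; sX2];
 [:: sK01; sCX20; sCX21; sCCX01; sK01];
 [:: sK01; sCX20; sK12; sX2; sX0];
 [:: sK01; sCX20; sK12; sZ1; sX1];
 [:: sK01; sCX21; sCCX01; sCX02; sK01];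
 [:: sK01; sCX21; sCCX01; sCX12; sK01];
 [:: sK01; sCX21; sCCX01; sCZ01; sK01];
 [:: sK01; sCX21; sCCX01; sK01; sX2];
 [:: sK01; sCZ02; sCCX01; sK01; sX2];
 [:: sK01; sCZ12; sCCX01; sK01; sX2];
 [:: sK01; sK12; sX2; sX1; sX0];
 [:: sK01; sK12; sX2; sZ2; sX2];
 [:: sK01; sX0; sCCX01; sK01; sX0];
 [:: sK01; sX0; sCX01; sCCX12; sK12];
 [:: sK01; sX0; sCX02; sCCX12; sK12];
 [:: sK01; sX1; sCCX01; sCX12; sK01];
 [:: sK01; sX1; sCCX01; sK01; sX1];
 [:: sK01; sX2; sCX20; sCCX01; sK01];
 [:: sK01; sX2; sCX21; sCCX01; sK01];
 [:: sK01; sZ1; sCX21; sCCX01; sK01];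
 [:: sK01; sZ2; sCCX01; sCX12; sK01];
 [:: sK12; sCCX12; sCX01; sCX12; sK01];
 [:: sK12; sCCX12; sCX02; sK01; sX1];
 [:: sK12; sCCX12; sCX10; sK12; sX0];
 [:: sK12; sCCX12; sCX20; sK12; sX0];
 [:: sK12; sCCX12; sCZ12; sK12; sX0];
 [:: sK12; sCCX12; sK12; sX1; sX0];
 [:: sK12; sCCX12; sK12; sX2; sX0];
 [:: sK12; sCCX12; sK12; sZ1; sX1];
 [:: sK12; sCCX12; sK12; sZ2; sX2];
 [:: sK12; sCX01; sCCX12; sCX02; sK01];
 [:: sK12; sCX01; sCCX12; sCZ12; sK12];
 [:: sK12; sCX01; sCCX12; sK12; sX0];
 [:: sK12; sCX01; sCX20; sCCX01; sK01];
 [:: sK12; sCX02; sCCX12; sK12; sX0];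
 [:: sK12; sCX10; sCCX02; sCX12; sK01];
 [:: sK12; sCX10; sCX21; sCCX01; sK01];
 [:: sK12; sCX12; sCX01; sCCX12; sK12];
 [:: sK12; sCX20; sCCX01; sCX12; sK01];
 [:: sK12; sCX20; sCCX01; sCZ01; sK01];
 [:: sK12; sCX20; sCCX01; sK01; sX1];
 [:: sK12; sCX20; sCCX01; sK01; sX2];
 [:: sK12; sCX20; sCX21; sCCX01; sK01];
 [:: sK12; sCX21; sCCX01; sK01; sX2];
 [:: sK12; sCZ01; sCCX12; sK12; sX0];
 [:: sK12; sCZ02; sCCX12; sK12; sX0];
 [:: sK12; sS12; sCX20; sCCX01; sK01];
 [:: sK12; sX0; sCX01; sCCX12; sK12];
 [:: sK12; sX0; sCX02; sCCX12; sK12];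
 [:: sK12; sX1; sCCX01; sK01; sX1];
 [:: sK12; sX2; sCCX12; sCX02; sK01];
 [:: sK12; sX2; sCCX12; sK12; sX2];
 [:: sK12; sX2; sCX20; sCCX01; sK01];
 [:: sK12; sX2; sCX21; sCCX01; sK01];
 [:: sK12; sZ1; sCX01; sCCX12; sK12];
 [:: sS01; sCX02; sCCX12; sK12; sX0];
 [:: sS01; sCZ01; sCCX12; sK12; sX0];
 [:: sS01; sCZ02; sCCX12; sK12; sX0];
 [:: sS01; sCZ12; sK12; sX1; sX0];
 [:: sS01; sCZ12; sK12; sX2; sX0];
 [:: sS01; sX0; sCX01; sCCX12; sK12];
 [:: sS01; sX0; sCX02; sCCX12; sK12];
 [:: sS12; sCX20; sCCX01; sCZ01; sK01];
 [:: sS12; sX1; sCZ01; sK01; sX1];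
 [:: sX0; sCCX01; sCZ01; sCX02; sK01];
 [:: sX0; sCCX02; sCX10; sK12; sX1];
 [:: sX0; sCCX02; sCZ02; sCX10; sK12];
 [:: sX0; sCX01; sCCX01; sK01; sX1];
 [:: sX0; sCX01; sCCX12; sCZ12; sK12];
 [:: sX0; sCX01; sCCX12; sK12; sX1];
 [:: sX0; sCX02; sCCX12; sCZ12; sK12];
 [:: sX0; sCX02; sCCX12; sK12; sX2];
 [:: sX0; sCX10; sK12; sZ2; sX2];
 [:: sX0; sCX20; sCCX01; sK01; sX1];
 [:: sX0; sCX20; sK12; sZ1; sX1];
 [:: sX0; sCX21; sK12; sZ1; sX1];
 [:: sX0; sCZ02; sCCX01; sK01; sX2];
 [:: sX0; sCZ12; sK12; sZ1; sX1];
 [:: sX0; sCZ12; sK12; sZ2; sX2];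
 [:: sX0; sX1; sCCX01; sK01; sX1];
 [:: sX0; sX1; sCCX12; sK12; sX1];
 [:: sX0; sX2; sCCX12; sK12; sX2];
 [:: sX0; sX2; sCZ12; sK12; sX2];
 [:: sX0; sZ0; sCCX12; sK12; sX0];
 [:: sX0; sZ0; sCX20; sCCX01; sK01];
 [:: sX0; sZ1; sCX21; sCCX01; sK01];
 [:: sX0; sZ2; sCCX01; sK01; sX2];
 [:: sX1; sCCX01; sCZ01; sCX12; sK01];
 [:: sX1; sCCX12; sCZ02; sCX10; sK12];
 [:: sX1; sCCX12; sCZ12; sK12; sX0];
 [:: sX1; sCX01; sCCX12; sK12; sX2];
 [:: sX1; sCX12; sCCX12; sK12; sX2];
 [:: sX1; sCX12; sK01; sZ0; sX0];
 [:: sX1; sCX21; sCCX01; sK01; sX0];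
 [:: sX1; sCZ01; sCCX12; sK12; sX0];
 [:: sX1; sCZ12; sCCX01; sK01; sX2];
 [:: sX1; sS01; sK12; sZ1; sX1];
 [:: sX1; sS12; sK01; sZ1; sX1];
 [:: sX1; sX0; sCCX01; sK01; sX0];
 [:: sX1; sX2; sCCX12; sK12; sX2];
 [:: sX1; sZ0; sCCX12; sK12; sX0];
 [:: sX1; sZ1; sCCX02; sCX10; sK12];
 [:: sX1; sZ1; sCCX02; sCX12; sK01];
 [:: sX1; sZ1; sCX01; sCCX12; sK12];
 [:: sX1; sZ1; sCX21; sCCX01; sK01];
 [:: sX1; sZ2; sCCX01; sK01; sX2];
 [:: sX2; sCCX02; sCX12; sK01; sX1];
 [:: sX2; sCCX02; sCZ01; sCX12; sK01];
 [:: sX2; sCCX12; sCZ01; sCX02; sK01];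
 [:: sX2; sCCX12; sCZ12; sK12; sX0];
 [:: sX2; sCX01; sCCX12; sK12; sX0];
 [:: sX2; sCX02; sCCX12; sK12; sX1];
 [:: sX2; sCX10; sK01; sZ0; sX0];
 [:: sX2; sCX20; sCCX01; sCZ01; sK01];
 [:: sX2; sCX20; sCCX01; sK01; sX0];
 [:: sX2; sCX21; sCCX01; sCZ01; sK01];
 [:: sX2; sCX21; sCCX01; sK01; sX1];
 [:: sX2; sCZ01; sK01; sZ0; sX0];
 [:: sX2; sCZ01; sK01; sZ1; sX1];
 [:: sX2; sCZ02; sCCX12; sK12; sX0];
 [:: sX2; sX0; sCCX01; sK01; sX0];
 [:: sX2; sX1; sCCX01; sK01; sX1];
 [:: sX2; sX1; sCCX12; sK12; sX1];
 [:: sX2; sX1; sCZ01; sK01; sX1];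
 [:: sX2; sZ0; sCCX12; sK12; sX0];
 [:: sX2; sZ2; sCCX01; sK01; sX2];
 [:: sX2; sZ2; sCX02; sCCX12; sK12];
 [:: sZ0; sCCX12; sCX01; sCX12; sK01];
 [:: sZ0; sCCX12; sCX02; sK01; sX1];
 [:: sZ0; sCCX12; sCX10; sK12; sX2];
 [:: sZ0; sCX01; sCCX12; sK12; sX2];
 [:: sZ0; sCX02; sCCX12; sK12; sX1];
 [:: sZ0; sCX10; sCCX02; sCX12; sK01];
 [:: sZ0; sCX10; sCX21; sCCX01; sK01];
 [:: sZ0; sCX10; sCZ12; sK12; sX0];
 [:: sZ0; sCX12; sCX01; sCCX12; sK12];
 [:: sZ0; sCX12; sK01; sX2; sX1];
 [:: sZ0; sCX20; sCCX01; sCX12; sK01];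
 [:: sZ0; sCX20; sCCX01; sK01; sX1];
 [:: sZ0; sCX20; sCCX01; sK01; sX2];
 [:: sZ0; sCX20; sCZ12; sK12; sX0];
 [:: sZ0; sX0; sCCX01; sK01; sX0];
 [:: sZ0; sX0; sCX01; sCCX12; sK12];
 [:: sZ0; sX0; sCX02; sCCX12; sK12];
 [:: sZ0; sX1; sCCX01; sCX12; sK01];
 [:: sZ0; sX1; sCCX12; sK12; sX1];
 [:: sZ0; sX2; sCCX02; sCX12; sK01];
 [:: sZ0; sX2; sCCX12; sCX02; sK01];
 [:: sZ0; sX2; sCCX12; sK12; sX2];
 [:: sZ0; sX2; sCX20; sCCX01; sK01];
 [:: sZ0; sX2; sCX21; sCCX01; sK01];
 [:: sZ0; sZ1; sCCX02; sCX12; sK01];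
 [:: sZ0; sZ1; sCX21; sCCX01; sK01];
 [:: sZ0; sZ2; sCX12; sK01; sX2];
 [:: sZ1; sCCX02; sCX01; sCX12; sK01];
 [:: sZ1; sCCX02; sCX10; sK12; sX0];
 [:: sZ1; sCCX02; sCX10; sK12; sX2];
 [:: sZ1; sCCX02; sCX12; sK01; sX2];
 [:: sZ1; sCX01; sCCX12; sCX02; sK01];
 [:: sZ1; sCX01; sCCX12; sK12; sX0];
 [:: sZ1; sCX01; sCCX12; sK12; sX2];
 [:: sZ1; sCX01; sCX20; sCCX01; sK01];
 [:: sZ1; sCX02; sK01; sZ0; sX0];
 [:: sZ1; sCX20; sK12; sX2; sX0];
 [:: sZ1; sCX21; sCCX01; sCX02; sK01];
 [:: sZ1; sCX21; sCCX01; sK01; sX2];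
 [:: sZ1; sX0; sCX01; sCCX12; sK12];
 [:: sZ1; sX0; sCX02; sCCX12; sK12];
 [:: sZ1; sX1; sCCX01; sCX12; sK01];
 [:: sZ1; sX1; sCCX01; sK01; sX1];
 [:: sZ1; sX1; sCCX12; sK12; sX1];
 [:: sZ1; sX2; sCCX02; sCX12; sK01];
 [:: sZ1; sX2; sCCX12; sCX02; sK01];
 [:: sZ1; sX2; sCX20; sCCX01; sK01];
 [:: sZ1; sX2; sCX21; sCCX01; sK01];
 [:: sZ1; sZ2; sCX02; sCCX12; sK12];
 [:: sZ2; sCCX01; sCX01; sCX12; sK01];
 [:: sZ2; sCX02; sCCX12; sCX10; sK12];
 [:: sZ2; sCX02; sCCX12; sK12; sX0];
 [:: sZ2; sCX10; sCX21; sCCX01; sK01];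
 [:: sZ2; sCX10; sK12; sX1; sX0];
 [:: sZ2; sCX10; sK12; sZ1; sX1];
 [:: sZ2; sCX12; sCCX02; sCX10; sK12];
 [:: sZ2; sCX12; sCX01; sCCX12; sK12];
 [:: sZ2; sCX20; sCCX01; sK01; sX1];
 [:: sZ2; sCX21; sCCX01; sK01; sX0];
 [:: sZ2; sX0; sCCX01; sK01; sX0];
 [:: sZ2; sX0; sCX01; sCCX12; sK12];
 [:: sZ2; sX0; sCX02; sCCX12; sK12];
 [:: sZ2; sX1; sCCX01; sCX12; sK01];
 [:: sZ2; sX1; sCCX01; sK01; sX1];
 [:: sZ2; sX2; sCCX02; sCX12; sK01];
 [:: sZ2; sX2; sCCX12; sCX02; sK01];
 [:: sZ2; sX2; sCCX12; sK12; sX2];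
 [:: sZ2; sX2; sCX20; sCCX01; sK01];
 [:: sZ2; sX2; sCX21; sCCX01; sK01];
 [:: sCCX01; sCX01; sCX12; sK01; sX2; sX1];
 [:: sCCX01; sCX01; sCX12; sK01; sZ2; sX2];
 [:: sCCX01; sCX10; sCX02; sK01; sZ0; sX0];
 [:: sCCX01; sCZ01; sCX02; sK01; sZ0; sX0];
 [:: sCCX01; sCZ01; sCX12; sK01; sZ1; sX1];
 [:: sCCX01; sCZ02; sCX12; sK01; sX2; sX1];
 [:: sCCX01; sCZ02; sCX12; sK01; sZ2; sX2];
 [:: sCCX01; sCZ12; sCX02; sK01; sZ2; sX2];
 [:: sCCX01; sX2; sCX10; sK01; sZ0; sX0];
 [:: sCCX01; sX2; sX1; sCZ01; sK01; sX1];
 [:: sCCX01; sZ0; sCX20; sCZ12; sK12; sX0];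
 [:: sCCX01; sZ0; sZ2; sCX12; sK01; sX2];
 [:: sCCX01; sZ1; sCX20; sK12; sX2; sX0];
 [:: sCCX02; sCX01; sCX12; sK01; sZ2; sX2];
 [:: sCCX02; sCX02; sCX10; sK12; sX2; sX0];
 [:: sCCX02; sCX02; sZ2; sCX12; sK01; sX2];
 [:: sCCX02; sCX10; sCX02; sK01; sZ0; sX0];
 [:: sCCX02; sCX10; sCX12; sK01; sZ0; sX0];
 [:: sCCX02; sCX10; sCZ12; sK12; sZ2; sX2];
 [:: sCCX02; sCX10; sK12; sX2; sZ2; sX2];
 [:: sCCX02; sCX10; sX2; sCZ12; sK12; sX2];
 [:: sCCX02; sCX12; sCZ01; sK01; sZ0; sX0];
 [:: sCCX02; sCX12; sK01; sX2; sZ2; sX2];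
 [:: sCCX02; sCX12; sX1; sCZ01; sK01; sX1];
 [:: sCCX02; sCX20; sCX10; sK12; sX1; sX0];
 [:: sCCX02; sCX20; sCX10; sK12; sZ1; sX1];
 [:: sCCX02; sCX20; sS01; sK12; sZ1; sX1];
 [:: sCCX02; sCX21; sCX10; sK12; sZ1; sX1];
 [:: sCCX02; sCZ01; sCX12; sK01; sX2; sX1];
 [:: sCCX02; sCZ01; sCX12; sK01; sZ1; sX1];
 [:: sCCX02; sCZ01; sCX12; sK01; sZ2; sX2];
 [:: sCCX02; sCZ01; sZ2; sCX12; sK01; sX2];
 [:: sCCX02; sCZ02; sCX10; sK12; sZ0; sX0];
 [:: sCCX02; sCZ02; sCX10; sK12; sZ1; sX1];
 [:: sCCX02; sCZ02; sCX12; sK01; sZ2; sX2];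
 [:: sCCX02; sCZ02; sS01; sK12; sZ1; sX1];
 [:: sCCX02; sCZ12; sCX10; sK12; sX1; sX0];
 [:: sCCX02; sCZ12; sCX10; sK12; sZ0; sX0];
 [:: sCCX02; sK01; sCX02; sK01; sZ0; sX0];
 [:: sCCX02; sK01; sCX20; sK12; sX2; sX0];
 [:: sCCX02; sK01; sK12; sX2; sX1; sX0];
 [:: sCCX02; sK01; sK12; sX2; sZ2; sX2];
 [:: sCCX02; sS12; sX1; sCZ01; sK01; sX1];
 [:: sCCX02; sX0; sCX10; sK12; sZ2; sX2];
 [:: sCCX02; sX1; sCX12; sK01; sZ0; sX0];
 [:: sCCX02; sX1; sS01; sK12; sZ1; sX1];
 [:: sCCX02; sX1; sS12; sK01; sZ1; sX1];
 [:: sCCX02; sZ0; sCX10; sCZ12; sK12; sX0];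
 [:: sCCX02; sZ0; sCX12; sK01; sX2; sX1];
 [:: sCCX02; sZ0; sZ2; sCX12; sK01; sX2];
 [:: sCCX02; sZ2; sCX10; sK12; sX1; sX0];
 [:: sCCX02; sZ2; sCX10; sK12; sZ1; sX1];
 [:: sCCX12; sCX01; sCX12; sK01; sZ2; sX2];
 [:: sCCX12; sCX02; sCX10; sK12; sX2; sX0];
 [:: sCCX12; sCX02; sK01; sX2; sX1; sX0];
 [:: sCCX12; sCX12; sCX20; sK12; sX2; sX0];
 [:: sCCX12; sCX21; sCX10; sK12; sZ1; sX1];
 [:: sCCX12; sCZ01; sCX02; sK01; sZ0; sX0];
 [:: sCCX12; sCZ01; sCX02; sK01; sZ2; sX2];
 [:: sCCX12; sCZ01; sCX20; sK12; sX2; sX0];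
 [:: sCCX12; sCZ02; sCX10; sK12; sX1; sX0];
 [:: sCCX12; sCZ02; sCX10; sK12; sZ0; sX0];
 [:: sCCX12; sCZ02; sCX10; sK12; sZ1; sX1];
 [:: sCCX12; sX0; sCX21; sK12; sZ1; sX1];
 [:: sCCX12; sX0; sX2; sCZ12; sK12; sX2];
 [:: sCX01; sCCX12; sCX02; sK01; sZ0; sX0];
 [:: sCX01; sCCX12; sCX02; sK01; sZ2; sX2];
 [:: sCX01; sCCX12; sCZ12; sK12; sZ1; sX1];
 [:: sCX01; sCCX12; sCZ12; sK12; sZ2; sX2];
 [:: sCX01; sCCX12; sK12; sX2; sZ2; sX2];
 [:: sCX01; sCX02; sCZ02; sCCX12; sK12; sX0];
 [:: sCX01; sCX02; sZ0; sCCX12; sK12; sX0];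
 [:: sCX01; sCX12; sCCX12; sK12; sX2; sX0];
 [:: sCX01; sCX12; sCCX12; sK12; sZ2; sX2];
 [:: sCX01; sCX20; sCCX01; sK01; sX2; sX0];
 [:: sCX01; sCX20; sCCX01; sK01; sX2; sX1];
 [:: sCX01; sCX20; sCCX01; sK01; sZ0; sX0];
 [:: sCX01; sCX20; sCCX01; sK01; sZ1; sX1];
 [:: sCX01; sCX20; sCCX01; sK01; sZ2; sX2];
 [:: sCX01; sCX20; sCZ02; sCCX01; sK01; sX2];
 [:: sCX01; sCX20; sK12; sCX01; sCCX12; sK12];
 [:: sCX01; sCX20; sX2; sCCX12; sK12; sX2];
 [:: sCX01; sCX20; sZ0; sCCX12; sK12; sX0];
 [:: sCX01; sCX21; sCCX01; sK01; sX2; sX1];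
 [:: sCX01; sCX21; sCCX01; sK01; sZ1; sX1];
 [:: sCX01; sCX21; sCCX12; sK12; sX1; sX0];
 [:: sCX01; sCX21; sCZ12; sCCX01; sK01; sX2];
 [:: sCX01; sCZ01; sCX12; sK01; sZ1; sX1];
 [:: sCX01; sCZ01; sCX12; sK01; sZ2; sX2];
 [:: sCX01; sCZ02; sK01; sCCX01; sK01; sX1];
 [:: sCX01; sCZ12; sK01; sCCX01; sK01; sX1];
 [:: sCX01; sCZ12; sK12; sCCX12; sK12; sX0];
 [:: sCX01; sCZ12; sX1; sCCX12; sK12; sX1];
 [:: sCX01; sCZ12; sX2; sCCX12; sK12; sX2];
 [:: sCX01; sK01; sCCX01; sCZ01; sK01; sX2];
 [:: sCX01; sK01; sCCX01; sK01; sX2; sX1];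
 [:: sCX01; sK01; sZ1; sCX21; sCCX01; sK01];
 [:: sCX01; sX0; sCX02; sCCX12; sCZ12; sK12];
 [:: sCX01; sX0; sCX02; sCCX12; sK12; sX2];
 [:: sCX01; sX0; sX2; sCCX12; sK12; sX2];
 [:: sCX01; sX0; sZ0; sCCX12; sK12; sX0];
 [:: sCX01; sX0; sZ0; sCX20; sCCX01; sK01];
 [:: sCX01; sX1; sCX12; sCCX12; sK12; sX2];
 [:: sCX01; sX2; sCCX12; sCZ01; sCX02; sK01];
 [:: sCX01; sX2; sCX20; sCCX01; sCZ01; sK01];
 [:: sCX01; sX2; sCX20; sCCX01; sK01; sX0];
 [:: sCX01; sX2; sCX21; sCCX01; sK01; sX1];
 [:: sCX01; sX2; sZ2; sCX02; sCCX12; sK12];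
 [:: sCX01; sZ0; sX2; sCX20; sCCX01; sK01];
 [:: sCX01; sZ1; sX0; sCX02; sCCX12; sK12];
 [:: sCX01; sZ1; sX1; sCCX12; sK12; sX1];
 [:: sCX01; sZ1; sX2; sCX20; sCCX01; sK01];
 [:: sCX01; sZ2; sX0; sCX02; sCCX12; sK12];
 [:: sCX01; sZ2; sX2; sCCX12; sK12; sX2];
 [:: sCX02; sCCX12; sCX10; sK12; sZ0; sX0];
 [:: sCX02; sCCX12; sCX10; sK12; sZ1; sX1];
 [:: sCX02; sCCX12; sCZ12; sK12; sZ1; sX1];
 [:: sCX02; sCCX12; sCZ12; sK12; sZ2; sX2];
 [:: sCX02; sCCX12; sK12; sX2; sZ2; sX2];
 [:: sCX02; sCX01; sCCX12; sK12; sX1; sX0];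
 [:: sCX02; sCX01; sX2; sCCX12; sK12; sX2];
 [:: sCX02; sCX10; sX1; sCCX12; sK12; sX1];
 [:: sCX02; sCX10; sZ0; sCCX12; sK12; sX0];
 [:: sCX02; sCX12; sCCX12; sK12; sX2; sX0];
 [:: sCX02; sCX12; sK01; sCCX01; sK01; sX1];
 [:: sCX02; sCX21; sCCX01; sK01; sX2; sX1];
 [:: sCX02; sCX21; sCCX01; sK01; sZ1; sX1];
 [:: sCX02; sCZ01; sK01; sCCX01; sK01; sX2];
 [:: sCX02; sCZ12; sK01; sCCX01; sK01; sX1];
 [:: sCX02; sCZ12; sK12; sCCX12; sK12; sX0];
 [:: sCX02; sCZ12; sX1; sCCX12; sK12; sX1];
 [:: sCX02; sCZ12; sX2; sCCX12; sK12; sX2];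
 [:: sCX02; sK01; sCCX01; sK01; sZ0; sX0];
 [:: sCX02; sK01; sCX01; sCX20; sCCX01; sK01];
 [:: sCX02; sK01; sCX10; sCX21; sCCX01; sK01];
 [:: sCX02; sK01; sCX12; sCX01; sCCX12; sK12];
 [:: sCX02; sK01; sCX21; sCCX01; sCX02; sK01];
 [:: sCX02; sK01; sCX21; sCCX01; sK01; sX2];
 [:: sCX02; sK01; sX2; sCX21; sCCX01; sK01];
 [:: sCX02; sK12; sCCX12; sCX02; sK01; sX1];
 [:: sCX02; sK12; sCCX12; sK12; sX1; sX0];
 [:: sCX02; sX0; sCX01; sCCX12; sK12; sX1];
 [:: sCX02; sX0; sX1; sCCX12; sK12; sX1];
 [:: sCX02; sX0; sZ0; sCCX12; sK12; sX0];
 [:: sCX02; sX0; sZ0; sCX20; sCCX01; sK01];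
 [:: sCX02; sX2; sCX21; sCCX01; sK01; sX1];
 [:: sCX02; sX2; sZ2; sCCX01; sK01; sX2];
 [:: sCX02; sZ1; sCX01; sCCX12; sK12; sX0];
 [:: sCX02; sZ1; sCX01; sCCX12; sK12; sX2];
 [:: sCX02; sZ1; sX1; sCCX12; sK12; sX1];
 [:: sCX02; sZ2; sX0; sCCX01; sK01; sX0];
 [:: sCX02; sZ2; sX2; sCCX12; sK12; sX2];
 [:: sCX02; sZ2; sX2; sCX20; sCCX01; sK01];
 [:: sCX10; sCCX02; sCX12; sK01; sZ0; sX0];
 [:: sCX10; sCCX02; sCX12; sK01; sZ2; sX2];
 [:: sCX10; sCCX02; sS01; sK12; sZ1; sX1];
 [:: sCX10; sCX02; sCCX12; sK12; sX2; sX0];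
 [:: sCX10; sCX20; sCCX01; sK01; sX2; sX0];
 [:: sCX10; sCX20; sCCX01; sK01; sZ0; sX0];
 [:: sCX10; sCX20; sCZ02; sCCX01; sK01; sX2];
 [:: sCX10; sCX21; sCCX01; sK01; sX1; sX0];
 [:: sCX10; sCX21; sCCX01; sK01; sX2; sX1];
 [:: sCX10; sCX21; sCCX01; sK01; sZ0; sX0];
 [:: sCX10; sCX21; sCCX01; sK01; sZ1; sX1];
 [:: sCX10; sCX21; sCCX01; sK01; sZ2; sX2];
 [:: sCX10; sCX21; sCZ02; sCCX01; sK01; sX2];
 [:: sCX10; sCX21; sCZ12; sCCX01; sK01; sX2];
 [:: sCX10; sCX21; sX0; sCCX01; sK01; sX0];
 [:: sCX10; sCX21; sZ2; sCCX01; sK01; sX2];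
 [:: sCX10; sCZ01; sCX02; sK01; sZ0; sX0];
 [:: sCX10; sCZ01; sCX02; sK01; sZ2; sX2];
 [:: sCX10; sCZ02; sK01; sCCX01; sK01; sX1];
 [:: sCX10; sCZ12; sCX21; sCCX01; sK01; sX2];
 [:: sCX10; sCZ12; sK12; sCCX12; sK12; sX0];
 [:: sCX10; sCZ12; sK12; sX2; sZ2; sX2];
 [:: sCX10; sK01; sCCX01; sCZ01; sK01; sX2];
 [:: sCX10; sK01; sZ1; sCX21; sCCX01; sK01];
 [:: sCX10; sK12; sCCX12; sK12; sX2; sX0];
 [:: sCX10; sK12; sCX02; sCCX12; sK12; sX0];
 [:: sCX10; sK12; sCX10; sCX21; sCCX01; sK01];
 [:: sCX10; sK12; sCX20; sCCX01; sK01; sX1];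
 [:: sCX10; sK12; sCX20; sCX21; sCCX01; sK01];
 [:: sCX10; sK12; sX0; sCX02; sCCX12; sK12];
 [:: sCX10; sX0; sZ0; sCCX12; sK12; sX0];
 [:: sCX10; sX0; sZ0; sCX20; sCCX01; sK01];
 [:: sCX10; sX1; sZ1; sCX21; sCCX01; sK01];
 [:: sCX10; sX2; sCX20; sCCX01; sK01; sX0];
 [:: sCX10; sX2; sCX21; sCCX01; sK01; sX1];
 [:: sCX10; sZ1; sCX21; sCCX01; sK01; sX2];
 [:: sCX10; sZ1; sX2; sCX21; sCCX01; sK01];
 [:: sCX10; sZ2; sX2; sCX21; sCCX01; sK01];
 [:: sCX12; sCCX02; sCX10; sCZ12; sK12; sX0];
 [:: sCX12; sCCX02; sCX10; sK12; sZ0; sX0];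
 [:: sCX12; sCCX02; sCX10; sK12; sZ1; sX1];
 [:: sCX12; sCX01; sCCX12; sK12; sX2; sX1];
 [:: sCX12; sCX01; sCCX12; sK12; sZ0; sX0];
 [:: sCX12; sCX01; sCCX12; sK12; sZ1; sX1];
 [:: sCX12; sCX01; sCCX12; sK12; sZ2; sX2];
 [:: sCX12; sCX01; sCZ01; sCCX12; sK12; sX0];
 [:: sCX12; sCX01; sCZ02; sCCX12; sK12; sX0];
 [:: sCX12; sCX01; sZ0; sCCX12; sK12; sX0];
 [:: sCX12; sCX02; sCCX12; sK12; sZ2; sX2];
 [:: sCX12; sCX02; sCZ02; sCCX12; sK12; sX0];
 [:: sCX12; sCX20; sCCX01; sK01; sX2; sX0];
 [:: sCX12; sCX20; sCCX01; sK01; sZ0; sX0];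
 [:: sCX12; sCX20; sK12; sCX01; sCCX12; sK12];
 [:: sCX12; sCZ01; sCX01; sCCX12; sK12; sX0];
 [:: sCX12; sCZ01; sK01; sCCX01; sK01; sX2];
 [:: sCX12; sCZ01; sK01; sX2; sZ2; sX2];
 [:: sCX12; sCZ02; sK01; sCCX01; sK01; sX1];
 [:: sCX12; sK01; sCX20; sCCX01; sK01; sX2];
 [:: sCX12; sK01; sX2; sCX20; sCCX01; sK01];
 [:: sCX12; sK12; sCCX12; sCZ12; sK12; sX0];
 [:: sCX12; sK12; sCCX12; sK12; sX1; sX0];
 [:: sCX12; sK12; sCX20; sCCX01; sK01; sX1];
 [:: sCX12; sK12; sZ1; sCX01; sCCX12; sK12];
 [:: sCX12; sX0; sCX02; sCCX12; sK12; sX2];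
 [:: sCX12; sX1; sZ1; sCX21; sCCX01; sK01];
 [:: sCX12; sX2; sCX20; sCCX01; sK01; sX0];
 [:: sCX12; sX2; sZ2; sCCX01; sK01; sX2];
 [:: sCX12; sZ1; sCX01; sCCX12; sK12; sX0];
 [:: sCX12; sZ1; sX1; sCCX01; sK01; sX1];
 [:: sCX12; sZ2; sX0; sCX01; sCCX12; sK12];
 [:: sCX20; sCCX01; sCX12; sK01; sZ2; sX2];
 [:: sCX20; sCCX01; sCZ01; sK01; sZ0; sX0];
 [:: sCX20; sCX01; sCCX01; sK01; sZ1; sX1];
 [:: sCX20; sCX01; sCCX12; sK12; sX1; sX0];
 [:: sCX20; sCX01; sCCX12; sK12; sZ1; sX1];
 [:: sCX20; sCX10; sK01; sCCX01; sK01; sX1];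
 [:: sCX20; sCX10; sK12; sX2; sZ2; sX2];
 [:: sCX20; sCX12; sZ2; sCCX01; sK01; sX2];
 [:: sCX20; sCX21; sCCX01; sK01; sX2; sX1];
 [:: sCX20; sCX21; sCCX01; sK01; sZ0; sX0];
 [:: sCX20; sCX21; sCCX01; sK01; sZ1; sX1];
 [:: sCX20; sCX21; sCCX01; sK01; sZ2; sX2];
 [:: sCX20; sCX21; sCZ12; sCCX01; sK01; sX2];
 [:: sCX20; sCX21; sX0; sCCX01; sK01; sX0];
 [:: sCX20; sCX21; sZ2; sCCX01; sK01; sX2];
 [:: sCX20; sCZ01; sK01; sCCX01; sK01; sX1];
 [:: sCX20; sCZ01; sK01; sCCX01; sK01; sX2];
 [:: sCX20; sCZ01; sX0; sCCX01; sK01; sX0];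
 [:: sCX20; sCZ02; sCX10; sK12; sZ0; sX0];
 [:: sCX20; sCZ02; sCX10; sK12; sZ1; sX1];
 [:: sCX20; sCZ12; sK12; sCCX12; sK12; sX0];
 [:: sCX20; sCZ12; sK12; sX2; sZ2; sX2];
 [:: sCX20; sK12; sCCX12; sCX02; sK01; sX1];
 [:: sCX20; sK12; sCCX12; sK12; sX1; sX0];
 [:: sCX20; sK12; sCCX12; sK12; sZ2; sX2];
 [:: sCX20; sK12; sCX01; sCCX12; sK12; sX0];
 [:: sCX20; sK12; sX0; sCX01; sCCX12; sK12];
 [:: sCX20; sX0; sCX01; sCCX01; sK01; sX1];
 [:: sCX20; sX0; sCX01; sCCX12; sK12; sX1];
 [:: sCX20; sX0; sZ0; sCCX12; sK12; sX0];
 [:: sCX20; sX1; sCZ12; sCCX01; sK01; sX2];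
 [:: sCX20; sX2; sX1; sCCX01; sK01; sX1];
 [:: sCX20; sX2; sZ2; sCCX01; sK01; sX2];
 [:: sCX20; sZ0; sX0; sCCX01; sK01; sX0];
 [:: sCX20; sZ2; sX2; sCCX12; sK12; sX2];
 [:: sCX21; sCCX01; sCX02; sK01; sZ0; sX0];
 [:: sCX21; sCCX01; sCX02; sK01; sZ2; sX2];
 [:: sCX21; sCCX01; sCX12; sK01; sZ1; sX1];
 [:: sCX21; sCCX01; sCZ01; sK01; sZ0; sX0];
 [:: sCX21; sCCX01; sCZ01; sK01; sZ1; sX1];
 [:: sCX21; sCCX01; sK01; sX2; sZ2; sX2];
 [:: sCX21; sCCX01; sZ2; sCX12; sK01; sX2];
 [:: sCX21; sCX01; sCCX12; sK12; sZ1; sX1];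
 [:: sCX21; sCX01; sCZ01; sCCX12; sK12; sX0];
 [:: sCX21; sCX02; sCCX12; sK12; sZ1; sX1];
 [:: sCX21; sCX02; sCZ01; sCCX12; sK12; sX0];
 [:: sCX21; sCX02; sCZ02; sCCX12; sK12; sX0];
 [:: sCX21; sCX02; sZ0; sCCX12; sK12; sX0];
 [:: sCX21; sCX02; sZ2; sCCX01; sK01; sX2];
 [:: sCX21; sCX10; sCCX01; sK01; sX2; sX0];
 [:: sCX21; sCX10; sCCX01; sK01; sZ0; sX0];
 [:: sCX21; sCX12; sX1; sCCX01; sK01; sX1];
 [:: sCX21; sCX20; sCCX01; sK01; sX2; sX0];
 [:: sCX21; sCX20; sCZ02; sCCX01; sK01; sX2];
 [:: sCX21; sCZ01; sK01; sCCX01; sK01; sX1];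
 [:: sCX21; sCZ01; sK01; sCCX01; sK01; sX2];
 [:: sCX21; sCZ01; sX1; sCCX01; sK01; sX1];
 [:: sCX21; sCZ02; sCX02; sCCX12; sK12; sX0];
 [:: sCX21; sCZ02; sK01; sCCX01; sK01; sX1];
 [:: sCX21; sK12; sCCX12; sCZ12; sK12; sX0];
 [:: sCX21; sK12; sCCX12; sK12; sX2; sX0];
 [:: sCX21; sK12; sZ1; sCX01; sCCX12; sK12];
 [:: sCX21; sX0; sCX01; sCCX01; sK01; sX1];
 [:: sCX21; sX0; sCX01; sCCX12; sK12; sX1];
 [:: sCX21; sX0; sCZ02; sCCX01; sK01; sX2];
 [:: sCX21; sX1; sZ1; sCX01; sCCX12; sK12];
 [:: sCX21; sX2; sX0; sCCX01; sK01; sX0];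
 [:: sCX21; sX2; sZ2; sCCX01; sK01; sX2];
 [:: sCX21; sZ1; sX0; sCX02; sCCX12; sK12];
 [:: sCX21; sZ1; sX1; sCCX01; sK01; sX1];
 [:: sCX21; sZ2; sX1; sCCX01; sCX12; sK01];
 [:: sCZ01; sCX01; sCX12; sK01; sZ2; sX2];
 [:: sCZ01; sCX02; sCCX12; sK12; sX2; sX0];
 [:: sCZ01; sCX02; sCCX12; sK12; sZ0; sX0];
 [:: sCZ01; sCX02; sCX01; sCCX12; sK12; sX0];
 [:: sCZ01; sCX02; sX0; sCCX01; sK01; sX0];
 [:: sCZ01; sCX10; sK01; sCCX01; sK01; sX1];
 [:: sCZ01; sCX12; sK01; sCCX01; sK01; sX1];
 [:: sCZ01; sCZ02; sK01; sCCX01; sK01; sX1];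
 [:: sCZ01; sCZ12; sK01; sCCX01; sK01; sX1];
 [:: sCZ01; sCZ12; sK12; sCCX12; sK12; sX0];
 [:: sCZ01; sK01; sCCX01; sCX01; sCX12; sK01];
 [:: sCZ01; sK01; sCCX01; sK01; sX2; sX1];
 [:: sCZ01; sK01; sCCX01; sK01; sZ0; sX0];
 [:: sCZ01; sK01; sCX20; sCCX01; sK01; sX2];
 [:: sCZ01; sK01; sCX21; sCCX01; sCX02; sK01];
 [:: sCZ01; sK01; sCX21; sCCX01; sK01; sX2];
 [:: sCZ01; sK01; sCZ02; sCCX01; sK01; sX2];
 [:: sCZ01; sK01; sCZ12; sCCX01; sK01; sX2];
 [:: sCZ01; sK01; sX2; sCX20; sCCX01; sK01];
 [:: sCZ01; sK01; sX2; sCX21; sCCX01; sK01];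
 [:: sCZ01; sK12; sCCX12; sCX02; sK01; sX1];
 [:: sCZ01; sK12; sCCX12; sCZ12; sK12; sX0];
 [:: sCZ01; sK12; sCCX12; sK12; sX1; sX0];
 [:: sCZ01; sK12; sCCX12; sK12; sX2; sX0];
 [:: sCZ01; sK12; sCX20; sCCX01; sK01; sX1];
 [:: sCZ01; sX0; sCX02; sCCX12; sK12; sX2];
 [:: sCZ01; sX0; sX1; sCCX01; sK01; sX1];
 [:: sCZ01; sX1; sX0; sCCX01; sK01; sX0];
 [:: sCZ02; sCX01; sCCX12; sK12; sX1; sX0];
 [:: sCZ02; sCX01; sCCX12; sK12; sZ0; sX0];
 [:: sCZ02; sCX02; sCX01; sCCX12; sK12; sX0];
 [:: sCZ02; sCX21; sCCX01; sK01; sX2; sX1];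
 [:: sCZ02; sCX21; sCCX01; sK01; sZ2; sX2];
 [:: sCZ02; sCZ12; sK01; sCCX01; sK01; sX1];
 [:: sCZ02; sCZ12; sK12; sCCX12; sK12; sX0];
 [:: sCZ02; sK01; sCCX01; sCZ01; sCX12; sK01];
 [:: sCZ02; sK01; sCCX01; sCZ01; sK01; sX2];
 [:: sCZ02; sK01; sCCX01; sK01; sX2; sX1];
 [:: sCZ02; sK01; sZ1; sCX21; sCCX01; sK01];
 [:: sCZ02; sK12; sCCX12; sCZ12; sK12; sX0];
 [:: sCZ02; sK12; sCCX12; sK12; sX1; sX0];
 [:: sCZ02; sK12; sCCX12; sK12; sX2; sX0];
 [:: sCZ02; sK12; sZ1; sCX01; sCCX12; sK12];
 [:: sCZ02; sX0; sCCX02; sCX10; sK12; sX1];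
 [:: sCZ02; sX2; sCCX02; sCX12; sK01; sX1];
 [:: sCZ02; sX2; sCX21; sCCX01; sK01; sX1];
 [:: sCZ12; sCX02; sCX01; sCCX12; sK12; sX0];
 [:: sCZ12; sCX10; sK01; sCCX01; sK01; sX1];
 [:: sCZ12; sCX10; sX1; sCCX12; sK12; sX1];
 [:: sCZ12; sCX12; sK01; sCCX01; sK01; sX1];
 [:: sCZ12; sCX20; sCCX01; sK01; sX2; sX0];
 [:: sCZ12; sCX20; sCCX01; sK01; sZ2; sX2];
 [:: sCZ12; sCX21; sCX10; sK12; sZ1; sX1];
 [:: sCZ12; sK01; sCCX01; sCZ01; sK01; sX2];
 [:: sCZ12; sK01; sCCX01; sK01; sX2; sX1];
 [:: sCZ12; sK12; sCCX12; sCX01; sCX12; sK01];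
 [:: sCZ12; sK12; sCCX12; sCX02; sK01; sX1];
 [:: sCZ12; sK12; sCCX12; sCZ12; sK12; sX0];
 [:: sCZ12; sK12; sCCX12; sK12; sX1; sX0];
 [:: sCZ12; sK12; sCCX12; sK12; sX2; sX0];
 [:: sCZ12; sK12; sCCX12; sK12; sZ2; sX2];
 [:: sCZ12; sK12; sCX20; sCCX01; sK01; sX1];
 [:: sCZ12; sK12; sCZ01; sCCX12; sK12; sX0];
 [:: sCZ12; sK12; sCZ02; sCCX12; sK12; sX0];
 [:: sCZ12; sK12; sX0; sCX01; sCCX12; sK12];
 [:: sCZ12; sK12; sX0; sCX02; sCCX12; sK12];
 [:: sK01; sCCX01; sCX02; sCZ01; sK01; sX2];
 [:: sK01; sCCX01; sCX02; sK01; sZ0; sX0];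
 [:: sK01; sCCX01; sCX10; sK01; sZ0; sX0];
 [:: sK01; sCCX01; sCX12; sCZ01; sK01; sX2];
 [:: sK01; sCCX01; sCX20; sCZ12; sK12; sX0];
 [:: sK01; sCCX01; sCX20; sK12; sX2; sX0];
 [:: sK01; sCCX01; sCZ01; sK01; sZ0; sX0];
 [:: sK01; sCCX01; sCZ12; sCX01; sCX12; sK01];
 [:: sK01; sCCX01; sX1; sCZ01; sK01; sX1];
 [:: sK01; sCX01; sCCX01; sK01; sZ1; sX1];
 [:: sK01; sCX01; sCCX12; sK12; sZ1; sX1];
 [:: sK01; sCX01; sCZ01; sCCX12; sK12; sX0];
 [:: sK01; sCX01; sCZ02; sCCX12; sK12; sX0];
 [:: sK01; sCX01; sX1; sCCX12; sK12; sX1];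
 [:: sK01; sCX01; sZ2; sCX02; sCCX12; sK12];
 [:: sK01; sCX02; sCCX12; sCZ12; sK12; sX0];
 [:: sK01; sCX02; sCCX12; sK12; sX1; sX0];
 [:: sK01; sCX02; sCCX12; sK12; sZ1; sX1];
 [:: sK01; sCX02; sCCX12; sK12; sZ2; sX2];
 [:: sK01; sCX02; sCX01; sCCX12; sK12; sX0];
 [:: sK01; sCX02; sCZ01; sCCX12; sK12; sX0];
 [:: sK01; sCX02; sCZ02; sCCX12; sK12; sX0];
 [:: sK01; sCX02; sX0; sCCX01; sK01; sX0];
 [:: sK01; sCX02; sX2; sCCX12; sK12; sX2];
 [:: sK01; sCX10; sCCX01; sK01; sZ0; sX0];
 [:: sK01; sCX10; sCX21; sCCX01; sK01; sX2];
 [:: sK01; sCX12; sCCX02; sCX10; sK12; sX2];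
 [:: sK01; sCX12; sCCX02; sCZ02; sCX10; sK12];
 [:: sK01; sCX12; sCX01; sCCX12; sK12; sX0];
 [:: sK01; sCX12; sCX01; sCCX12; sK12; sX1];
 [:: sK01; sCX12; sCX01; sCCX12; sK12; sX2];
 [:: sK01; sCX12; sX1; sCCX01; sK01; sX1];
 [:: sK01; sCX20; sCCX01; sK01; sZ0; sX0];
 [:: sK01; sCX20; sCZ02; sCCX01; sK01; sX2];
 [:: sK01; sCX20; sCZ12; sCCX01; sK01; sX2];
 [:: sK01; sCX20; sX0; sCCX01; sK01; sX0];
 [:: sK01; sCX20; sZ2; sCCX01; sCX12; sK01];
 [:: sK01; sCX21; sCCX01; sK01; sZ0; sX0];
 [:: sK01; sCX21; sCCX01; sK01; sZ1; sX1];
 [:: sK01; sCX21; sCCX12; sK12; sX1; sX0];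
 [:: sK01; sCX21; sCCX12; sK12; sZ1; sX1];
 [:: sK01; sCX21; sCX02; sCCX12; sK12; sX0];
 [:: sK01; sCX21; sCZ02; sCCX01; sK01; sX2];
 [:: sK01; sCX21; sCZ12; sCCX01; sK01; sX2];
 [:: sK01; sCX21; sX0; sCCX01; sK01; sX0];
 [:: sK01; sCX21; sX1; sCCX01; sK01; sX1];
 [:: sK01; sCX21; sZ2; sCCX01; sCX02; sK01];
 [:: sK01; sCX21; sZ2; sCCX01; sK01; sX2];
 [:: sK01; sCX21; sZ2; sCX02; sCCX12; sK12];
 [:: sK01; sCZ01; sX0; sCCX01; sK01; sX0];
 [:: sK01; sCZ01; sX0; sCX02; sCCX12; sK12];
 [:: sK01; sCZ01; sX1; sCCX01; sCX12; sK01];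
 [:: sK01; sCZ02; sCX02; sCCX12; sK12; sX0];
 [:: sK01; sCZ02; sX2; sCX21; sCCX01; sK01];
 [:: sK01; sCZ12; sCX21; sCCX01; sK01; sX2];
 [:: sK01; sCZ12; sX2; sCX20; sCCX01; sK01];
 [:: sK01; sK12; sCX01; sCCX12; sK12; sX0];
 [:: sK01; sK12; sX0; sCX01; sCCX12; sK12];
 [:: sK01; sS01; sCX02; sCCX12; sK12; sX0];
 [:: sK01; sS01; sX0; sCX02; sCCX12; sK12];
 [:: sK01; sX0; sCCX01; sCZ01; sCX02; sK01];
 [:: sK01; sX0; sCX01; sCCX01; sK01; sX1];
 [:: sK01; sX0; sCX01; sCCX12; sK12; sX1];
 [:: sK01; sX0; sCX02; sCCX12; sCZ12; sK12];
 [:: sK01; sX0; sCX02; sCCX12; sK12; sX2];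
 [:: sK01; sX0; sCZ02; sCCX01; sK01; sX2];
 [:: sK01; sX0; sZ0; sCX20; sCCX01; sK01];
 [:: sK01; sX1; sCZ12; sCCX01; sK01; sX2];
 [:: sK01; sX1; sX0; sCCX01; sK01; sX0];
 [:: sK01; sX1; sZ1; sCX01; sCCX12; sK12];
 [:: sK01; sX1; sZ1; sCX21; sCCX01; sK01];
 [:: sK01; sX1; sZ2; sCCX01; sK01; sX2];
 [:: sK01; sX2; sCX20; sCCX01; sCZ01; sK01];
 [:: sK01; sX2; sCX21; sCCX01; sCZ01; sK01];
 [:: sK01; sX2; sCX21; sCCX01; sK01; sX1];
 [:: sK01; sX2; sZ2; sCX02; sCCX12; sK12];
 [:: sK01; sZ0; sCX10; sCX21; sCCX01; sK01];
 [:: sK01; sZ0; sX2; sCX21; sCCX01; sK01];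
 [:: sK01; sZ1; sCX01; sCX20; sCCX01; sK01];
 [:: sK01; sZ1; sCX02; sK01; sZ0; sX0];
 [:: sK01; sZ1; sCX20; sK12; sX2; sX0];
 [:: sK01; sZ1; sCX21; sCCX01; sCX02; sK01];
 [:: sK01; sZ1; sCX21; sCCX01; sK01; sX2];
 [:: sK01; sZ1; sX0; sCX01; sCCX12; sK12];
 [:: sK01; sZ1; sX2; sCX20; sCCX01; sK01];
 [:: sK01; sZ1; sX2; sCX21; sCCX01; sK01];
 [:: sK01; sZ2; sCX02; sCCX12; sK12; sX0];
 [:: sK01; sZ2; sCX10; sCX21; sCCX01; sK01];
 [:: sK01; sZ2; sX0; sCCX01; sK01; sX0];
 [:: sK01; sZ2; sX0; sCX01; sCCX12; sK12];
 [:: sK01; sZ2; sX0; sCX02; sCCX12; sK12];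
 [:: sK01; sZ2; sX1; sCCX01; sCX12; sK01];
 [:: sK01; sZ2; sX1; sCCX01; sK01; sX1];
 [:: sK01; sZ2; sX2; sCX21; sCCX01; sK01];
 [:: sK12; sCCX12; sCX02; sCZ01; sK01; sX2];
 [:: sK12; sCCX12; sCX02; sK01; sZ0; sX0];
 [:: sK12; sCCX12; sCX10; sCZ12; sK12; sX0];
 [:: sK12; sCCX12; sCX10; sK12; sZ1; sX1];
 [:: sK12; sCCX12; sCX20; sCZ12; sK12; sX0];
 [:: sK12; sCCX12; sCX21; sK12; sZ1; sX1];
 [:: sK12; sCCX12; sCZ02; sCX10; sK12; sX0];
 [:: sK12; sCCX12; sCZ12; sCX01; sCX12; sK01];
 [:: sK12; sCCX12; sCZ12; sK12; sZ1; sX1];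
 [:: sK12; sCCX12; sCZ12; sK12; sZ2; sX2];
 [:: sK12; sCCX12; sK12; sX2; sZ2; sX2];
 [:: sK12; sCCX12; sX2; sCZ12; sK12; sX2];
 [:: sK12; sCX01; sCCX01; sK01; sZ1; sX1];
 [:: sK12; sCX01; sCCX12; sK12; sZ1; sX1];
 [:: sK12; sCX01; sCCX12; sK12; sZ2; sX2];
 [:: sK12; sCX01; sCZ01; sCCX12; sK12; sX0];
 [:: sK12; sCX01; sCZ02; sCCX12; sK12; sX0];
 [:: sK12; sCX01; sX1; sCCX12; sK12; sX1];
 [:: sK12; sCX01; sX2; sCCX12; sK12; sX2];
 [:: sK12; sCX01; sZ0; sCCX12; sCX02; sK01];
 [:: sK12; sCX01; sZ0; sCCX12; sK12; sX0];
 [:: sK12; sCX01; sZ0; sCX20; sCCX01; sK01];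
 [:: sK12; sCX02; sCCX12; sK12; sZ1; sX1];
 [:: sK12; sCX02; sCCX12; sK12; sZ2; sX2];
 [:: sK12; sCX02; sCX01; sCCX12; sK12; sX0];
 [:: sK12; sCX02; sCZ01; sCCX12; sK12; sX0];
 [:: sK12; sCX02; sCZ02; sCCX12; sK12; sX0];
 [:: sK12; sCX02; sX2; sCCX12; sK12; sX2];
 [:: sK12; sCX10; sCCX02; sCZ01; sCX12; sK01];
 [:: sK12; sCX10; sCCX02; sZ0; sCX12; sK01];
 [:: sK12; sCX10; sCX21; sCCX01; sK01; sX0];
 [:: sK12; sCX10; sCX21; sCCX01; sK01; sX1];
 [:: sK12; sCX10; sCX21; sCCX01; sK01; sX2];
 [:: sK12; sCX10; sX1; sCCX12; sK12; sX1];
 [:: sK12; sCX12; sCCX12; sK12; sZ2; sX2];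
 [:: sK12; sCX12; sCX01; sCCX12; sK12; sX0];
 [:: sK12; sCX20; sCCX01; sCZ01; sCX12; sK01];
 [:: sK12; sCX20; sCCX01; sCZ01; sK01; sX2];
 [:: sK12; sCX20; sCCX01; sK01; sX2; sX0];
 [:: sK12; sCX20; sCCX01; sK01; sX2; sX1];
 [:: sK12; sCX20; sCCX01; sK01; sZ0; sX0];
 [:: sK12; sCX20; sCZ02; sCCX01; sK01; sX2];
 [:: sK12; sCX20; sCZ12; sCCX01; sK01; sX2];
 [:: sK12; sCX20; sX0; sCCX01; sK01; sX0];
 [:: sK12; sCX20; sX2; sCCX12; sK12; sX2];
 [:: sK12; sCX21; sCCX01; sK01; sZ1; sX1];
 [:: sK12; sCX21; sCCX12; sK12; sZ1; sX1];
 [:: sK12; sCX21; sCX02; sCCX12; sK12; sX0];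
 [:: sK12; sCX21; sCZ02; sCCX01; sK01; sX2];
 [:: sK12; sCX21; sCZ12; sCCX01; sK01; sX2];
 [:: sK12; sCX21; sX1; sCCX01; sK01; sX1];
 [:: sK12; sCX21; sZ0; sCX20; sCCX01; sK01];
 [:: sK12; sCZ01; sCX01; sCCX12; sK12; sX0];
 [:: sK12; sCZ01; sX0; sCX02; sCCX12; sK12];
 [:: sK12; sCZ02; sCX02; sCCX12; sK12; sX0];
 [:: sK12; sCZ02; sX0; sCX01; sCCX12; sK12];
 [:: sK12; sCZ12; sX2; sCCX12; sCX02; sK01];
 [:: sK12; sCZ12; sX2; sCCX12; sK12; sX2];
 [:: sK12; sCZ12; sX2; sCX20; sCCX01; sK01];
 [:: sK12; sK01; sX2; sCX21; sCCX01; sK01];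
 [:: sK12; sS01; sX0; sCX01; sCCX12; sK12];
 [:: sK12; sX0; sCX01; sCCX12; sCZ12; sK12];
 [:: sK12; sX0; sCX01; sCCX12; sK12; sX1];
 [:: sK12; sX0; sCX02; sCCX12; sCZ12; sK12];
 [:: sK12; sX0; sCX02; sCCX12; sK12; sX2];
 [:: sK12; sX0; sZ0; sCCX12; sK12; sX0];
 [:: sK12; sX0; sZ0; sCX20; sCCX01; sK01];
 [:: sK12; sX1; sCCX12; sCZ02; sCX10; sK12];
 [:: sK12; sX1; sZ1; sCX01; sCCX12; sK12];
 [:: sK12; sX1; sZ1; sCX21; sCCX01; sK01];
 [:: sK12; sX2; sCCX12; sCZ01; sCX02; sK01];
 [:: sK12; sX2; sCX01; sCCX12; sK12; sX0];
 [:: sK12; sX2; sCX20; sCCX01; sCZ01; sK01];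
 [:: sK12; sX2; sZ2; sCX02; sCCX12; sK12];
 [:: sK12; sZ0; sCX12; sCX01; sCCX12; sK12];
 [:: sK12; sZ0; sX0; sCX01; sCCX12; sK12];
 [:: sK12; sZ0; sX1; sCCX12; sK12; sX1];
 [:: sK12; sZ0; sX2; sCCX12; sK12; sX2];
 [:: sK12; sZ0; sX2; sCX21; sCCX01; sK01];
 [:: sK12; sZ1; sCX01; sCCX12; sCX02; sK01];
 [:: sK12; sZ1; sCX01; sCCX12; sK12; sX0];
 [:: sK12; sZ1; sCX01; sCX20; sCCX01; sK01];
 [:: sK12; sZ1; sX0; sCX01; sCCX12; sK12];
 [:: sK12; sZ1; sX0; sCX02; sCCX12; sK12];
 [:: sK12; sZ1; sX1; sCCX12; sK12; sX1];
 [:: sK12; sZ2; sCX02; sCCX12; sK12; sX0];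
 [:: sK12; sZ2; sCX12; sCX01; sCCX12; sK12];
 [:: sK12; sZ2; sX0; sCX01; sCCX12; sK12];
 [:: sK12; sZ2; sX0; sCX02; sCCX12; sK12];
 [:: sK12; sZ2; sX2; sCCX12; sK12; sX2];
 [:: sS01; sCX01; sCCX12; sCZ12; sK12; sX0];
 [:: sS01; sCX01; sCCX12; sK12; sX2; sX0];
 [:: sS01; sCX01; sCZ02; sCCX12; sK12; sX0];
 [:: sS01; sCX02; sCCX12; sK12; sX1; sX0];
 [:: sS01; sCX02; sCZ01; sCCX12; sK12; sX0];
 [:: sS01; sCZ01; sX0; sCX02; sCCX12; sK12];
 [:: sS01; sCZ02; sX0; sCX01; sCCX12; sK12];
 [:: sS01; sCZ12; sK12; sX2; sZ2; sX2];
 [:: sS01; sK12; sCX10; sCX21; sCCX01; sK01];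
 [:: sS01; sK12; sCX20; sCCX01; sCX12; sK01];
 [:: sS01; sK12; sCX20; sCCX01; sK01; sX2];
 [:: sS01; sX0; sZ0; sCCX12; sK12; sX0];
 [:: sS01; sZ1; sX0; sCX02; sCCX12; sK12];
 [:: sS01; sZ2; sX0; sCX01; sCCX12; sK12];
 [:: sS12; sCX20; sCCX01; sK01; sX2; sX0];
 [:: sS12; sCX20; sCZ02; sCCX01; sK01; sX2];
 [:: sS12; sCX21; sCZ12; sCCX01; sK01; sX2];
 [:: sS12; sK12; sCX20; sCCX01; sK01; sX1];
 [:: sS12; sX0; sZ0; sCX20; sCCX01; sK01];
 [:: sS12; sX1; sZ1; sCX21; sCCX01; sK01];
 [:: sX0; sCX01; sCCX12; sK12; sZ1; sX1];
 [:: sX0; sCX01; sCCX12; sK12; sZ2; sX2];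
 [:: sX0; sCX01; sCX12; sCCX12; sK12; sX2];
 [:: sX0; sCX02; sCCX12; sK12; sZ1; sX1];
 [:: sX0; sCX02; sCCX12; sK12; sZ2; sX2];
 [:: sX0; sCX02; sK01; sCX21; sCCX01; sK01];
 [:: sX0; sCX21; sCCX01; sK01; sX2; sX1];
 [:: sX0; sCX21; sCZ12; sCCX01; sK01; sX2];
 [:: sX0; sCX21; sX1; sCCX01; sK01; sX1];
 [:: sX0; sCX21; sZ2; sCCX01; sK01; sX2];
 [:: sX0; sCZ02; sX2; sCX21; sCCX01; sK01];
 [:: sX0; sK01; sCX12; sCCX02; sCX10; sK12];
 [:: sX0; sK01; sCX12; sCX01; sCCX12; sK12];
 [:: sX0; sK12; sCCX12; sK12; sZ2; sX2];
 [:: sX0; sK12; sCX20; sCCX01; sK01; sX1];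
 [:: sX0; sX1; sZ1; sCX21; sCCX01; sK01];
 [:: sX0; sZ0; sCX10; sCCX02; sCX12; sK01];
 [:: sX0; sZ0; sCX10; sCX21; sCCX01; sK01];
 [:: sX1; sCX01; sX2; sCCX12; sK12; sX2];
 [:: sX1; sCX02; sCZ01; sCCX12; sK12; sX0];
 [:: sX1; sCX10; sCX21; sCCX01; sK01; sX1];
 [:: sX1; sCX12; sCX01; sCCX12; sK12; sX1];
 [:: sX1; sCX20; sS01; sK12; sZ1; sX1];
 [:: sX1; sCX21; sX0; sCCX01; sK01; sX0];
 [:: sX1; sCZ01; sX0; sCCX01; sK01; sX0];
 [:: sX1; sCZ02; sS01; sK12; sZ1; sX1];
 [:: sX1; sCZ12; sK12; sCCX12; sK12; sX0];
 [:: sX1; sK01; sCX12; sCCX02; sCX10; sK12];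
 [:: sX1; sK01; sCX12; sCX01; sCCX12; sK12];
 [:: sX1; sK12; sCX10; sCCX02; sCX12; sK01];
 [:: sX1; sK12; sCX10; sCX21; sCCX01; sK01];
 [:: sX1; sS12; sX1; sCZ01; sK01; sX1];
 [:: sX1; sZ1; sCX01; sCX20; sCCX01; sK01];
 [:: sX2; sCCX02; sCX10; sCZ12; sK12; sX0];
 [:: sX2; sCCX02; sCX12; sK01; sZ2; sX2];
 [:: sX2; sCX01; sCZ02; sCCX12; sK12; sX0];
 [:: sX2; sCX01; sX1; sCCX12; sK12; sX1];
 [:: sX2; sCX20; sCCX01; sK01; sZ0; sX0];
 [:: sX2; sCX20; sCCX01; sK01; sZ1; sX1];
 [:: sX2; sCX20; sK12; sCX01; sCCX12; sK12];
 [:: sX2; sCX21; sCCX01; sK01; sZ0; sX0];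
 [:: sX2; sCX21; sCCX01; sK01; sZ1; sX1];
 [:: sX2; sCX21; sCX10; sCCX01; sK01; sX0];
 [:: sX2; sCZ01; sCX01; sCCX12; sK12; sX0];
 [:: sX2; sCZ02; sX0; sCX01; sCCX12; sK12];
 [:: sX2; sCZ12; sX1; sCCX12; sK12; sX1];
 [:: sX2; sK12; sCCX12; sK12; sX1; sX0];
 [:: sX2; sK12; sCX10; sCCX02; sCX12; sK01];
 [:: sX2; sK12; sCX10; sCX21; sCCX01; sK01];
 [:: sX2; sK12; sCX20; sCCX01; sCX12; sK01];
 [:: sX2; sK12; sCX20; sCCX01; sK01; sX1];
 [:: sX2; sK12; sZ1; sCX01; sCCX12; sK12];
 [:: sX2; sX1; sZ1; sCX01; sCCX12; sK12];
 [:: sX2; sZ2; sCX12; sCCX02; sCX10; sK12];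
 [:: sX2; sZ2; sCX12; sCX01; sCCX12; sK12];
 [:: sZ0; sCX01; sX2; sCCX12; sK12; sX2];
 [:: sZ0; sCX10; sX1; sCCX12; sK12; sX1];
 [:: sZ0; sCX12; sCX01; sCCX12; sK12; sX2];
 [:: sZ0; sCX20; sK12; sCX01; sCCX12; sK12];
 [:: sZ0; sCX20; sX0; sCCX01; sK01; sX0];
 [:: sZ0; sCX21; sCCX01; sK01; sZ2; sX2];
 [:: sZ0; sCX21; sX0; sCCX01; sK01; sX0];
 [:: sZ0; sK12; sCX10; sCCX02; sCX12; sK01];
 [:: sZ0; sK12; sCX10; sCX21; sCCX01; sK01];
 [:: sZ0; sK12; sCX20; sCCX01; sK01; sX1];
 [:: sZ0; sX0; sCCX01; sCZ01; sCX02; sK01];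
 [:: sZ0; sX0; sCCX02; sCZ02; sCX10; sK12];
 [:: sZ0; sX0; sCX01; sCCX12; sK12; sX1];
 [:: sZ0; sX0; sCX02; sCCX12; sK12; sX2];
 [:: sZ0; sZ1; sCX21; sCCX01; sK01; sX2];
 [:: sZ0; sZ1; sX2; sCCX12; sCX02; sK01];
 [:: sZ0; sZ1; sX2; sCX20; sCCX01; sK01];
 [:: sZ1; sCCX02; sCX10; sK12; sZ1; sX1];
 [:: sZ1; sCCX02; sCX12; sK01; sZ1; sX1];
 [:: sZ1; sCX01; sCCX12; sCX10; sK12; sX2];
 [:: sZ1; sCX01; sX1; sCCX12; sK12; sX1];
 [:: sZ1; sCX21; sCCX01; sK01; sZ0; sX0];
 [:: sZ1; sCX21; sX0; sCCX01; sK01; sX0];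
 [:: sZ1; sCX21; sX1; sCCX01; sK01; sX1];
 [:: sZ1; sX1; sCCX12; sCZ02; sCX10; sK12];
 [:: sZ1; sZ2; sX0; sCX01; sCCX12; sK12];
 [:: sZ2; sCX01; sCCX12; sK12; sZ0; sX0];
 [:: sZ2; sCX01; sCX20; sCCX01; sK01; sX1];
 [:: sZ2; sCX02; sCCX12; sK12; sZ1; sX1];
 [:: sZ2; sCX02; sX0; sCCX01; sK01; sX0];
 [:: sZ2; sCX02; sX2; sCCX12; sK12; sX2];
 [:: sZ2; sCX10; sCX21; sCCX01; sK01; sX0];
 [:: sZ2; sCX21; sCX10; sCCX01; sK01; sX0];
 [:: sZ2; sCX21; sX0; sCCX01; sK01; sX0];
 [:: sZ2; sK01; sCX12; sCCX02; sCX10; sK12];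
 [:: sZ2; sK01; sCX12; sCX01; sCCX12; sK12];
 [:: sZ2; sK12; sCX20; sCCX01; sK01; sX1];
 [:: sZ2; sK12; sZ1; sCX01; sCCX12; sK12];
 [:: sZ2; sX2; sCX20; sCCX01; sK01; sX0];
 [:: sZ2; sX2; sCX21; sCCX01; sK01; sX1];
 [:: sZ2; sZ1; sCX01; sCCX12; sK12; sX0];
 [:: sCCX01; sCX20; sCZ02; sCX10; sK12; sZ1; sX1];
 [:: sCCX02; sCX01; sCZ01; sCX12; sK01; sZ1; sX1];
 [:: sCCX02; sCX10; sCZ01; sCX02; sK01; sZ0; sX0];
 [:: sCCX02; sCX20; sCZ02; sCX10; sK12; sZ1; sX1];
 [:: sCCX02; sCZ01; sCX01; sCX12; sK01; sZ2; sX2];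
 [:: sCCX02; sX1; sCX20; sS01; sK12; sZ1; sX1];
 [:: sCCX12; sCX01; sCZ01; sCX12; sK01; sZ1; sX1];
 [:: sCX01; sCX02; sCZ12; sK01; sCCX01; sK01; sX1];
 [:: sCX01; sCX02; sK01; sCX21; sCCX01; sK01; sX2];
 [:: sCX01; sCX20; sCX12; sZ2; sCCX01; sK01; sX2];
 [:: sCX01; sCX20; sCZ01; sK01; sCCX01; sK01; sX2];
 [:: sCX01; sCX20; sK12; sCX01; sCCX12; sK12; sX0];
 [:: sCX01; sCX20; sK12; sX0; sCX01; sCCX12; sK12];
 [:: sCX01; sCZ01; sCZ12; sK12; sCCX12; sK12; sX0];
 [:: sCX01; sCZ01; sK01; sCZ02; sCCX01; sK01; sX2];
 [:: sCX01; sCZ12; sK01; sCCX01; sCZ01; sK01; sX2];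
 [:: sCX01; sCZ12; sK01; sCCX01; sK01; sX2; sX1];
 [:: sCX01; sCZ12; sK12; sCCX12; sK12; sX2; sX0];
 [:: sCX01; sCZ12; sK12; sCCX12; sK12; sZ2; sX2];
 [:: sCX01; sK01; sX2; sCX21; sCCX01; sK01; sX1];
 [:: sCX01; sK01; sZ0; sX2; sCX21; sCCX01; sK01];
 [:: sCX01; sK01; sZ1; sCX21; sCCX01; sK01; sX2];
 [:: sCX01; sX0; sCX02; sK01; sCX21; sCCX01; sK01];
 [:: sCX01; sX2; sCX20; sK12; sCX01; sCCX12; sK12];
 [:: sCX01; sZ0; sCX20; sK12; sCX01; sCCX12; sK12];
 [:: sCX02; sCX01; sCCX12; sK12; sX2; sZ2; sX2];
 [:: sCX02; sCX01; sCZ12; sK12; sCCX12; sK12; sX0];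
 [:: sCX02; sCX10; sCZ02; sK01; sCCX01; sK01; sX1];
 [:: sCX02; sCX10; sK12; sCX02; sCCX12; sK12; sX0];
 [:: sCX02; sCX10; sK12; sCX20; sCCX01; sK01; sX1];
 [:: sCX02; sCX21; sCZ01; sK01; sCCX01; sK01; sX2];
 [:: sCX02; sCZ01; sK01; sCCX01; sK01; sZ0; sX0];
 [:: sCX02; sCZ02; sCZ12; sK01; sCCX01; sK01; sX1];
 [:: sCX02; sCZ02; sCZ12; sK12; sCCX12; sK12; sX0];
 [:: sCX02; sCZ12; sCX10; sK01; sCCX01; sK01; sX1];
 [:: sCX02; sCZ12; sCX12; sK01; sCCX01; sK01; sX1];
 [:: sCX02; sCZ12; sK01; sCCX01; sK01; sX2; sX1];
 [:: sCX02; sCZ12; sK12; sCCX12; sCX02; sK01; sX1];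
 [:: sCX02; sCZ12; sK12; sCCX12; sK12; sX1; sX0];
 [:: sCX02; sCZ12; sK12; sCCX12; sK12; sZ2; sX2];
 [:: sCX02; sCZ12; sK12; sCX20; sCCX01; sK01; sX1];
 [:: sCX02; sCZ12; sK12; sCZ01; sCCX12; sK12; sX0];
 [:: sCX02; sCZ12; sK12; sX0; sCX02; sCCX12; sK12];
 [:: sCX02; sK01; sCX02; sCX01; sCCX12; sK12; sX0];
 [:: sCX02; sK01; sCX12; sCX01; sCCX12; sK12; sX0];
 [:: sCX02; sK01; sCX12; sCX01; sCCX12; sK12; sX1];
 [:: sCX02; sK01; sCX12; sCX01; sCCX12; sK12; sX2];
 [:: sCX02; sK01; sCX21; sCCX01; sK01; sZ0; sX0];
 [:: sCX02; sK01; sCX21; sCCX01; sK01; sZ1; sX1];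
 [:: sCX02; sK01; sCX21; sCZ12; sCCX01; sK01; sX2];
 [:: sCX02; sK01; sCX21; sZ2; sCX02; sCCX12; sK12];
 [:: sCX02; sK01; sCZ12; sCX21; sCCX01; sK01; sX2];
 [:: sCX02; sK01; sX2; sCX21; sCCX01; sK01; sX1];
 [:: sCX02; sK01; sZ0; sCX10; sCX21; sCCX01; sK01];
 [:: sCX02; sK01; sZ1; sCX01; sCX20; sCCX01; sK01];
 [:: sCX02; sK01; sZ1; sCX21; sCCX01; sCX02; sK01];
 [:: sCX02; sK01; sZ1; sCX21; sCCX01; sK01; sX2];
 [:: sCX02; sK01; sZ1; sX2; sCX21; sCCX01; sK01];
 [:: sCX02; sK01; sZ2; sX2; sCX21; sCCX01; sK01];
 [:: sCX02; sK12; sX0; sCX01; sCCX12; sK12; sX1];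
 [:: sCX02; sX1; sCZ12; sK12; sCCX12; sK12; sX0];
 [:: sCX02; sZ2; sK01; sCX12; sCCX02; sCX10; sK12];
 [:: sCX02; sZ2; sK01; sCX12; sCX01; sCCX12; sK12];
 [:: sCX02; sZ2; sK12; sCX20; sCCX01; sK01; sX1];
 [:: sCX10; sCCX02; sCZ01; sCX12; sK01; sZ2; sX2];
 [:: sCX10; sCX02; sCZ12; sK12; sCCX12; sK12; sX0];
 [:: sCX10; sCX12; sK01; sCX20; sCCX01; sK01; sX2];
 [:: sCX10; sCX21; sCX02; sZ2; sCCX01; sK01; sX2];
 [:: sCX10; sCX21; sX2; sZ2; sCCX01; sK01; sX2];
 [:: sCX10; sK01; sCX02; sCZ02; sCCX12; sK12; sX0];
 [:: sCX10; sK12; sCX10; sCX21; sCCX01; sK01; sX0];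
 [:: sCX10; sK12; sCX10; sCX21; sCCX01; sK01; sX1];
 [:: sCX10; sK12; sCX10; sCX21; sCCX01; sK01; sX2];
 [:: sCX10; sK12; sCX12; sCX01; sCCX12; sK12; sX0];
 [:: sCX10; sK12; sCX20; sCCX01; sK01; sX2; sX0];
 [:: sCX10; sK12; sCX20; sCCX01; sK01; sZ0; sX0];
 [:: sCX10; sK12; sCX20; sCZ02; sCCX01; sK01; sX2];
 [:: sCX10; sK12; sCX20; sX0; sCCX01; sK01; sX0];
 [:: sCX10; sK12; sCX21; sCX02; sCCX12; sK12; sX0];
 [:: sCX10; sK12; sX0; sZ0; sCX20; sCCX01; sK01];
 [:: sCX10; sK12; sZ1; sCX01; sCX20; sCCX01; sK01];
 [:: sCX10; sK12; sZ2; sCX02; sCCX12; sK12; sX0];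
 [:: sCX10; sX0; sCX02; sK01; sCX21; sCCX01; sK01];
 [:: sCX10; sZ0; sK12; sCX10; sCX21; sCCX01; sK01];
 [:: sCX10; sZ0; sK12; sCX20; sCCX01; sK01; sX1];
 [:: sCX10; sZ1; sCCX02; sCX12; sK01; sZ1; sX1];
 [:: sCX10; sZ1; sCX21; sX1; sCCX01; sK01; sX1];
 [:: sCX10; sZ2; sCX02; sX2; sCCX12; sK12; sX2];
 [:: sCX12; sCX01; sCCX12; sK12; sX2; sZ2; sX2];
 [:: sCX12; sCX01; sCZ12; sK01; sCCX01; sK01; sX1];
 [:: sCX12; sCX01; sX0; sZ0; sCCX12; sK12; sX0];
 [:: sCX12; sCX20; sCZ01; sK01; sCCX01; sK01; sX2];
 [:: sCX12; sCZ02; sCZ12; sK01; sCCX01; sK01; sX1];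
 [:: sCX12; sCZ02; sCZ12; sK12; sCCX12; sK12; sX0];
 [:: sCX12; sCZ12; sK12; sCX20; sCCX01; sK01; sX1];
 [:: sCX12; sCZ12; sK12; sCZ01; sCCX12; sK12; sX0];
 [:: sCX12; sK01; sCX02; sCCX12; sK12; sZ2; sX2];
 [:: sCX12; sK01; sCX02; sCZ02; sCCX12; sK12; sX0];
 [:: sCX12; sK01; sCX02; sX2; sCCX12; sK12; sX2];
 [:: sCX12; sK01; sCX12; sCX01; sCCX12; sK12; sX2];
 [:: sCX12; sK01; sCX20; sCZ02; sCCX01; sK01; sX2];
 [:: sCX12; sK01; sX2; sZ2; sCX02; sCCX12; sK12];
 [:: sCX12; sK01; sZ0; sCX10; sCX21; sCCX01; sK01];
 [:: sCX12; sK01; sZ1; sCX01; sCX20; sCCX01; sK01];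
 [:: sCX12; sK12; sCX20; sCCX01; sK01; sX2; sX0];
 [:: sCX12; sK12; sCX20; sCZ02; sCCX01; sK01; sX2];
 [:: sCX12; sK12; sX0; sCX01; sCCX12; sK12; sX1];
 [:: sCX12; sK12; sX0; sCX02; sCCX12; sCZ12; sK12];
 [:: sCX12; sK12; sX0; sCX02; sCCX12; sK12; sX2];
 [:: sCX12; sK12; sX0; sZ0; sCCX12; sK12; sX0];
 [:: sCX12; sK12; sZ1; sX0; sCX02; sCCX12; sK12];
 [:: sCX12; sZ1; sCCX02; sCX10; sK12; sZ1; sX1];
 [:: sCX12; sZ2; sK01; sCX12; sCX01; sCCX12; sK12];
 [:: sCX12; sZ2; sK12; sCX20; sCCX01; sK01; sX1];
 [:: sCX20; sCX01; sCZ12; sK12; sCCX12; sK12; sX0];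
 [:: sCX20; sCX12; sX2; sZ2; sCCX01; sK01; sX2];
 [:: sCX20; sCX21; sCZ01; sK01; sCCX01; sK01; sX1];
 [:: sCX20; sCZ01; sCX10; sK01; sCCX01; sK01; sX1];
 [:: sCX20; sCZ01; sCX12; sK01; sCCX01; sK01; sX1];
 [:: sCX20; sCZ01; sK01; sCCX01; sK01; sZ0; sX0];
 [:: sCX20; sCZ01; sK12; sCCX12; sK12; sX2; sX0];
 [:: sCX20; sCZ02; sK12; sZ1; sCX01; sCCX12; sK12];
 [:: sCX20; sCZ12; sK12; sCCX12; sK12; sZ2; sX2];
 [:: sCX20; sK01; sZ0; sCX10; sCX21; sCCX01; sK01];
 [:: sCX20; sK01; sZ1; sCX21; sCCX01; sK01; sX2];
 [:: sCX20; sK12; sCX01; sCCX12; sK12; sZ1; sX1];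
 [:: sCX20; sK12; sCX01; sCCX12; sK12; sZ2; sX2];
 [:: sCX20; sK12; sCX01; sX1; sCCX12; sK12; sX1];
 [:: sCX20; sK12; sCX01; sX2; sCCX12; sK12; sX2];
 [:: sCX20; sK12; sCX10; sCCX02; sCZ01; sCX12; sK01];
 [:: sCX20; sK12; sCX10; sCX21; sCCX01; sK01; sX0];
 [:: sCX20; sK12; sCX12; sCCX12; sK12; sZ2; sX2];
 [:: sCX20; sK12; sCZ01; sCX01; sCCX12; sK12; sX0];
 [:: sCX20; sK12; sX1; sZ1; sCX01; sCCX12; sK12];
 [:: sCX20; sK12; sZ0; sX0; sCX01; sCCX12; sK12];
 [:: sCX20; sK12; sZ1; sCX01; sCCX12; sK12; sX0];
 [:: sCX20; sK12; sZ1; sX0; sCX01; sCCX12; sK12];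
 [:: sCX20; sK12; sZ1; sX1; sCCX12; sK12; sX1];
 [:: sCX20; sK12; sZ2; sCX12; sCX01; sCCX12; sK12];
 [:: sCX20; sX0; sZ0; sCX10; sCCX02; sCX12; sK01];
 [:: sCX20; sX2; sCX01; sX1; sCCX12; sK12; sX1];
 [:: sCX20; sZ0; sCX21; sX0; sCCX01; sK01; sX0];
 [:: sCX20; sZ0; sK12; sCX10; sCX21; sCCX01; sK01];
 [:: sCX20; sZ1; sCX01; sX1; sCCX12; sK12; sX1];
 [:: sCX20; sZ1; sCX21; sX0; sCCX01; sK01; sX0];
 [:: sCX21; sCX02; sCCX12; sCZ12; sK12; sZ1; sX1];
 [:: sCX21; sCX02; sCCX12; sK12; sX2; sZ2; sX2];
 [:: sCX21; sCX02; sCX10; sZ0; sCCX12; sK12; sX0];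
 [:: sCX21; sCX02; sX0; sZ0; sCCX12; sK12; sX0];
 [:: sCX21; sCX02; sX2; sZ2; sCCX01; sK01; sX2];
 [:: sCX21; sCZ01; sK01; sCCX01; sK01; sX2; sX1];
 [:: sCX21; sCZ01; sK01; sCCX01; sK01; sZ0; sX0];
 [:: sCX21; sCZ01; sX0; sX1; sCCX01; sK01; sX1];
 [:: sCX21; sCZ12; sCX20; sCCX01; sK01; sX2; sX0];
 [:: sCX21; sK12; sX0; sCX01; sCCX12; sK12; sX1];
 [:: sCX21; sK12; sX0; sCX02; sCCX12; sK12; sX2];
 [:: sCX21; sK12; sX0; sZ0; sCCX12; sK12; sX0];
 [:: sCX21; sK12; sZ1; sCX01; sCCX12; sK12; sX0];
 [:: sCX21; sK12; sZ2; sX0; sCX01; sCCX12; sK12];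
 [:: sCZ01; sCX01; sCZ12; sK12; sCCX12; sK12; sX0];
 [:: sCZ01; sCX02; sK12; sCCX12; sK12; sX1; sX0];
 [:: sCZ01; sCX10; sCZ02; sK01; sCCX01; sK01; sX1];
 [:: sCZ01; sCX10; sK12; sCX20; sCCX01; sK01; sX1];
 [:: sCZ01; sCX12; sK12; sCCX12; sK12; sX1; sX0];
 [:: sCZ01; sCX20; sK12; sCCX12; sCX02; sK01; sX1];
 [:: sCZ01; sCX20; sK12; sCCX12; sK12; sX1; sX0];
 [:: sCZ01; sCX20; sK12; sCCX12; sK12; sZ2; sX2];
 [:: sCZ01; sCX21; sK12; sCCX12; sCZ12; sK12; sX0];
 [:: sCZ01; sCX21; sK12; sCCX12; sK12; sX2; sX0];
 [:: sCZ01; sCZ12; sCX12; sK01; sCCX01; sK01; sX1];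
 [:: sCZ01; sCZ12; sK01; sCCX01; sK01; sX2; sX1];
 [:: sCZ01; sCZ12; sK12; sCCX12; sCX02; sK01; sX1];
 [:: sCZ01; sCZ12; sK12; sCZ01; sCCX12; sK12; sX0];
 [:: sCZ01; sK01; sCCX01; sCX02; sK01; sZ0; sX0];
 [:: sCZ01; sK01; sCCX01; sCZ01; sK01; sZ0; sX0];
 [:: sCZ01; sK01; sCX02; sCCX12; sK12; sZ2; sX2];
 [:: sCZ01; sK01; sCX02; sX0; sCCX01; sK01; sX0];
 [:: sCZ01; sK01; sCX02; sX2; sCCX12; sK12; sX2];
 [:: sCZ01; sK01; sCX12; sCCX02; sCZ02; sCX10; sK12];
 [:: sCZ01; sK01; sCX12; sCX01; sCCX12; sK12; sX1];
 [:: sCZ01; sK01; sCX21; sX0; sCCX01; sK01; sX0];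
 [:: sCZ01; sK01; sCZ01; sX0; sCCX01; sK01; sX0];
 [:: sCZ01; sK01; sCZ12; sCX21; sCCX01; sK01; sX2];
 [:: sCZ01; sK01; sX2; sCX21; sCCX01; sK01; sX1];
 [:: sCZ01; sK01; sZ0; sCX10; sCX21; sCCX01; sK01];
 [:: sCZ01; sK01; sZ0; sX2; sCX21; sCCX01; sK01];
 [:: sCZ01; sK01; sZ1; sCX01; sCX20; sCCX01; sK01];
 [:: sCZ01; sK01; sZ1; sX2; sCX20; sCCX01; sK01];
 [:: sCZ01; sK12; sCCX12; sK12; sX2; sZ2; sX2];
 [:: sCZ01; sK12; sCX20; sCCX01; sK01; sX2; sX0];
 [:: sCZ01; sK12; sCX20; sCZ02; sCCX01; sK01; sX2];
 [:: sCZ01; sK12; sX0; sZ0; sCCX12; sK12; sX0];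
 [:: sCZ01; sK12; sZ1; sX0; sCX02; sCCX12; sK12];
 [:: sCZ01; sK12; sZ1; sX1; sCCX12; sK12; sX1];
 [:: sCZ01; sK12; sZ2; sX2; sCCX12; sK12; sX2];
 [:: sCZ01; sX0; sK01; sCX12; sCX01; sCCX12; sK12];
 [:: sCZ01; sX1; sCZ12; sK12; sCCX12; sK12; sX0];
 [:: sCZ01; sX1; sK01; sCX12; sCX01; sCCX12; sK12];
 [:: sCZ01; sZ2; sK01; sCX12; sCX01; sCCX12; sK12];
 [:: sCZ01; sZ2; sK12; sCX20; sCCX01; sK01; sX1];
 [:: sCZ02; sCX02; sCZ12; sK12; sCCX12; sK12; sX0];
 [:: sCZ02; sCX02; sK12; sCCX12; sK12; sX1; sX0];
 [:: sCZ02; sCX20; sCZ01; sK01; sCCX01; sK01; sX2];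
 [:: sCZ02; sCX21; sK12; sCCX12; sK12; sX2; sX0];
 [:: sCZ02; sCZ01; sK12; sCCX12; sK12; sX1; sX0];
 [:: sCZ02; sCZ12; sK01; sCCX01; sK01; sX2; sX1];
 [:: sCZ02; sCZ12; sK12; sCZ02; sCCX12; sK12; sX0];
 [:: sCZ02; sK01; sZ0; sCX10; sCX21; sCCX01; sK01];
 [:: sCZ02; sK01; sZ0; sX2; sCX21; sCCX01; sK01];
 [:: sCZ02; sK01; sZ1; sCX21; sCCX01; sK01; sX2];
 [:: sCZ02; sK12; sCCX12; sK12; sX2; sZ2; sX2];
 [:: sCZ02; sK12; sX0; sZ0; sCCX12; sK12; sX0];
 [:: sCZ02; sK12; sZ1; sCX01; sCCX12; sK12; sX0];
 [:: sCZ02; sK12; sZ1; sX1; sCCX12; sK12; sX1];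
 [:: sCZ02; sK12; sZ2; sX2; sCCX12; sK12; sX2];
 [:: sCZ02; sX0; sCX02; sK01; sCX21; sCCX01; sK01];
 [:: sCZ02; sX1; sCZ12; sK12; sCCX12; sK12; sX0];
 [:: sCZ02; sX2; sCX20; sK12; sCX01; sCCX12; sK12];
 [:: sCZ12; sCX02; sK01; sCCX01; sK01; sZ0; sX0];
 [:: sCZ12; sCX02; sK12; sCCX12; sK12; sX1; sX0];
 [:: sCZ12; sCX12; sCZ02; sK01; sCCX01; sK01; sX1];
 [:: sCZ12; sCX12; sK12; sCCX12; sK12; sX1; sX0];
 [:: sCZ12; sCX12; sK12; sCX20; sCCX01; sK01; sX1];
 [:: sCZ12; sCX21; sCZ01; sK01; sCCX01; sK01; sX2];
 [:: sCZ12; sCX21; sK12; sCCX12; sK12; sX2; sX0];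
 [:: sCZ12; sCZ01; sCX10; sK01; sCCX01; sK01; sX1];
 [:: sCZ12; sCZ01; sK01; sCCX01; sK01; sZ0; sX0];
 [:: sCZ12; sCZ01; sK12; sCCX12; sK12; sX1; sX0];
 [:: sCZ12; sCZ01; sK12; sCCX12; sK12; sX2; sX0];
 [:: sCZ12; sK01; sCX02; sCZ02; sCCX12; sK12; sX0];
 [:: sCZ12; sK12; sCCX12; sCX02; sK01; sZ0; sX0];
 [:: sCZ12; sK12; sCCX12; sK12; sX2; sZ2; sX2];
 [:: sCZ12; sK12; sCX01; sCCX12; sK12; sZ1; sX1];
 [:: sCZ12; sK12; sCX01; sCCX12; sK12; sZ2; sX2];
 [:: sCZ12; sK12; sCX01; sX1; sCCX12; sK12; sX1];
 [:: sCZ12; sK12; sCX01; sX2; sCCX12; sK12; sX2];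
 [:: sCZ12; sK12; sCX10; sCX21; sCCX01; sK01; sX1];
 [:: sCZ12; sK12; sCX20; sCCX01; sK01; sZ0; sX0];
 [:: sCZ12; sK12; sCX20; sX0; sCCX01; sK01; sX0];
 [:: sCZ12; sK12; sCX20; sX2; sCCX12; sK12; sX2];
 [:: sCZ12; sK12; sCZ01; sCX01; sCCX12; sK12; sX0];
 [:: sCZ12; sK12; sX0; sCX01; sCCX12; sK12; sX1];
 [:: sCZ12; sK12; sX0; sZ0; sCCX12; sK12; sX0];
 [:: sCZ12; sK12; sZ1; sCX01; sCX20; sCCX01; sK01];
 [:: sCZ12; sK12; sZ1; sX1; sCCX12; sK12; sX1];
 [:: sCZ12; sK12; sZ2; sCX12; sCX01; sCCX12; sK12];
 [:: sCZ12; sK12; sZ2; sX2; sCCX12; sK12; sX2];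
 [:: sK01; sCCX01; sCX10; sCX02; sK01; sZ0; sX0];
 [:: sK01; sCX01; sCX20; sCCX01; sK01; sZ0; sX0];
 [:: sK01; sCX01; sCX20; sCCX01; sK01; sZ1; sX1];
 [:: sK01; sCX01; sCX20; sCZ02; sCCX01; sK01; sX2];
 [:: sK01; sCX01; sCX21; sCCX01; sK01; sZ1; sX1];
 [:: sK01; sCX01; sCX21; sCCX12; sK12; sX1; sX0];
 [:: sK01; sCX01; sCX21; sCZ12; sCCX01; sK01; sX2];
 [:: sK01; sCX01; sX0; sCX02; sCCX12; sCZ12; sK12];
 [:: sK01; sCX01; sX0; sCX02; sCCX12; sK12; sX2];
 [:: sK01; sCX01; sX0; sZ0; sCCX12; sK12; sX0];
 [:: sK01; sCX01; sX0; sZ0; sCX20; sCCX01; sK01];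
 [:: sK01; sCX01; sX2; sZ2; sCX02; sCCX12; sK12];
 [:: sK01; sCX01; sZ0; sX2; sCX20; sCCX01; sK01];
 [:: sK01; sCX01; sZ2; sX0; sCX02; sCCX12; sK12];
 [:: sK01; sCX02; sCCX12; sCX10; sK12; sZ1; sX1];
 [:: sK01; sCX02; sCCX12; sCZ12; sK12; sZ1; sX1];
 [:: sK01; sCX02; sCCX12; sCZ12; sK12; sZ2; sX2];
 [:: sK01; sCX02; sCX01; sCCX12; sK12; sX1; sX0];
 [:: sK01; sCX02; sCX01; sX2; sCCX12; sK12; sX2];
 [:: sK01; sCX02; sCX21; sCCX01; sK01; sZ1; sX1];
 [:: sK01; sCX02; sCZ12; sK12; sCCX12; sK12; sX0];
 [:: sK01; sCX02; sCZ12; sX2; sCCX12; sK12; sX2];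
 [:: sK01; sCX02; sX0; sCX01; sCCX12; sK12; sX1];
 [:: sK01; sCX02; sX0; sZ0; sCCX12; sK12; sX0];
 [:: sK01; sCX02; sX2; sZ2; sCCX01; sK01; sX2];
 [:: sK01; sCX02; sZ2; sX0; sCCX01; sK01; sX0];
 [:: sK01; sCX02; sZ2; sX2; sCCX12; sK12; sX2];
 [:: sK01; sCX10; sCX20; sCCX01; sK01; sZ0; sX0];
 [:: sK01; sCX10; sCX20; sCZ02; sCCX01; sK01; sX2];
 [:: sK01; sCX10; sCX21; sCCX01; sK01; sZ0; sX0];
 [:: sK01; sCX10; sCX21; sCCX01; sK01; sZ1; sX1];
 [:: sK01; sCX10; sCX21; sCZ02; sCCX01; sK01; sX2];
 [:: sK01; sCX10; sCX21; sCZ12; sCCX01; sK01; sX2];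
 [:: sK01; sCX10; sCX21; sX0; sCCX01; sK01; sX0];
 [:: sK01; sCX10; sCX21; sZ2; sCCX01; sK01; sX2];
 [:: sK01; sCX10; sX0; sZ0; sCX20; sCCX01; sK01];
 [:: sK01; sCX10; sX1; sZ1; sCX21; sCCX01; sK01];
 [:: sK01; sCX10; sZ1; sX2; sCX21; sCCX01; sK01];
 [:: sK01; sCX10; sZ2; sX2; sCX21; sCCX01; sK01];
 [:: sK01; sCX12; sCCX02; sCX10; sCZ12; sK12; sX0];
 [:: sK01; sCX12; sCCX02; sCX10; sK12; sZ0; sX0];
 [:: sK01; sCX12; sCCX02; sCX10; sK12; sZ1; sX1];
 [:: sK01; sCX12; sCX01; sCCX12; sK12; sZ0; sX0];
 [:: sK01; sCX12; sCX01; sCCX12; sK12; sZ1; sX1];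
 [:: sK01; sCX12; sCX01; sCCX12; sK12; sZ2; sX2];
 [:: sK01; sCX12; sCX01; sCZ01; sCCX12; sK12; sX0];
 [:: sK01; sCX12; sCX01; sCZ02; sCCX12; sK12; sX0];
 [:: sK01; sCX12; sCX02; sCCX12; sK12; sZ2; sX2];
 [:: sK01; sCX12; sCX20; sCCX01; sK01; sZ0; sX0];
 [:: sK01; sCX12; sCZ01; sCX01; sCCX12; sK12; sX0];
 [:: sK01; sCX12; sX0; sCX02; sCCX12; sK12; sX2];
 [:: sK01; sCX12; sZ2; sX0; sCX01; sCCX12; sK12];
 [:: sK01; sCX20; sCCX01; sCZ01; sK01; sZ0; sX0];
 [:: sK01; sCX20; sCX01; sCCX01; sK01; sZ1; sX1];
 [:: sK01; sCX20; sCX21; sCCX01; sK01; sZ0; sX0];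
 [:: sK01; sCX20; sCX21; sCCX01; sK01; sZ1; sX1];
 [:: sK01; sCX20; sCX21; sCZ12; sCCX01; sK01; sX2];
 [:: sK01; sCX20; sCX21; sX0; sCCX01; sK01; sX0];
 [:: sK01; sCX20; sCX21; sZ2; sCCX01; sK01; sX2];
 [:: sK01; sCX20; sCZ01; sX0; sCCX01; sK01; sX0];
 [:: sK01; sCX20; sX0; sCX01; sCCX01; sK01; sX1];
 [:: sK01; sCX20; sX1; sCZ12; sCCX01; sK01; sX2];
 [:: sK01; sCX21; sCCX01; sCX02; sK01; sZ0; sX0];
 [:: sK01; sCX21; sCCX01; sCX12; sK01; sZ1; sX1];
 [:: sK01; sCX21; sCCX01; sCZ01; sK01; sZ0; sX0];
 [:: sK01; sCX21; sCCX01; sCZ01; sK01; sZ1; sX1];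
 [:: sK01; sCX21; sCCX01; sZ2; sCX12; sK01; sX2];
 [:: sK01; sCX21; sCX01; sCCX12; sK12; sZ1; sX1];
 [:: sK01; sCX21; sCX02; sCCX12; sK12; sZ1; sX1];
 [:: sK01; sCX21; sCX02; sCZ01; sCCX12; sK12; sX0];
 [:: sK01; sCX21; sCX10; sCCX01; sK01; sZ0; sX0];
 [:: sK01; sCX21; sCX12; sX1; sCCX01; sK01; sX1];
 [:: sK01; sCX21; sCX20; sCZ02; sCCX01; sK01; sX2];
 [:: sK01; sCX21; sCZ01; sX1; sCCX01; sK01; sX1];
 [:: sK01; sCX21; sCZ02; sCX02; sCCX12; sK12; sX0];
 [:: sK01; sCX21; sX0; sCX01; sCCX01; sK01; sX1];
 [:: sK01; sCX21; sX0; sCZ02; sCCX01; sK01; sX2];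
 [:: sK01; sCX21; sZ2; sX1; sCCX01; sCX12; sK01];
 [:: sK01; sCZ01; sCX02; sCX01; sCCX12; sK12; sX0];
 [:: sK01; sCZ01; sCX02; sX0; sCCX01; sK01; sX0];
 [:: sK01; sCZ01; sK12; sCCX12; sCX02; sK01; sX1];
 [:: sK01; sCZ01; sK12; sCX20; sCCX01; sK01; sX1];
 [:: sK01; sCZ02; sCX02; sCX01; sCCX12; sK12; sX0];
 [:: sK01; sCZ12; sCX02; sCX01; sCCX12; sK12; sX0];
 [:: sK01; sK12; sCX01; sCZ02; sCCX12; sK12; sX0];
 [:: sK01; sK12; sX0; sCX01; sCCX12; sK12; sX1];
 [:: sK01; sK12; sZ1; sCX01; sCCX12; sCX02; sK01];
 [:: sK01; sK12; sZ1; sCX01; sCCX12; sK12; sX0];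
 [:: sK01; sK12; sZ2; sX0; sCX01; sCCX12; sK12];
 [:: sK01; sS01; sCX02; sCZ01; sCCX12; sK12; sX0];
 [:: sK01; sS01; sCZ01; sX0; sCX02; sCCX12; sK12];
 [:: sK01; sS12; sX1; sZ1; sCX21; sCCX01; sK01];
 [:: sK01; sX0; sZ0; sCX10; sCX21; sCCX01; sK01];
 [:: sK01; sX1; sCX10; sCX21; sCCX01; sK01; sX1];
 [:: sK01; sX1; sCX12; sCX01; sCCX12; sK12; sX1];
 [:: sK01; sX1; sCX21; sX0; sCCX01; sK01; sX0];
 [:: sK01; sX1; sZ1; sCX01; sCX20; sCCX01; sK01];
 [:: sK01; sX2; sCX21; sCX10; sCCX01; sK01; sX0];
 [:: sK01; sX2; sZ2; sCX12; sCCX02; sCX10; sK12];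
 [:: sK01; sX2; sZ2; sCX12; sCX01; sCCX12; sK12];
 [:: sK01; sZ1; sCX01; sX1; sCCX12; sK12; sX1];
 [:: sK01; sZ1; sCX21; sCCX01; sK01; sZ0; sX0];
 [:: sK01; sZ1; sCX21; sX0; sCCX01; sK01; sX0];
 [:: sK01; sZ1; sCX21; sX1; sCCX01; sK01; sX1];
 [:: sK01; sZ2; sCX02; sCCX12; sK12; sZ1; sX1];
 [:: sK01; sZ2; sCX02; sX2; sCCX12; sK12; sX2];
 [:: sK01; sZ2; sCX21; sX0; sCCX01; sK01; sX0];
 [:: sK12; sCCX12; sCX21; sCX10; sK12; sZ1; sX1];
 [:: sK12; sCX01; sCCX12; sCX02; sK01; sZ0; sX0];
 [:: sK12; sCX01; sCCX12; sCZ12; sK12; sZ1; sX1];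
 [:: sK12; sCX01; sCCX12; sCZ12; sK12; sZ2; sX2];
 [:: sK12; sCX01; sCX02; sCZ02; sCCX12; sK12; sX0];
 [:: sK12; sCX01; sCX02; sZ0; sCCX12; sK12; sX0];
 [:: sK12; sCX01; sCX12; sCCX12; sK12; sZ2; sX2];
 [:: sK12; sCX01; sCX20; sCCX01; sK01; sX2; sX1];
 [:: sK12; sCX01; sCX20; sCCX01; sK01; sZ0; sX0];
 [:: sK12; sCX01; sCX20; sCCX01; sK01; sZ1; sX1];
 [:: sK12; sCX01; sCX20; sX2; sCCX12; sK12; sX2];
 [:: sK12; sCX01; sCX21; sCCX01; sK01; sZ1; sX1];
 [:: sK12; sCX01; sCZ12; sX1; sCCX12; sK12; sX1];
 [:: sK12; sCX01; sCZ12; sX2; sCCX12; sK12; sX2];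
 [:: sK12; sCX01; sX0; sZ0; sCX20; sCCX01; sK01];
 [:: sK12; sCX01; sX1; sCX12; sCCX12; sK12; sX2];
 [:: sK12; sCX01; sX2; sCCX12; sCZ01; sCX02; sK01];
 [:: sK12; sCX01; sX2; sCX20; sCCX01; sCZ01; sK01];
 [:: sK12; sCX01; sX2; sCX20; sCCX01; sK01; sX0];
 [:: sK12; sCX01; sX2; sZ2; sCX02; sCCX12; sK12];
 [:: sK12; sCX01; sZ0; sX2; sCX20; sCCX01; sK01];
 [:: sK12; sCX01; sZ2; sX0; sCX02; sCCX12; sK12];
 [:: sK12; sCX02; sCCX12; sCX10; sK12; sZ1; sX1];
 [:: sK12; sCX02; sCCX12; sCZ12; sK12; sZ1; sX1];
 [:: sK12; sCX02; sCCX12; sCZ12; sK12; sZ2; sX2];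
 [:: sK12; sCX02; sCX01; sX2; sCCX12; sK12; sX2];
 [:: sK12; sCX02; sCZ12; sX2; sCCX12; sK12; sX2];
 [:: sK12; sCX02; sX0; sZ0; sCX20; sCCX01; sK01];
 [:: sK12; sCX10; sCCX02; sCX12; sK01; sZ0; sX0];
 [:: sK12; sCX10; sCCX02; sCX12; sK01; sZ2; sX2];
 [:: sK12; sCX10; sCCX02; sS01; sK12; sZ1; sX1];
 [:: sK12; sCX10; sCX20; sCCX01; sK01; sZ0; sX0];
 [:: sK12; sCX10; sCX20; sCZ02; sCCX01; sK01; sX2];
 [:: sK12; sCX10; sCX21; sCCX01; sK01; sZ0; sX0];
 [:: sK12; sCX10; sCX21; sCCX01; sK01; sZ1; sX1];
 [:: sK12; sCX10; sCX21; sCCX01; sK01; sZ2; sX2];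
 [:: sK12; sCX10; sCX21; sCZ02; sCCX01; sK01; sX2];
 [:: sK12; sCX10; sCX21; sCZ12; sCCX01; sK01; sX2];
 [:: sK12; sCX10; sCX21; sX0; sCCX01; sK01; sX0];
 [:: sK12; sCX10; sCZ12; sCX21; sCCX01; sK01; sX2];
 [:: sK12; sCX10; sX0; sZ0; sCCX12; sK12; sX0];
 [:: sK12; sCX10; sX0; sZ0; sCX20; sCCX01; sK01];
 [:: sK12; sCX10; sX1; sZ1; sCX21; sCCX01; sK01];
 [:: sK12; sCX10; sX2; sCX21; sCCX01; sK01; sX1];
 [:: sK12; sCX10; sZ1; sX2; sCX21; sCCX01; sK01];
 [:: sK12; sCX12; sCX01; sCCX12; sK12; sZ1; sX1];
 [:: sK12; sCX12; sCX01; sCCX12; sK12; sZ2; sX2];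
 [:: sK12; sCX12; sCX01; sCZ01; sCCX12; sK12; sX0];
 [:: sK12; sCX12; sCX01; sCZ02; sCCX12; sK12; sX0];
 [:: sK12; sCX12; sCX01; sZ0; sCCX12; sK12; sX0];
 [:: sK12; sCX12; sCX02; sCCX12; sK12; sZ2; sX2];
 [:: sK12; sCX12; sCX20; sCCX01; sK01; sZ0; sX0];
 [:: sK12; sCX20; sCCX01; sCZ01; sK01; sZ0; sX0];
 [:: sK12; sCX20; sCX01; sCCX01; sK01; sZ1; sX1];
 [:: sK12; sCX20; sCX01; sCCX12; sK12; sZ1; sX1];
 [:: sK12; sCX20; sCX21; sCCX01; sK01; sX2; sX1];
 [:: sK12; sCX20; sCX21; sCCX01; sK01; sZ0; sX0];
 [:: sK12; sCX20; sCX21; sCCX01; sK01; sZ1; sX1];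
 [:: sK12; sCX20; sCX21; sCZ12; sCCX01; sK01; sX2];
 [:: sK12; sCX20; sCX21; sX0; sCCX01; sK01; sX0];
 [:: sK12; sCX20; sCZ01; sX0; sCCX01; sK01; sX0];
 [:: sK12; sCX20; sX0; sZ0; sCCX12; sK12; sX0];
 [:: sK12; sCX21; sCX01; sCCX12; sK12; sZ1; sX1];
 [:: sK12; sCX21; sCX01; sCZ01; sCCX12; sK12; sX0];
 [:: sK12; sCX21; sCX02; sCCX12; sK12; sZ1; sX1];
 [:: sK12; sCX21; sCX02; sCZ01; sCCX12; sK12; sX0];
 [:: sK12; sCX21; sCX02; sCZ02; sCCX12; sK12; sX0];
 [:: sK12; sCX21; sCX02; sZ0; sCCX12; sK12; sX0];
 [:: sK12; sCX21; sCZ02; sCX02; sCCX12; sK12; sX0];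
 [:: sK12; sCX21; sX1; sZ1; sCX01; sCCX12; sK12];
 [:: sK12; sCZ01; sCX02; sCX01; sCCX12; sK12; sX0];
 [:: sK12; sCZ02; sCX02; sCX01; sCCX12; sK12; sX0];
 [:: sK12; sCZ12; sCX02; sCX01; sCCX12; sK12; sX0];
 [:: sK12; sCZ12; sCX10; sX1; sCCX12; sK12; sX1];
 [:: sK12; sCZ12; sK12; sCCX12; sCX02; sK01; sX1];
 [:: sK12; sCZ12; sK12; sCX20; sCCX01; sK01; sX1];
 [:: sK12; sK01; sX2; sCX21; sCCX01; sK01; sX1];
 [:: sK12; sK01; sZ1; sCX01; sCX20; sCCX01; sK01];
 [:: sK12; sK01; sZ1; sCX21; sCCX01; sCX02; sK01];
 [:: sK12; sK01; sZ1; sCX21; sCCX01; sK01; sX2];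
 [:: sK12; sK01; sZ1; sX0; sCX01; sCCX12; sK12];
 [:: sK12; sS01; sCX01; sCZ02; sCCX12; sK12; sX0];
 [:: sK12; sS01; sCZ02; sX0; sCX01; sCCX12; sK12];
 [:: sK12; sS12; sX0; sZ0; sCX20; sCCX01; sK01];
 [:: sK12; sX0; sCX01; sCX12; sCCX12; sK12; sX2];
 [:: sK12; sX0; sZ0; sCX10; sCCX02; sCX12; sK01];
 [:: sK12; sX0; sZ0; sCX10; sCX21; sCCX01; sK01];
 [:: sK12; sX1; sCX01; sX2; sCCX12; sK12; sX2];
 [:: sK12; sX1; sCX10; sCX21; sCCX01; sK01; sX1];
 [:: sK12; sX1; sCX12; sCX01; sCCX12; sK12; sX1];
 [:: sK12; sX1; sCZ12; sK12; sCCX12; sK12; sX0];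
 [:: sK12; sX1; sZ1; sCX01; sCX20; sCCX01; sK01];
 [:: sK12; sX2; sCX01; sCZ02; sCCX12; sK12; sX0];
 [:: sK12; sX2; sCZ01; sCX01; sCCX12; sK12; sX0];
 [:: sK12; sX2; sZ2; sCX12; sCX01; sCCX12; sK12];
 [:: sK12; sZ0; sCX01; sX2; sCCX12; sK12; sX2];
 [:: sK12; sZ0; sCX10; sX1; sCCX12; sK12; sX1];
 [:: sK12; sZ1; sCX01; sX1; sCCX12; sK12; sX1];
 [:: sK12; sZ1; sX1; sCCX12; sCZ02; sCX10; sK12];
 [:: sK12; sZ2; sCX02; sCCX12; sK12; sZ1; sX1];
 [:: sK12; sZ2; sCX02; sX2; sCCX12; sK12; sX2];
 [:: sK12; sZ2; sX2; sCX20; sCCX01; sK01; sX0];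
 [:: sS01; sCX01; sX0; sZ0; sCCX12; sK12; sX0];
 [:: sS01; sCX02; sX0; sZ0; sCCX12; sK12; sX0];
 [:: sS01; sCX02; sZ2; sX2; sCCX12; sK12; sX2];
 [:: sS01; sK01; sCX02; sCZ02; sCCX12; sK12; sX0];
 [:: sS01; sK12; sCX20; sCCX01; sK01; sX2; sX0];
 [:: sS01; sK12; sCX20; sCCX01; sK01; sZ0; sX0];
 [:: sS01; sK12; sCX20; sCZ02; sCCX01; sK01; sX2];
 [:: sS01; sK12; sCX20; sX0; sCCX01; sK01; sX0];
 [:: sS01; sK12; sX0; sZ0; sCX20; sCCX01; sK01];
 [:: sS01; sZ2; sCX02; sX2; sCCX12; sK12; sX2];
 [:: sS12; sK01; sCX12; sCX01; sCCX12; sK12; sX1];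
 [:: sS12; sZ2; sK12; sCX20; sCCX01; sK01; sX1];
 [:: sX0; sCX01; sCX20; sCCX01; sK01; sZ0; sX0];
 [:: sX0; sCX01; sCX21; sCCX01; sK01; sZ1; sX1];
 [:: sX0; sCX02; sCX21; sCCX01; sK01; sX2; sX1];
 [:: sX0; sCZ01; sK12; sCX20; sCCX01; sK01; sX1];
 [:: sX0; sCZ02; sCX21; sCCX01; sK01; sZ2; sX2];
 [:: sX0; sCZ12; sK01; sCCX01; sK01; sX2; sX1];
 [:: sX0; sCZ12; sK12; sCCX12; sK12; sZ2; sX2];
 [:: sX0; sCZ12; sK12; sCX20; sCCX01; sK01; sX1];
 [:: sX0; sK01; sCX12; sCCX02; sCX10; sK12; sX2];
 [:: sX0; sK01; sCX12; sCX01; sCCX12; sK12; sX2];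
 [:: sX0; sK01; sX2; sCX21; sCCX01; sK01; sX1];
 [:: sX0; sK01; sZ1; sCX21; sCCX01; sK01; sX2];
 [:: sX0; sK12; sCX01; sCCX12; sK12; sZ2; sX2];
 [:: sX0; sK12; sCX12; sCCX12; sK12; sZ2; sX2];
 [:: sX0; sK12; sCX21; sCCX12; sK12; sZ1; sX1];
 [:: sX0; sK12; sCZ12; sX2; sCCX12; sK12; sX2];
 [:: sX0; sX1; sZ1; sCX01; sCX20; sCCX01; sK01];
 [:: sX0; sZ1; sCX21; sX1; sCCX01; sK01; sX1];
 [:: sX0; sZ2; sK01; sCX12; sCCX02; sCX10; sK12];
 [:: sX0; sZ2; sK01; sCX12; sCX01; sCCX12; sK12];
 [:: sX1; sCX02; sK01; sCCX01; sK01; sZ0; sX0];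
 [:: sX1; sCZ01; sCZ12; sK12; sCCX12; sK12; sX0];
 [:: sX1; sCZ01; sK01; sCX21; sCCX01; sCX02; sK01];
 [:: sX1; sCZ01; sK01; sCX21; sCCX01; sK01; sX2];
 [:: sX1; sCZ01; sK01; sCZ02; sCCX01; sK01; sX2];
 [:: sX1; sCZ02; sK12; sCCX12; sK12; sX2; sX0];
 [:: sX1; sCZ12; sK12; sCCX12; sCZ12; sK12; sX0];
 [:: sX1; sCZ12; sK12; sCZ02; sCCX12; sK12; sX0];
 [:: sX1; sCZ12; sK12; sX0; sCX01; sCCX12; sK12];
 [:: sX1; sK01; sCX02; sCZ02; sCCX12; sK12; sX0];
 [:: sX1; sK12; sCX20; sCCX01; sK01; sX2; sX0];
 [:: sX1; sK12; sCX20; sCZ02; sCCX01; sK01; sX2];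
 [:: sX1; sK12; sX0; sCX02; sCCX12; sK12; sX2];
 [:: sX1; sK12; sZ2; sCX02; sCCX12; sK12; sX0];
 [:: sX1; sS12; sK12; sCX20; sCCX01; sK01; sX1];
 [:: sX1; sX0; sCX02; sK01; sCX21; sCCX01; sK01];
 [:: sX1; sX0; sZ0; sCX10; sCCX02; sCX12; sK01];
 [:: sX1; sZ1; sCX21; sX0; sCCX01; sK01; sX0];
 [:: sX2; sCX01; sCX20; sCCX01; sK01; sZ0; sX0];
 [:: sX2; sCX01; sCZ12; sX1; sCCX12; sK12; sX1];
 [:: sX2; sCX21; sCX01; sCCX12; sK12; sZ1; sX1];
 [:: sX2; sCZ01; sK01; sCCX01; sK01; sZ0; sX0];
 [:: sX2; sCZ01; sK12; sCCX12; sK12; sX1; sX0];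
 [:: sX2; sCZ01; sK12; sCX20; sCCX01; sK01; sX1];
 [:: sX2; sCZ12; sK12; sCX20; sCCX01; sK01; sX1];
 [:: sX2; sK01; sCX21; sCCX01; sK01; sZ0; sX0];
 [:: sX2; sK12; sCX10; sCX21; sCCX01; sK01; sX0];
 [:: sX2; sK12; sX0; sCX01; sCCX12; sK12; sX1];
 [:: sX2; sK12; sZ1; sCX01; sCCX12; sK12; sX0];
 [:: sX2; sK12; sZ1; sX0; sCX02; sCCX12; sK12];
 [:: sX2; sX1; sCZ12; sK12; sCCX12; sK12; sX0];
 [:: sZ0; sCX10; sCX21; sCCX01; sK01; sZ2; sX2];
 [:: sZ0; sCX10; sK12; sCX10; sCX21; sCCX01; sK01];
 [:: sZ0; sCX12; sCX01; sCCX12; sK12; sZ1; sX1];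
 [:: sZ0; sCX12; sCX20; sK12; sCX01; sCCX12; sK12];
 [:: sZ0; sCX20; sK12; sCCX12; sCX02; sK01; sX1];
 [:: sZ0; sCX20; sK12; sCCX12; sK12; sZ2; sX2];
 [:: sZ0; sCX20; sK12; sCX01; sCCX12; sK12; sX0];
 [:: sZ0; sCX20; sK12; sX0; sCX01; sCCX12; sK12];
 [:: sZ0; sCZ12; sK12; sCX20; sCCX01; sK01; sX1];
 [:: sZ0; sK01; sCX01; sCCX01; sK01; sZ1; sX1];
 [:: sZ0; sK01; sZ1; sCX01; sCX20; sCCX01; sK01];
 [:: sZ0; sK12; sX0; sCX01; sCCX12; sK12; sX1];
 [:: sZ0; sK12; sX0; sCX02; sCCX12; sK12; sX2];
 [:: sZ0; sX0; sCX02; sK01; sCX21; sCCX01; sK01];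
 [:: sZ0; sX2; sCX20; sK12; sCX01; sCCX12; sK12];
 [:: sZ1; sCX01; sCX20; sCCX01; sK01; sZ2; sX2];
 [:: sZ1; sK01; sZ1; sCX21; sCCX01; sK01; sX2];
 [:: sZ1; sK12; sCX12; sCCX12; sK12; sZ2; sX2];
 [:: sZ2; sCX02; sCX01; sCCX12; sK12; sX1; sX0];
 [:: sZ2; sCX02; sCZ12; sK12; sCCX12; sK12; sX0];
 [:: sZ2; sCX02; sK01; sCX21; sCCX01; sK01; sX2];
 [:: sZ2; sCX10; sCX21; sX0; sCCX01; sK01; sX0];
 [:: sZ2; sCX12; sCCX02; sCX10; sK12; sZ1; sX1];
 [:: sZ2; sCX12; sCX01; sCCX12; sK12; sZ0; sX0];
 [:: sZ2; sCX12; sCX01; sCCX12; sK12; sZ1; sX1];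
 [:: sZ2; sK12; sCZ02; sX0; sCX01; sCCX12; sK12];
 [:: sZ2; sK12; sZ1; sCX01; sCCX12; sCX02; sK01];
 [:: sZ2; sK12; sZ1; sCX01; sCX20; sCCX01; sK01];
 [:: sZ2; sX0; sCX02; sK01; sCX21; sCCX01; sK01];
 [:: sZ2; sX2; sCX20; sK12; sCX01; sCCX12; sK12];
 [:: sCX01; sCX02; sK01; sCX21; sCCX01; sK01; sZ0; sX0];
 [:: sCX01; sCZ12; sK12; sCCX12; sK12; sX2; sZ2; sX2];
 [:: sCX01; sK12; sCX10; sCX21; sCCX01; sK01; sZ2; sX2];
 [:: sCX01; sX1; sCZ01; sK01; sCX21; sCCX01; sK01; sX2];
 [:: sCX01; sX1; sCZ01; sK01; sCZ02; sCCX01; sK01; sX2];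
 [:: sCX01; sZ2; sX2; sCX20; sK12; sCX01; sCCX12; sK12];
 [:: sCX02; sCZ02; sX1; sCZ12; sK12; sCCX12; sK12; sX0];
 [:: sCX02; sCZ12; sK12; sCCX12; sK12; sX2; sZ2; sX2];
 [:: sCX02; sCZ12; sK12; sCX20; sX2; sCCX12; sK12; sX2];
 [:: sCX02; sK01; sCX12; sCX01; sCCX12; sK12; sZ2; sX2];
 [:: sCX02; sK01; sX1; sZ1; sCX01; sCX20; sCCX01; sK01];
 [:: sCX10; sCX12; sK01; sCX02; sCCX12; sK12; sZ2; sX2];
 [:: sCX10; sCZ02; sK12; sCCX12; sK12; sX2; sZ2; sX2];
 [:: sCX10; sCZ02; sK12; sZ2; sX2; sCCX12; sK12; sX2];
 [:: sCX10; sK12; sCX02; sCX01; sX2; sCCX12; sK12; sX2];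
 [:: sCX10; sK12; sCX02; sCZ12; sX2; sCCX12; sK12; sX2];
 [:: sCX10; sK12; sCX12; sCX01; sCCX12; sK12; sZ1; sX1];
 [:: sCX10; sK12; sCX12; sCX01; sCCX12; sK12; sZ2; sX2];
 [:: sCX10; sK12; sCX20; sCX21; sCCX01; sK01; sZ0; sX0];
 [:: sCX10; sK12; sCX20; sCX21; sCCX01; sK01; sZ1; sX1];
 [:: sCX10; sK12; sCX20; sCX21; sX0; sCCX01; sK01; sX0];
 [:: sCX10; sK12; sCX21; sCX02; sCCX12; sK12; sZ1; sX1];
 [:: sCX10; sK12; sX0; sCX01; sCX12; sCCX12; sK12; sX2];
 [:: sCX10; sK12; sX0; sZ0; sCX10; sCX21; sCCX01; sK01];
 [:: sCX10; sK12; sX1; sZ1; sCX01; sCX20; sCCX01; sK01];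
 [:: sCX10; sK12; sZ2; sCX02; sX2; sCCX12; sK12; sX2];
 [:: sCX10; sX1; sK01; sCX02; sCZ02; sCCX12; sK12; sX0];
 [:: sCX10; sZ2; sX0; sCX02; sK01; sCX21; sCCX01; sK01];
 [:: sCX12; sCZ02; sK12; sCCX12; sK12; sX2; sZ2; sX2];
 [:: sCX12; sCZ02; sK12; sX0; sZ0; sCCX12; sK12; sX0];
 [:: sCX12; sK01; sCX02; sCX01; sX2; sCCX12; sK12; sX2];
 [:: sCX12; sK01; sX2; sZ2; sCX12; sCX01; sCCX12; sK12];
 [:: sCX12; sX1; sK12; sCX20; sCZ02; sCCX01; sK01; sX2];
 [:: sCX20; sCX12; sK12; sX0; sCX02; sCCX12; sK12; sX2];
 [:: sCX20; sCZ01; sK12; sCCX12; sK12; sX2; sZ2; sX2];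
 [:: sCX20; sCZ01; sK12; sZ1; sX1; sCCX12; sK12; sX1];
 [:: sCX20; sK01; sCX12; sCX01; sCCX12; sK12; sZ0; sX0];
 [:: sCX20; sK12; sCX01; sCCX12; sCX02; sK01; sZ0; sX0];
 [:: sCX20; sK12; sCX01; sCX12; sCCX12; sK12; sZ2; sX2];
 [:: sCX20; sK12; sCX01; sCX20; sCCX01; sK01; sZ0; sX0];
 [:: sCX20; sK12; sCX01; sCX20; sCCX01; sK01; sZ1; sX1];
 [:: sCX20; sK12; sCX01; sCZ12; sX1; sCCX12; sK12; sX1];
 [:: sCX20; sK12; sCX01; sX2; sCX20; sCCX01; sK01; sX0];
 [:: sCX20; sK12; sCX10; sCX21; sCCX01; sK01; sZ0; sX0];
 [:: sCX20; sK12; sCX10; sCX21; sX0; sCCX01; sK01; sX0];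
 [:: sCX20; sK12; sCX20; sCX21; sCCX01; sK01; sZ0; sX0];
 [:: sCX20; sK12; sX0; sZ0; sCX10; sCX21; sCCX01; sK01];
 [:: sCX20; sK12; sX2; sZ2; sCX12; sCX01; sCCX12; sK12];
 [:: sCX20; sK12; sZ1; sCX01; sX1; sCCX12; sK12; sX1];
 [:: sCX21; sCX02; sCZ12; sK12; sCCX12; sK12; sZ2; sX2];
 [:: sCX21; sCZ01; sK01; sCX02; sX0; sCCX01; sK01; sX0];
 [:: sCX21; sCZ01; sK01; sCX21; sX0; sCCX01; sK01; sX0];
 [:: sCX21; sCZ01; sK12; sCCX12; sK12; sX2; sZ2; sX2];
 [:: sCX21; sCZ01; sK12; sX0; sZ0; sCCX12; sK12; sX0];
 [:: sCX21; sK01; sCX12; sCCX02; sCX10; sK12; sZ0; sX0];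
 [:: sCX21; sX1; sCZ01; sCZ12; sK12; sCCX12; sK12; sX0];
 [:: sCX21; sZ2; sX2; sCX20; sK12; sCX01; sCCX12; sK12];
 [:: sCZ01; sCZ02; sK12; sCCX12; sK12; sX2; sZ2; sX2];
 [:: sCZ01; sCZ12; sCX12; sK12; sCCX12; sK12; sX1; sX0];
 [:: sCZ01; sCZ12; sK12; sCCX12; sK12; sX2; sZ2; sX2];
 [:: sCZ01; sK01; sCX02; sCZ12; sX2; sCCX12; sK12; sX2];
 [:: sCZ01; sK01; sCX12; sCX01; sCCX12; sK12; sZ1; sX1];
 [:: sCZ01; sK01; sCZ01; sCX02; sX0; sCCX01; sK01; sX0];
 [:: sCZ01; sK01; sX0; sZ0; sCX10; sCX21; sCCX01; sK01];
 [:: sCZ01; sK01; sX1; sZ1; sCX01; sCX20; sCCX01; sK01];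
 [:: sCZ01; sK01; sX2; sZ2; sCX12; sCX01; sCCX12; sK12];
 [:: sCZ02; sCZ12; sK12; sCCX12; sK12; sX2; sZ2; sX2];
 [:: sCZ02; sX1; sCZ01; sK01; sCZ02; sCCX01; sK01; sX2];
 [:: sCZ02; sZ0; sX0; sCX02; sK01; sCX21; sCCX01; sK01];
 [:: sCZ02; sZ2; sX2; sCX20; sK12; sCX01; sCCX12; sK12];
 [:: sCZ12; sK12; sCX02; sX0; sZ0; sCX20; sCCX01; sK01];
 [:: sCZ12; sK12; sCX10; sCX20; sCCX01; sK01; sZ0; sX0];
 [:: sCZ12; sK12; sCX10; sCX21; sCCX01; sK01; sZ1; sX1];
 [:: sCZ12; sK12; sCX20; sCZ01; sX0; sCCX01; sK01; sX0];
 [:: sCZ12; sK12; sX0; sCX01; sCX12; sCCX12; sK12; sX2];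
 [:: sCZ12; sK12; sX0; sZ0; sCX10; sCX21; sCCX01; sK01];
 [:: sCZ12; sK12; sX1; sZ1; sCX01; sCX20; sCCX01; sK01];
 [:: sCZ12; sK12; sX2; sZ2; sCX12; sCX01; sCCX12; sK12];
 [:: sCZ12; sK12; sZ0; sCX10; sX1; sCCX12; sK12; sX1];
 [:: sK01; sCCX01; sCX20; sCZ02; sCX10; sK12; sZ1; sX1];
 [:: sK01; sCX02; sCZ12; sK12; sCX20; sCCX01; sK01; sX1];
 [:: sK01; sCX02; sK01; sZ1; sCX01; sCX20; sCCX01; sK01];
 [:: sK01; sCX10; sZ2; sCX02; sX2; sCCX12; sK12; sX2];
 [:: sK01; sCX12; sCX01; sCCX12; sK12; sX2; sZ2; sX2];
 [:: sK01; sCX12; sCX01; sX0; sZ0; sCCX12; sK12; sX0];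
 [:: sK01; sCX12; sK12; sX0; sCX02; sCCX12; sK12; sX2];
 [:: sK01; sCX12; sZ1; sCCX02; sCX10; sK12; sZ1; sX1];
 [:: sK01; sCX20; sZ1; sCX21; sX0; sCCX01; sK01; sX0];
 [:: sK01; sCX21; sCX02; sCCX12; sCZ12; sK12; sZ1; sX1];
 [:: sK01; sCX21; sCX02; sX0; sZ0; sCCX12; sK12; sX0];
 [:: sK01; sCZ01; sK12; sX0; sZ0; sCCX12; sK12; sX0];
 [:: sK01; sCZ01; sK12; sZ1; sX1; sCCX12; sK12; sX1];
 [:: sK01; sK12; sCX01; sCX20; sCCX01; sK01; sZ0; sX0];
 [:: sK01; sK12; sZ1; sCX01; sX1; sCCX12; sK12; sX1];
 [:: sK01; sX0; sX1; sZ1; sCX01; sCX20; sCCX01; sK01];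
 [:: sK01; sZ0; sCX12; sCX01; sCCX12; sK12; sZ1; sX1];
 [:: sK01; sZ2; sCX10; sCX21; sX0; sCCX01; sK01; sX0];
 [:: sK01; sZ2; sCX12; sCCX02; sCX10; sK12; sZ1; sX1];
 [:: sK01; sZ2; sCX12; sCX01; sCCX12; sK12; sZ1; sX1];
 [:: sK12; sCX02; sCZ12; sK12; sCX20; sCCX01; sK01; sX1];
 [:: sK12; sCX10; sCX21; sX2; sZ2; sCCX01; sK01; sX2];
 [:: sK12; sCX10; sZ1; sCCX02; sCX12; sK01; sZ1; sX1];
 [:: sK12; sCX10; sZ1; sCX21; sX1; sCCX01; sK01; sX1];
 [:: sK12; sCX20; sX0; sZ0; sCX10; sCCX02; sCX12; sK01];
 [:: sK12; sCX20; sZ0; sCX21; sX0; sCCX01; sK01; sX0];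
 [:: sK12; sCX20; sZ1; sCX21; sX0; sCCX01; sK01; sX0];
 [:: sK12; sCX21; sCX02; sCCX12; sCZ12; sK12; sZ1; sX1];
 [:: sK12; sCZ12; sCX21; sK12; sCCX12; sK12; sX2; sX0];
 [:: sK12; sK01; sZ1; sCX21; sX1; sCCX01; sK01; sX1];
 [:: sK12; sX0; sX1; sZ1; sCX01; sCX20; sCCX01; sK01];
 [:: sK12; sZ0; sCX12; sCX01; sCCX12; sK12; sZ1; sX1];
 [:: sK12; sZ2; sCX10; sCX21; sX0; sCCX01; sK01; sX0];
 [:: sK12; sZ2; sCX12; sCX01; sCCX12; sK12; sZ1; sX1];
 [:: sS01; sK12; sX0; sZ0; sCX10; sCX21; sCCX01; sK01];
 [:: sS01; sX1; sK01; sCX02; sCZ02; sCCX12; sK12; sX0];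
 [:: sS12; sCX02; sZ2; sK12; sCX20; sCCX01; sK01; sX1];
 [:: sS12; sK01; sCX12; sCX01; sCCX12; sK12; sZ0; sX0];
 [:: sX0; sCX01; sCZ12; sK12; sCCX12; sK12; sZ2; sX2];
 [:: sX0; sCX02; sCZ12; sK12; sCCX12; sK12; sZ2; sX2];
 [:: sX0; sCX02; sK01; sCX21; sCCX01; sK01; sZ1; sX1];
 [:: sX0; sCX12; sCX01; sCZ12; sK01; sCCX01; sK01; sX1];
 [:: sX0; sCX12; sZ2; sK01; sCX12; sCX01; sCCX12; sK12];
 [:: sX0; sCZ01; sCZ12; sK01; sCCX01; sK01; sX2; sX1];
 [:: sX0; sCZ02; sCZ12; sK01; sCCX01; sK01; sX2; sX1];
 [:: sX0; sCZ12; sK12; sCX01; sCCX12; sK12; sZ2; sX2];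
 [:: sX0; sK01; sZ1; sCX21; sX1; sCCX01; sK01; sX1];
 [:: sX0; sZ2; sCX02; sK01; sCX21; sCCX01; sK01; sX2];
 [:: sX1; sCX12; sK12; sCX20; sCCX01; sK01; sX2; sX0];
 [:: sX1; sCX20; sK12; sCX01; sCCX12; sK12; sZ2; sX2];
 [:: sX1; sCZ01; sK01; sCX02; sCCX12; sK12; sZ2; sX2];
 [:: sX1; sCZ12; sK12; sCX20; sCCX01; sK01; sZ0; sX0];
 [:: sX1; sCZ12; sK12; sX0; sZ0; sCCX12; sK12; sX0];
 [:: sX1; sK12; sZ2; sCX02; sX2; sCCX12; sK12; sX2];
 [:: sX1; sZ2; sX2; sCX20; sK12; sCX01; sCCX12; sK12];
 [:: sX2; sCX20; sK12; sCX01; sCCX12; sK12; sZ1; sX1];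
 [:: sX2; sCX21; sCZ01; sK01; sCCX01; sK01; sZ0; sX0];
 [:: sX2; sCZ12; sK12; sX0; sZ0; sCCX12; sK12; sX0];
 [:: sX2; sK12; sZ1; sCX01; sX1; sCCX12; sK12; sX1];
 [:: sX2; sX1; sCZ01; sCZ12; sK12; sCCX12; sK12; sX0];
 [:: sX2; sZ2; sCX02; sK01; sCX21; sCCX01; sK01; sX2];
 [:: sX2; sZ2; sX0; sCX02; sK01; sCX21; sCCX01; sK01];
 [:: sZ0; sCX12; sK01; sZ0; sCX10; sCX21; sCCX01; sK01];
 [:: sZ0; sCX20; sK12; sCX01; sCCX12; sK12; sZ1; sX1];
 [:: sZ0; sX1; sX0; sCX02; sK01; sCX21; sCCX01; sK01];
 [:: sZ0; sZ2; sX2; sCX20; sK12; sCX01; sCCX12; sK12];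
 [:: sZ2; sCX02; sCX01; sCZ12; sK12; sCCX12; sK12; sX0];
 [:: sZ2; sCX02; sCZ12; sK12; sCCX12; sK12; sZ2; sX2];
 [:: sZ2; sCZ01; sK01; sZ0; sCX10; sCX21; sCCX01; sK01];
 [:: sZ2; sK12; sZ1; sCX01; sX1; sCCX12; sK12; sX1];
 [:: sCX02; sCZ02; sCZ12; sK12; sCCX12; sK12; sX2; sZ2; sX2];
 [:: sCX10; sK12; sZ0; sCX12; sCX01; sCCX12; sK12; sZ1; sX1];
 [:: sCX20; sCX12; sCZ02; sK12; sX0; sZ0; sCCX12; sK12; sX0];
 [:: sCX20; sK12; sCX10; sZ1; sCX21; sX1; sCCX01; sK01; sX1];
 [:: sCX21; sZ0; sZ2; sX2; sCX20; sK12; sCX01; sCCX12; sK12];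
 [:: sCZ12; sK12; sCX20; sX0; sZ0; sCX10; sCCX02; sCX12; sK01];
 [:: sCZ12; sK12; sCX20; sZ1; sCX21; sX0; sCCX01; sK01; sX0];
 [:: sS01; sCZ12; sK12; sX0; sZ0; sCX10; sCX21; sCCX01; sK01]].
Definition L2 : seq (seq sym) := [:: [::];
 [:: sS12; sCX20; sX0; sCZ01; sX0; sCX20; sS12];
 [:: sCX21; sX2; sX0; sCCX01; sX0; sX2; sCX21];
 [:: sCX21; sX0; sCZ01; sX0; sCX21; sCX21; sX2; sX0; sCCX01; sX0; sX2; sCX21];
 [:: sS12; sX0; sCCX01; sX0; sS12];
 [:: sS12; sX2; sX0; sCZ01; sX0; sX2; sS12; sS12; sX0; sCCX01; sX0; sS12];
 [:: sCX20; sX2; sX1; sCCX01; sX1; sX2; sCX20];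
 [:: sCX20; sX1; sCZ01; sX1; sCX20; sCX20; sX2; sX1; sCCX01; sX1; sX2; sCX20];
 [:: sS02; sX1; sCCX01; sX1; sS02];
 [:: sS02; sX2; sX1; sCZ01; sX1; sX2; sS02; sS02; sX1; sCCX01; sX1; sS02];
 [:: sCX21; sCX20; sX2; sCCX01; sX2; sCX20; sCX21];
 [:: sCX21; sCX20; sCZ01; sCX20; sCX21; sCX21; sCX20; sX2; sCCX01; sX2; sCX20; sCX21];
 [:: sS12; sCX20; sX0; sCCX01; sX0; sCX20; sS12];
 [:: sS12; sX2; sCX20; sCZ01; sCX20; sX2; sS12; sS12; sCX20; sX0; sCCX01; sX0; sCX20; sS12]].
Definition L3 : seq (seq sym) := [:: [::];
 [:: sCX20; sX0; sCZ01; sX0; sCX20];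
 [:: sX0; sCCX01; sX0];
 [:: sX2; sX0; sCZ01; sX0; sX2; sX0; sCCX01; sX0];
 [:: sS02; sCX21; sX0; sCCX01; sX0; sCX21; sS02];
 [:: sS12; sCX20; sX1; sCZ01; sX1; sCX20; sS12; sS02; sCX21; sX0; sCCX01; sX0; sCX21; sS02];
 [:: sCX10; sCX21; sCCX01; sCX21; sCX10];
 [:: sCX10; sCX21; sX2; sCZ01; sX2; sCX21; sCX10; sCX10; sCX21; sCCX01; sCX21; sCX10];
 [:: sS02; sX0; sCCX01; sX0; sS02];
 [:: sS02; sX2; sX0; sCZ01; sX0; sX2; sS02; sS02; sX0; sCCX01; sX0; sS02];
 [:: sCX20; sX0; sCCX01; sX0; sCX20];
 [:: sX2; sCX20; sCZ01; sCX20; sX2; sCX20; sX0; sCCX01; sX0; sCX20]].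
Definition L4 : seq (seq sym) := [:: [::];
 [:: sS02; sCZ01; sS02];
 [:: sCX01; sCX20; sX2; sCCX01; sX2; sCX20; sCX01];
 [:: sCX01; sCX20; sCZ01; sCX20; sCX01; sCX01; sCX20; sX2; sCCX01; sX2; sCX20; sCX01];
 [:: sS02; sCX21; sCCX01; sCX21; sS02];
 [:: sS12; sCX20; sCZ01; sCX20; sS12; sS02; sCX21; sCCX01; sCX21; sS02];
 [:: sCX20; sX2; sCCX01; sX2; sCX20];
 [:: sCX20; sCZ01; sCX20; sCX20; sX2; sCCX01; sX2; sCX20];
 [:: sS02; sCCX01; sS02];
 [:: sS02; sX2; sCZ01; sX2; sS02; sS02; sCCX01; sS02]].
Definition L5 : seq (seq sym) := [:: [::];
 [:: sCX21; sX1; sCZ01; sX1; sCX21];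
 [:: sX1; sCCX01; sX1];
 [:: sX2; sX1; sCZ01; sX1; sX2; sX1; sCCX01; sX1];
 [:: sS12; sX1; sCCX01; sX1; sS12];
 [:: sS12; sX2; sX1; sCZ01; sX1; sX2; sS12; sS12; sX1; sCCX01; sX1; sS12];
 [:: sCX21; sX1; sCCX01; sX1; sCX21];
 [:: sX2; sCX21; sCZ01; sCX21; sX2; sCX21; sX1; sCCX01; sX1; sCX21]].
Definition L6 : seq (seq sym) := [:: [::];
 [:: sS12; sCZ01; sS12];
 [:: sCX21; sX2; sCCX01; sX2; sCX21];
 [:: sCX21; sCZ01; sCX21; sCX21; sX2; sCCX01; sX2; sCX21];
 [:: sS12; sCCX01; sS12];
 [:: sS12; sX2; sCZ01; sX2; sS12; sS12; sCCX01; sS12]].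
Definition L7 : seq (seq sym) := [:: [::];
 [:: sCZ01];
 [:: sCCX01];
 [:: sX2; sCZ01; sX2; sCCX01]].

Section Main.
Variable R : realType.
Local Notation interp := (interp R).
Local Notation rep := (@rep R).

Lemma In_cat T (x : T) s1 s2 : List.In x (s1 ++ s2) <-> List.In x s1 \/ List.In x s2.
Proof.
elim: s1 => [|y s1 IH] /=; first by intuition.
rewrite IH; intuition.
Qed.

Lemma allIn T (f : pred T) s x : all f s -> List.In x s -> f x.
Proof.
elim: s => [|y s IH] //= /andP [Hy Hs] [<-|Hx] //; exact: IH.
Qed.

Lemma interp_cat w1 w2 : interp (w1 ++ w2) = interp w1 *m interp w2.
Proof.
elim: w1 => [|s w IH] /=; first by rewrite mul1mx.
by rewrite IH mulmxA.
Qed.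

Lemma I4_ok : rep I4 1%:M.
Proof.
rewrite /rep; apply/matrixP => i j; rewrite !mxE /zget /I4 nth_mkseq // nth_mkseq //.
by rewrite -val_eqE /=; case: eqP => _; rewrite ?Z2R4 ?mulr1 ?mulr0.
Qed.

Lemma gt_ok s : rep (gt s) (sem R s).
Proof. rewrite gtE; exact: gz_ok. Qed.

Lemma wz_ok w A : wz w = Some A -> rep A (interp w).
Proof.
elim: w A => [|s w IH] A /=; first by case=> <-; exact: I4_ok.
case E: (wz w) => [B|] // H.
exact: rep_mul (gt_ok s) (IH _ E) H.
Qed.

Lemma rep_inj A M N : rep A M -> rep A N -> M = N.
Proof. by rewrite /rep => -> /scale4_inj. Qed.

Lemma goodlev_rep AU p : goodlev AU -> List.In p AU -> rep p.2 (interp p.1).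
Proof. by move=> H /(allIn H) /eqP /wz_ok. Qed.

Lemma goodlevs_rep AL p : all goodlev AL -> List.In p (flatten AL) -> rep p.2 (interp p.1).
Proof.
elim: AL => [|AU AL IH] //= /andP [H1 H2] /In_cat [Hp|Hp].
  exact: goodlev_rep H1 Hp.
exact: IH.
Qed.

Lemma kpick_In (f : seq sym * zmat -> seq Z) AU key p :
  kpick (map (fun q => (f q, q)) AU) key = Some p -> List.In p AU.
Proof.
elim: AU => [|q AU IH] //=; case: ifP => _ ; first by case=> ->; left.
by move/IH; right.
Qed.

Lemma sift_In AL c c' g x : List.In x (sift (mkkeys AL c) c' g) -> List.In x (flatten AL).
Proof.
elim: AL c c' g => [|AU AL IH] c c' g //=.
case E: kpick => [p|] //= [<-|Hx]; apply/In_cat.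
  by left; exact: kpick_In E.
by right; exact: IH Hx.
Qed.

Lemma sift_hd AU AL c c' g p rest : sift (mkkeys (AU :: AL) c) c' g = p :: rest ->
  List.In p AU /\ (forall x, List.In x rest -> List.In x (flatten AL)).
Proof.
rewrite /=; case E: kpick => [q|] // [<- <-]; split; first exact: kpick_In E.
move=> x; exact: sift_In.
Qed.

Lemma prodm_ok ps Q : (forall p, List.In p ps -> rep p.2 (interp p.1)) ->
  prodm ps = Some Q -> rep Q (interp (flatten (map fst ps))).
Proof.
elim: ps Q => [|p ps IH] Q Hps /=; first by case=> <-; exact: I4_ok.
case E: (prodm ps) => [B|] // H.
rewrite interp_cat; apply: rep_mul H.
  by apply: Hps; left.
by apply: IH E => q Hq; apply: Hps; right.
Qed.

Definition certP (AU : alev) (AL' : seq alev) (Sg : alev) :=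
  forall v u, List.In v Sg -> List.In u AU -> exists u' ws, List.In u' AU /\
    (forall x, List.In x ws -> List.In x (flatten AL')) /\
    interp v.1 *m interp u.1 = interp u'.1 *m interp (flatten (map fst ws)).

Lemma chk1_ok AU AL' c (v u : seq sym * zmat) :
  rep v.2 (interp v.1) -> rep u.2 (interp u.1) ->
  (forall p, List.In p (flatten (AU :: AL')) -> rep p.2 (interp p.1)) ->
  chk1 (mkkeys (AU :: AL') c) c v.2 u.2 ->
  exists u' ws, List.In u' AU /\
    (forall x, List.In x ws -> List.In x (flatten AL')) /\
    interp v.1 *m interp u.1 = interp u'.1 *m interp (flatten (map fst ws)).
Proof.
move=> Hv Hu Hall; rewrite /chk1.
case E: zm4 => [P|] //.
case Es: sift => [|p rest] //.
case Ep: prodm => [Q|] // /eqP HPQ; subst Q.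
have [Hp Hrest] := sift_hd Es.
exists p, rest; split => //; split => //.
have H1 := rep_mul Hv Hu E.
have Hmem : forall q, List.In q (p :: rest) -> rep q.2 (interp q.1).
  by move=> q Hq; apply: Hall; rewrite -Es in Hq; exact: sift_In Hq.
have H3 := prodm_ok Hmem Ep.
rewrite /= interp_cat in H3.
exact: rep_inj H1 H3.
Qed.

Lemma certb_ok AU AL' c Sg :
  goodlev AU -> all goodlev AL' -> goodlev Sg -> certb AU AL' c Sg -> certP AU AL' Sg.
Proof.
move=> HU HL HS Hc v u Hv Hu.
apply: chk1_ok.
- exact: goodlev_rep HS Hv.
- exact: goodlev_rep HU Hu.
- by move=> p Hp; apply: (goodlevs_rep (AL := AU :: AL')) => //=; rewrite HU HL.
- exact: (allIn (allIn Hc Hv) Hu).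
Qed.

Fixpoint inP (AL : seq alev) (M : 'M[R]_8) : Prop :=
  match AL with
  | [::] => M = 1%:M
  | AU :: AL' => exists p, List.In p AU /\ exists N, inP AL' N /\ M = interp p.1 *m N
  end.

Definition closed (AL : seq alev) (Sg : alev) :=
  forall v, List.In v Sg -> forall M, inP AL M -> inP AL (interp v.1 *m M).

Lemma prod_closed AL' ws N : closed AL' (flatten AL') ->
  (forall x, List.In x ws -> List.In x (flatten AL')) -> inP AL' N ->
  inP AL' (interp (flatten (map fst ws)) *m N).
Proof.
move=> Hc; elim: ws => [|x ws IH] Hws HN /=; first by rewrite mul1mx.
rewrite interp_cat -mulmxA; apply: Hc; first by apply: Hws; left.
by apply: IH => // y Hy; apply: Hws; right.
Qed.

Lemma step AU AL' Sg : closed AL' (flatten AL') -> certP AU AL' Sg ->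
  closed (AU :: AL') Sg.
Proof.
move=> Hc Hcert v Hv M [p [Hp [N [HN ->]]]].
have [u' [ws [Hu' [Hws E]]]] := Hcert v p Hv Hp.
exists u'; split => //; exists (interp (flatten (map fst ws)) *m N); split.
  exact: prod_closed.
by rewrite mulmxA E mulmxA.
Qed.

Fixpoint certs (AL : seq alev) : Prop :=
  match AL with
  | [::] => True
  | AU :: AL' => certP AU AL' (flatten (AU :: AL')) /\ certs AL'
  end.

Lemma chain AL : certs AL -> closed AL (flatten AL).
Proof.
elim: AL => [|AU AL IH] /=; first by move=> _ v [].
move=> [H1 H2]; exact: step (IH H2) H1.
Qed.

Lemma all_goodlev_flatten AL : all goodlev AL -> goodlev (flatten AL).
Proof.
elim: AL => [|AU AL IH] //= /andP [H1 H2].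
by rewrite /goodlev all_cat; apply/andP; split; [exact: H1 | exact: IH].
Qed.

Lemma certsb_ok AL c : all goodlev AL -> certsb AL c -> certs AL.
Proof.
elim: AL c => [|AU AL IH] c //= /andP [H1 H2] /andP [H3 H4]; split.
  apply: certb_ok H3 => //.
  by rewrite /goodlev all_cat; apply/andP; split => //; exact: all_goodlev_flatten.
exact: IH H4.
Qed.

Fixpoint lmax (AU : alev) : nat :=
  match AU with [::] => 0%N | p :: AU' => maxn (toffoli_count p.1) (lmax AU') end.
Definition bound (AL : seq alev) : nat := sumn (map lmax AL).

Lemma lmax_le AU p : List.In p AU -> (toffoli_count p.1 <= lmax AU)%N.
Proof.
elim: AU => [|q AU IH] //= [<-|Hp]; first exact: leq_maxl.
exact: leq_trans (IH Hp) (leq_maxr _ _).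
Qed.

Lemma inP_bound AL M : inP AL M -> exists w, M = interp w /\ (toffoli_count w <= bound AL)%N.
Proof.
elim: AL M => [|AU AL IH] M /=; first by move=> ->; exists [::].
move=> [p [Hp [N [HN ->]]]].
have [w [-> Hw]] := IH N HN.
exists (p.1 ++ w); split; first by rewrite interp_cat.
rewrite /toffoli_count count_cat.
exact: leq_add (lmax_le Hp) Hw.
Qed.

Definition hasid (AL : seq alev) : bool :=
  all (fun AU => if AU is p :: _ then nilp p.1 else false) AL.

Lemma inP_one AL : hasid AL -> inP AL 1%:M.
Proof.
elim: AL => [|AU AL IH] //=.
case: AU => [|p AU] //= /andP [Hp HAL].
exists p; split; first by left.
exists 1%:M; split; first exact: IH.
by move: Hp => /nilP ->; rewrite /= mulmx1.
Qed.

End Main.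

Definition A1 := annot L1.
Definition ALr := map annot [:: L2; L3; L4; L5; L6; L7].
Definition ALL := A1 :: ALr.
Definition SG := annot (map (fun s => [:: s]) gens).

Lemma H_good : all goodlev ALL. Proof. vm_cast_no_check (erefl true). Qed.
Lemma H_sg : goodlev SG. Proof. vm_cast_no_check (erefl true). Qed.
Lemma H_certs : certsb ALr 1. Proof. vm_cast_no_check (erefl true). Qed.
Lemma H_top : certb A1 ALr 0 SG. Proof. vm_cast_no_check (erefl true). Qed.
Lemma H_id : hasid ALL. Proof. vm_cast_no_check (erefl true). Qed.
Lemma H_bound : (bound ALL <= 120)%N. Proof. vm_cast_no_check (erefl true). Qed.
Lemma H_exp : all (fun s => (wz [:: s] != None) && (wz (expand s) == wz [:: s])) syms. Proof. vm_cast_no_check (erefl true). Qed.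

Lemma syms_all s : List.In s syms.
Proof. case: s; simpl; repeat (first [left; reflexivity | right]). Qed.

Lemma expand_gens s x : List.In x (expand s) -> List.In x gens.
Proof.
case: s => /= H; repeat (case: H => [<-|H]; [simpl; repeat (first [left; reflexivity | right]) |]);
  case: H.
Qed.

Lemma In_map (T U : Type) (f : T -> U) x s : List.In x s -> List.In (f x) (map f s).
Proof. elim: s => [|y s IH] //= [->|H]; [by left | by right; apply: IH]. Qed.

Section Final.
Variable R : realType.

Lemma expand_ok s : interp R (expand s) = sem R s.
Proof.
have /andP [H1 /eqP H2] := allIn H_exp (syms_all s).
case E: (wz [:: s]) H1 H2 => [A|] // _ H2.
have HA := @wz_ok R _ _ E.
have HB := @wz_ok R _ _ H2.
by rewrite (rep_inj HB HA) /= mulmx1.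
Qed.

Lemma SG_has x : List.In x gens -> exists v, List.In v SG /\ v.1 = [:: x].
Proof.
move=> Hx; exists ([:: x], odflt [::] (wz [:: x])); split => //.
rewrite /SG /annot; apply: (In_map (fun w => (w, odflt [::] (wz w)))).
exact: (In_map (fun s => [:: s]) Hx).
Qed.

Lemma word_closed AL Sg w M : @closed R AL Sg ->
  (forall x, List.In x w -> exists v, List.In v Sg /\ v.1 = [:: x]) ->
  @inP R AL M -> @inP R AL (interp R w *m M).
Proof.
move=> Hc; elim: w => [|x w IH] Hw HM /=; first by rewrite mul1mx.
have [v [Hv Ev]] := Hw x (or_introl erefl).
rewrite -mulmxA.
have -> : sem R x = interp R v.1 by rewrite Ev /= mulmx1.
apply: Hc => //; apply: IH => // y Hy; apply: Hw; by right.
Qed.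

Lemma top_closed : @closed R ALL SG.
Proof.
have /andP [G1 G2] := H_good.
exact: (@step R A1 ALr SG (@chain R ALr (@certsb_ok R ALr 1 G2 H_certs))
          (@certb_ok R A1 ALr 0 SG G1 G2 H_sg H_top)).
Qed.

Lemma all_inP C : @inP R ALL (interp R C).
Proof.
elim: C => [|s C IH]; first exact: inP_one H_id.
change (interp R (s :: C)) with (sem R s *m interp R C).
rewrite -expand_ok; apply: (word_closed top_closed _ IH).
move=> x Hx; apply: SG_has; exact: expand_gens Hx.
Qed.

End Final.

Theorem corollary1 (R : realType) (C : seq sym) :
  exists C' : seq sym, (toffoli_count C' <= 120)%N /\ interp R C = interp R C'.
Proof.
have [w [Ew Hw]] := inP_bound (all_inP R C).
exists w; split; last exact: Ew.
exact: leq_trans Hw H_bound.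
Qed.
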